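(* Let $\mathcal{P}(3^3)$ be the graph whose vertices are the 280 partitions of $\{1,\ldots,9\}$ into three cells each of size three, two such partitions being adjacent if and only if each cell of one partition contains exactly one point from each cell of the other. Let $M$ be the $280\times 36$ $0/1$-matrix with rows indexed by these partitions and columns indexed by the 2-element subsets of $\{1,\ldots,9\}$, whose entry in row $\pi$ and column $\{i,j\}$ is $1$ if and only if $\{i,j\}$ is contained in a cell of $\pi$. If $x\in\mathbb{R}^{280}$ is the characteristic vector of an independent set of size $70$ in $\mathcal{P}(3^3)$, then $x$ lies in the column space of $M$. *)

(* Defs.v *)
From HB Require Import structures.
From mathcomp Require Import all_boot all_order all_algebra.
From mathcomp Require Import reals.
Set Implicit Arguments. Unset Strict Implicit. Unset Printing Implicit Defensive.
Import Order.TTheory GRing.Theory Num.Theory.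
Local Open Scope ring_scope.

(* The ground set {1,...,9} is represented by 'I_9 = {0,...,8}. *)

Definition is_part333 (P : {set {set 'I_9}}) : bool :=
  partition P [set: 'I_9] && [forall A in P, #|A| == 3].

Definition P333 := {P : {set {set 'I_9}} | is_part333 P}.

Definition adj333 (p q : P333) : bool :=
  [forall A in val p, forall B in val q, #|A :&: B| == 1].

Definition independent333 (S : {set P333}) : bool :=
  [forall p in S, forall q in S, ~~ adj333 p q].

Definition Pair9 := {A : {set 'I_9} | #|A| == 2}.

Definition Mpair (R : nzRingType) (p : P333) (e : Pair9) : R :=
  ([exists A in val p, val e \subset A] : bool)%:R.

Definition in_colspace (R : nzRingType) (x : P333 -> R) : Prop :=
  exists y : Pair9 -> R, forall p : P333, x p = \sum_(e : Pair9) Mpair R p e * y e.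

(* Main.v *)
Require Import Defs.
From HB Require Import structures.
From mathcomp Require Import all_boot all_order all_algebra.
From mathcomp Require Import reals.
From mathcomp Require Import zify ring.
Set Implicit Arguments. Unset Strict Implicit. Unset Printing Implicit Defensive.
Import Order.TTheory GRing.Theory Num.Theory.

Section Part.
Variable P : {set {set 'I_9}}.
Hypothesis HP : is_part333 P.

Lemma P_triv : trivIset P.
Proof. by case/andP: HP => /and3P[]. Qed.
Lemma P_cover x : x \in cover P.
Proof. by case/andP: HP => /and3P[/eqP-> _ _] _; rewrite inE. Qed.
Lemma P_card A : A \in P -> #|A| = 3.
Proof. by case/andP: HP => _ /forallP H AP; have := H A; rewrite AP => /eqP. Qed.
Lemma P_pmem x : pblock P x \in P.
Proof. exact: pblock_mem (P_cover x). Qed.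
Lemma P_inb x : x \in pblock P x.
Proof. by rewrite mem_pblock P_cover. Qed.
Lemma P_eqb x y : (pblock P x == pblock P y) = (y \in pblock P x).
Proof. exact: eq_pblock P_triv (P_cover x). Qed.
Lemma P_blk A : A \in P -> exists x, A = pblock P x.
Proof.
move=> AP; have : 0 < #|A| by rewrite P_card.
case/card_gt0P => x xA; exists x; by rewrite (def_pblock P_triv AP xA).
Qed.

Definition cidx (x : 'I_9) : nat := find (fun k => inord k \in pblock P x) (iota 0 9).

Lemma cidx_lt x : cidx x < 9.
Proof.
rewrite /cidx -[9]/(size (iota 0 9)) -has_find; apply/hasP; exists (val x).
  by rewrite mem_iota /=.
by rewrite inord_val P_inb.
Qed.

Lemma cidx_in x : inord (cidx x) \in pblock P x.
Proof.
have := cidx_lt x; rewrite /cidx -[9]/(size (iota 0 9)) -has_find => H.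
by have := nth_find 0 H; rewrite nth_iota ?add0n // -has_find.
Qed.

Lemma cidx_le x : cidx x <= x.
Proof.
rewrite leqNgt; apply/negP => /(before_find 0); rewrite nth_iota // add0n inord_val P_inb.
by [].
Qed.

Lemma cidx_eq x y : (cidx x == cidx y) = (pblock P x == pblock P y).
Proof.
apply/eqP/eqP => [E|E]; last by rewrite /cidx E.
have h1 := cidx_in x; have h2 := cidx_in y; rewrite E in h1.
by rewrite -(same_pblock P_triv h1) (same_pblock P_triv h2).
Qed.

Lemma cidx_idem x : cidx (inord (cidx x)) = cidx x.
Proof. apply/eqP; rewrite cidx_eq P_eqb.
by rewrite (same_pblock P_triv (cidx_in x)) P_inb. Qed.

Lemma pair_in (i j : 'I_9) : [exists A in P, [set i; j] \subset A] = (cidx i == cidx j).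
Proof.
rewrite cidx_eq; apply/existsP/idP => [[A /andP[AP]]|].
  rewrite subUset !sub1set => /andP[iA jA].
  by rewrite (def_pblock P_triv AP iA) (def_pblock P_triv AP jA).
move=> /eqP E; exists (pblock P i); rewrite P_pmem /= subUset !sub1set P_inb E P_inb.
by [].
Qed.

End Part.

Fixpoint genP (k : nat) : seq (seq nat) :=
  match k with
  | 0 => [:: [::]]
  | k'.+1 => [seq rcons s a | s <- genP k', a <- [seq a <- iota 0 k | (a == k') || (nth 0 s a == a)]]
  end.

Definition valid (l : seq nat) : bool :=
  all (fun i => [&& nth 0 l i <= i, nth 0 l (nth 0 l i) == nth 0 l i
                & count_mem (nth 0 l i) l == 3]) (iota 0 9).

Lemma genP_mem l : (forall i, i < size l -> nth 0 l i <= i /\ nth 0 l (nth 0 l i) = nth 0 l i) ->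
  l \in genP (size l).
Proof.
elim/last_ind: l => [|s x IH] H; first by rewrite inE.
rewrite size_rcons.
have Hs : forall i, i < size s -> nth 0 s i <= i /\ nth 0 s (nth 0 s i) = nth 0 s i.
  move=> i lti; have lti' : i < size (rcons s x) by rewrite size_rcons ltnS ltnW.
  have [h1 h2] := H i lti'.
  rewrite nth_rcons lti in h1 h2; split => //.
  by rewrite nth_rcons (leq_ltn_trans h1 lti) in h2.
have lts : size s < size (rcons s x) by rewrite size_rcons.
have [h1 h2] := H (size s) lts.
rewrite nth_rcons ltnn eqxx in h1 h2.
apply: (allpairs_f_dep (fun s a => rcons s a)); first exact: IH.
rewrite mem_filter mem_iota /= add0n ltnS h1 andbT.
case: (ltngtP x (size s)) h1 h2 => // lt _.
by rewrite nth_rcons lt => ->; rewrite eqxx orbT.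
Qed.

Lemma count_sum (T : Type) (s : seq T) (a : pred T) : count a s = \sum_(x <- s) (a x : nat).
Proof. by rewrite -sum1_count big_mkcond; apply: eq_bigr => i _; case: (a i). Qed.

Lemma sum_iota9 (G : nat -> nat) : \sum_(k <- iota 0 9) G k = \sum_(i < 9) G i.
Proof. by rewrite -(big_mkord xpredT G). Qed.

Section Code.
Variable P : {set {set 'I_9}}.
Hypothesis HP : is_part333 P.

Definition codeP : seq nat := [seq cidx P (inord k) | k <- iota 0 9].

Lemma size_code : size codeP = 9.
Proof. by rewrite size_map size_iota. Qed.

Lemma nth_code k : k < 9 -> nth 0 codeP k = cidx P (inord k).
Proof. by move=> lt; rewrite (nth_map 0) ?size_iota // nth_iota. Qed.

Lemma card_cls (a : {pred 'I_9}) :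
  count (fun k => (inord k : 'I_9) \in a) (iota 0 9) = #|a|.
Proof.
rewrite count_sum sum_iota9 -sum1_card [RHS]big_mkcond /=.
by apply: eq_bigr => i _; rewrite inord_val; case: (i \in a).
Qed.

Lemma count_code (x : 'I_9) : count_mem (cidx P x) codeP = 3.
Proof.
rewrite count_map.
rewrite (eq_count (a2 := fun k => (inord k : 'I_9) \in pblock P x)); last first.
  by move=> k /=; rewrite eq_sym cidx_eq // P_eqb.
by rewrite card_cls (P_card HP) // P_pmem.
Qed.

Lemma valid_code : valid codeP.
Proof.
apply/allP => i; rewrite mem_iota add0n => /andP[_ lti].
have ci := cidx_lt HP (inord i).
rewrite !nth_code // cidx_idem // eqxx count_code andbT.
by have := cidx_le HP (inord i); rewrite inordK.
Qed.

Lemma code_genP : codeP \in genP 9.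
Proof.
rewrite -{1}size_code; apply: genP_mem => i; rewrite size_code => lti.
have ci := cidx_lt HP (inord i).
rewrite !nth_code // cidx_idem //; split => //.
by have := cidx_le HP (inord i); rewrite inordK.
Qed.

End Code.

Definition pl : seq (nat * nat) :=
  [seq (i, j) | i <- iota 0 9, j <- [seq j <- iota 0 9 | i < j]].
Definition samec (l : seq nat) (ij : nat * nat) : bool := nth 0 l ij.1 == nth 0 l ij.2.
Definition Kc (l l' : seq nat) : nat := count (fun ij => samec l ij && samec l' ij) pl.
Definition adjc (l l' : seq nat) : bool :=
  all (fun a => all (fun b =>
     count (fun j => (nth 0 l j == nth 0 l a) && (nth 0 l' j == nth 0 l' b)) (iota 0 9) == 1)
   (iota 0 9)) (iota 0 9).

Lemma cidx_code P (HP : is_part333 P) (i : 'I_9) : nth 0 (codeP P) i = cidx P i.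
Proof. by rewrite nth_code // inord_val. Qed.

Lemma code_inj P Q : is_part333 P -> is_part333 Q -> codeP P = codeP Q -> P = Q.
Proof.
move=> HP HQ E.
have Ec i : cidx P i = cidx Q i by rewrite -(cidx_code HP) -(cidx_code HQ) E.
have Eb x : pblock P x = pblock Q x.
  apply/setP => y; rewrite -(P_eqb HP) -(P_eqb HQ) -!cidx_eq //.
  by rewrite !Ec.
apply/setP => A; apply/idP/idP => AP.
  by have [x ->] := P_blk HP AP; rewrite Eb P_pmem.
by have [x ->] := P_blk HQ AP; rewrite -Eb P_pmem.
Qed.

Lemma adj_bridge P Q : is_part333 P -> is_part333 Q -> adjc (codeP P) (codeP Q) ->
  [forall A in P, forall B in Q, #|A :&: B| == 1].
Proof.
move=> HP HQ H; apply/forallP => A; apply/implyP => AP; apply/forallP => B; apply/implyP => BQ.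
have [a ->] := P_blk HP AP; have [b ->] := P_blk HQ BQ.
have /allP /(_ a) := H; rewrite mem_iota ltn_ord => /(_ isT) /allP /(_ b).
rewrite mem_iota ltn_ord => /(_ isT) /eqP E.
apply/eqP; rewrite -[RHS]E -card_cls; apply: eq_in_count => k; rewrite mem_iota add0n => /andP[_ ltk].
rewrite inE.
rewrite !cidx_code // !nth_code // !(eq_sym (cidx _ (inord k))).
by rewrite !cidx_eq // !P_eqb.
Qed.

Definition Mb (P : {set {set 'I_9}}) (e : Pair9) : bool := [exists A in P, val e \subset A].

Lemma sum_Pair9 (F : {set 'I_9} -> nat) :
  \sum_(e : Pair9) F (val e) = \sum_(i : 'I_9) \sum_(j : 'I_9 | i < j) F [set i; j].
Proof.
have -> : \sum_(e : Pair9) F (val e) = \sum_(A : {set 'I_9} | #|A| == 2) F A.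
  rewrite (reindex_omap (val : Pair9 -> {set 'I_9}) insub); last by move=> A HA; rewrite insubT.
  apply: eq_bigl => e; rewrite valK eqxx andbT; case: e => A /= /eqP HA; by rewrite HA.
pose D := [set ij : 'I_9 * 'I_9 | ij.1 < ij.2].
pose h := fun ij : 'I_9 * 'I_9 => [set ij.1; ij.2].
rewrite (eq_bigl (fun A => A \in h @: D)); last first.
  move=> A; apply/idP/imsetP.
    case/cards2P => x [y [nxy ->]].
    case: (ltngtP x y) => [lt|gt|eq].
    - by exists (x, y); rewrite ?inE.
    - by exists (y, x); rewrite ?inE //= setUC.
    - by move: nxy; rewrite (val_inj eq) eqxx.
  case => [[x y]]; rewrite /D /h inE /= => lt ->; rewrite cards2.
  case: (x =P y) lt => [->|/eqP nxy _]; first by rewrite ltnn.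
  by [].
rewrite (@big_imset _ _ _ _ _ h D F) /=; last first.
  move=> [a b] [c d]; rewrite !inE /= => lab lcd; rewrite /h /= => E.
  have ha : a \in [set c; d] by rewrite -E !inE eqxx.
  have hb : b \in [set c; d] by rewrite -E !inE eqxx orbT.
  have hc : c \in [set a; b] by rewrite E !inE eqxx.
  move: ha hb hc; rewrite !inE => /orP[]/eqP ea /orP[]/eqP eb /orP[]/eqP ec; subst => //.
  all: try by rewrite ltnn in lab.
  by have := ltn_trans lab lcd; rewrite ltnn.
rewrite pair_big_dep; apply: eq_bigl => ij; by rewrite inE.
Qed.

Lemma Kab P Q : is_part333 P -> is_part333 Q ->
  \sum_(e : Pair9) (Mb P e * Mb Q e) = Kc (codeP P) (codeP Q).
Proof.
move=> HP HQ.
rewrite /Mb (sum_Pair9 (fun A => [exists B in P, A \subset B] * [exists B in Q, A \subset B])).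
rewrite /Kc count_sum /pl big_allpairs_dep sum_iota9.
apply: eq_bigr => i _.
rewrite big_filter.
transitivity (\sum_(j < 9 | i < j) ((samec (codeP P) (val i, val j) && samec (codeP Q) (val i, val j)) : nat)).
  by apply: eq_bigr => j _; rewrite /samec /= !pair_in // -!cidx_code // mulnb.
by rewrite -(big_mkord (fun j => i < j) (fun j : nat => (samec (codeP P) (val i, j) && samec (codeP Q) (val i, j)) : nat)).
Qed.

Definition cl_ok (K : seq (seq nat)) : bool :=
  match K with
  | [:: a; b; c; d] => [&& adjc a b, adjc a c, adjc a d, adjc b c & [&& adjc b d, adjc c d & uniq K]]
  | _ => false
  end.

Definition Qm (p : seq nat) (K : seq (seq nat)) : nat := if p \in K then 122 else 0.
Definition Qtab (s : nat) : nat :=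
  if s == 33 then 10 else if s == 21 then 1 else if s == 27 then 16 else 0.
Definition sqt (n : nat) : nat := match n with 2 => 4 | 3 => 9 | 5 => 25 | 9 => 81 | _ => 0 end.
Definition Qp (p : seq nat) (K : seq (seq nat)) : nat :=
  Qtab (sumn [seq sqt (Kc p m) | m <- K]).

Lemma sumn_le1 (s : seq nat) : all (fun n => n <= 1) s -> sumn s <= size s.
Proof. elim: s => //= a s IH /andP[a1 /IH]; lia. Qed.

Lemma sumn_all1 (s : seq nat) : all (fun n => n <= 1) s -> sumn s = size s -> all (fun n => n == 1) s.
Proof.
elim: s => //= a s IH /andP[a1 H] E.
have := sumn_le1 H => le.
have a1' : a = 1 by lia.
rewrite a1' eqxx /=; apply: IH => //; lia.
Qed.

Lemma cnt_swap (T : eqType) (s1 s2 : seq T) (a : pred T) : uniq s1 -> uniq s2 ->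
  count (fun t => a t && (t \in s2)) s1 = count (fun t => a t && (t \in s1)) s2.
Proof.
move=> u1 u2; rewrite -!size_filter; apply: perm_size; apply: uniq_perm.
- exact: filter_uniq.
- exact: filter_uniq.
by move=> t; rewrite !mem_filter; case: (a t); case: (t \in s1); case: (t \in s2).
Qed.

Section Conc.
Variables (Lst : seq (seq nat)) (Cl : seq (seq (seq nat))).
Hypothesis HU : uniq Lst.
Hypothesis HC1 : all cl_ok Cl.
Hypothesis HC2a : all (fun l => l \in Lst) (flatten Cl).
Hypothesis HC2b : all (fun l => count_mem l (flatten Cl) == 12) Lst.
Hypothesis HCsize : size Cl = 840.
Hypothesis HC3 : forall p t, p \in Lst -> t \in Lst ->
  24 * Kc p t + sumn [seq Qm p K | K <- Cl & t \in K]
  = (p == t) * 1680 + sumn [seq Qp p K | K <- Cl & t \in K].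
Hypothesis HC4 : forall p, p \in Lst ->
  sumn [seq Qp p K | K <- Cl] = 3360 + sumn [seq Qm p K | K <- Cl].

Variable x : seq nat -> bool.
Hypothesis Hx70 : count x Lst = 70.
Hypothesis Hxind : forall a b, adjc a b -> ~~ (x a && x b).
Hypothesis HxL : forall l, x l -> l \in Lst.

Lemma cnt_le1 K : K \in Cl -> count x K <= 1.
Proof.
move/(allP HC1); case: K => [|a [|b [|c [|d [|? ?]]]]] //=.
case/and5P => hab hac had hbc /and3P[hbd hcd _].
move: (Hxind hab) (Hxind hac) (Hxind had) (Hxind hbc) (Hxind hbd) (Hxind hcd).
by case: (x a); case: (x b); case: (x c); case: (x d).
Qed.

Lemma count_in (s : seq (seq nat)) : all (fun l => l \in Lst) s ->
  count x s = \sum_(l <- Lst) x l * count_mem l s.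
Proof.
elim: s => [|z s IH] /=; first by rewrite big1 // => l _; rewrite muln0.
case/andP => zL /IH ->.
rewrite [in RHS](eq_bigr (fun l => x l * (z == l) + x l * count_mem l s)); last first.
  by move=> l _; rewrite /= mulnDr.
rewrite big_split /=; congr (_ + _).
rewrite (eq_bigr (fun l => x z * (l == z))); last first.
  by move=> l _; rewrite eq_sym; case: eqP => [->|]; rewrite ?muln0.
by rewrite -big_distrr /= -count_sum count_uniq_mem // zL muln1.
Qed.

Lemma count_flat : count x (flatten Cl) = 840.
Proof.
rewrite count_in // (eq_big_seq (fun l => x l * 12)); last first.
  by move=> l /(allP HC2b) /eqP ->.
by rewrite -big_distrl /= -count_sum Hx70.
Qed.

Lemma cnt1 K : K \in Cl -> count x K = 1.
Proof.
have H : all (fun n => n == 1) [seq count x K | K <- Cl].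
  apply: sumn_all1; last by rewrite -count_flatten count_flat size_map HCsize.
  by apply/allP => n /mapP [K0 KC ->]; apply: cnt_le1.
by move=> KC; apply/eqP; move/allP: H; apply; apply: map_f.
Qed.

Lemma sum_Q (Q : seq nat -> seq (seq nat) -> nat) p :
  \sum_(t <- Lst | x t) sumn [seq Q p K | K <- Cl & t \in K] = sumn [seq Q p K | K <- Cl].
Proof.
transitivity (\sum_(t <- Lst | x t) \sum_(K <- Cl | t \in K) Q p K).
  by apply: eq_bigr => t _; rewrite sumnE big_map big_filter.
rewrite (exchange_big_dep predT) //= sumnE big_map; apply: eq_big_seq => K KC.
rewrite -big_filter -[RHS]muln1 -(cnt1 KC).
rewrite big_const_seq iter_addn_0; congr (_ * _).
rewrite count_filter.
transitivity (count (fun t => x t && (t \in K)) Lst); first by apply: eq_count.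
rewrite cnt_swap //; last first.
  by move/(allP HC1): KC; case: K => [|a [|b [|c [|d [|? ?]]]]] //= /and5P[_ _ _ _ /and3P[]].
by apply: eq_in_count => t _; case xt: (x t) => //=; exact: HxL.
Qed.

Lemma sum_delta p : p \in Lst -> \sum_(t <- Lst | x t) (p == t) * 1680 = x p * 1680.
Proof.
move=> pL; rewrite -big_distrl /=; congr (_ * _).
rewrite -big_filter -count_sum count_filter.
rewrite (eq_count (a2 := fun t => x p && (t == p))); last first.
  by move=> t /=; rewrite eq_sym; case: eqP => [->|]; rewrite ?andbF ?andbT.
by case: (x p); rewrite /= ?count_pred0 // count_uniq_mem // pL.
Qed.

Lemma conc p : p \in Lst -> \sum_(t <- Lst | x t) Kc p t = 70 * x p + 140.
Proof.
move=> pL.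
have E : \sum_(t <- Lst | x t) (24 * Kc p t + sumn [seq Qm p K | K <- Cl & t \in K])
       = \sum_(t <- Lst | x t) ((p == t) * 1680 + sumn [seq Qp p K | K <- Cl & t \in K]).
  by apply: eq_bigr => t xt; rewrite HC3 // HxL.
have L1 : \sum_(t <- Lst | x t) (24 * Kc p t + sumn [seq Qm p K | K <- Cl & t \in K])
   = 24 * (\sum_(t <- Lst | x t) Kc p t) + sumn [seq Qm p K | K <- Cl].
  by rewrite big_split -big_distrr (sum_Q Qm).
have L2 : \sum_(t <- Lst | x t) ((p == t) * 1680 + sumn [seq Qp p K | K <- Cl & t \in K])
   = x p * 1680 + sumn [seq Qp p K | K <- Cl].
  by rewrite big_split sum_delta // (sum_Q Qp).
rewrite L1 L2 HC4 // in E.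
move: E; set X := \sum_(t <- Lst | x t) Kc p t; set A := sumn _; set b := x p.
move=> E; have E' : 24 * X = b * 1680 + 3360 by apply/eqP; rewrite -(eqn_add2r A) E addnA.
have : 24 * X = 24 * (70 * b + 140) by rewrite E' mulnDr mulnA mulnC.
by move/eqP; rewrite eqn_mul2l => /eqP.
Qed.

End Conc.

Definition LstLit : seq (seq nat) := [::
[::0;0;0;3;3;3;6;6;6];
[::0;0;0;3;3;5;3;5;5];
[::0;0;0;3;3;5;5;3;5];
[::0;0;0;3;3;5;5;5;3];
[::0;0;0;3;4;3;3;4;4];
[::0;0;0;3;4;3;4;3;4];
[::0;0;0;3;4;3;4;4;3];
[::0;0;0;3;4;4;3;3;4];
[::0;0;0;3;4;4;3;4;3];
[::0;0;0;3;4;4;4;3;3];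
[::0;0;2;0;2;2;6;6;6];
[::0;0;2;0;2;5;2;5;5];
[::0;0;2;0;2;5;5;2;5];
[::0;0;2;0;2;5;5;5;2];
[::0;0;2;0;4;2;2;4;4];
[::0;0;2;0;4;2;4;2;4];
[::0;0;2;0;4;2;4;4;2];
[::0;0;2;0;4;4;2;2;4];
[::0;0;2;0;4;4;2;4;2];
[::0;0;2;0;4;4;4;2;2];
[::0;0;2;2;0;2;6;6;6];
[::0;0;2;2;0;5;2;5;5];
[::0;0;2;2;0;5;5;2;5];
[::0;0;2;2;0;5;5;5;2];
[::0;0;2;2;2;0;6;6;6];
[::0;0;2;2;2;5;0;5;5];
[::0;0;2;2;2;5;5;0;5];
[::0;0;2;2;2;5;5;5;0];
[::0;0;2;2;4;0;2;4;4];
[::0;0;2;2;4;0;4;2;4];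
[::0;0;2;2;4;0;4;4;2];
[::0;0;2;2;4;2;0;4;4];
[::0;0;2;2;4;2;4;0;4];
[::0;0;2;2;4;2;4;4;0];
[::0;0;2;2;4;4;0;2;4];
[::0;0;2;2;4;4;0;4;2];
[::0;0;2;2;4;4;2;0;4];
[::0;0;2;2;4;4;2;4;0];
[::0;0;2;2;4;4;4;0;2];
[::0;0;2;2;4;4;4;2;0];
[::0;0;2;3;0;2;2;3;3];
[::0;0;2;3;0;2;3;2;3];
[::0;0;2;3;0;2;3;3;2];
[::0;0;2;3;0;3;2;2;3];
[::0;0;2;3;0;3;2;3;2];
[::0;0;2;3;0;3;3;2;2];
[::0;0;2;3;2;0;2;3;3];
[::0;0;2;3;2;0;3;2;3];
[::0;0;2;3;2;0;3;3;2];
[::0;0;2;3;2;2;0;3;3];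
[::0;0;2;3;2;2;3;0;3];
[::0;0;2;3;2;2;3;3;0];
[::0;0;2;3;2;3;0;2;3];
[::0;0;2;3;2;3;0;3;2];
[::0;0;2;3;2;3;2;0;3];
[::0;0;2;3;2;3;2;3;0];
[::0;0;2;3;2;3;3;0;2];
[::0;0;2;3;2;3;3;2;0];
[::0;0;2;3;3;0;2;2;3];
[::0;0;2;3;3;0;2;3;2];
[::0;0;2;3;3;0;3;2;2];
[::0;0;2;3;3;2;0;2;3];
[::0;0;2;3;3;2;0;3;2];
[::0;0;2;3;3;2;2;0;3];
[::0;0;2;3;3;2;2;3;0];
[::0;0;2;3;3;2;3;0;2];
[::0;0;2;3;3;2;3;2;0];
[::0;0;2;3;3;3;0;2;2];
[::0;0;2;3;3;3;2;0;2];
[::0;0;2;3;3;3;2;2;0];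
[::0;1;0;0;1;1;6;6;6];
[::0;1;0;0;1;5;1;5;5];
[::0;1;0;0;1;5;5;1;5];
[::0;1;0;0;1;5;5;5;1];
[::0;1;0;0;4;1;1;4;4];
[::0;1;0;0;4;1;4;1;4];
[::0;1;0;0;4;1;4;4;1];
[::0;1;0;0;4;4;1;1;4];
[::0;1;0;0;4;4;1;4;1];
[::0;1;0;0;4;4;4;1;1];
[::0;1;0;1;0;1;6;6;6];
[::0;1;0;1;0;5;1;5;5];
[::0;1;0;1;0;5;5;1;5];
[::0;1;0;1;0;5;5;5;1];
[::0;1;0;1;1;0;6;6;6];
[::0;1;0;1;1;5;0;5;5];
[::0;1;0;1;1;5;5;0;5];
[::0;1;0;1;1;5;5;5;0];
[::0;1;0;1;4;0;1;4;4];
[::0;1;0;1;4;0;4;1;4];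
[::0;1;0;1;4;0;4;4;1];
[::0;1;0;1;4;1;0;4;4];
[::0;1;0;1;4;1;4;0;4];
[::0;1;0;1;4;1;4;4;0];
[::0;1;0;1;4;4;0;1;4];
[::0;1;0;1;4;4;0;4;1];
[::0;1;0;1;4;4;1;0;4];
[::0;1;0;1;4;4;1;4;0];
[::0;1;0;1;4;4;4;0;1];
[::0;1;0;1;4;4;4;1;0];
[::0;1;0;3;0;1;1;3;3];
[::0;1;0;3;0;1;3;1;3];
[::0;1;0;3;0;1;3;3;1];
[::0;1;0;3;0;3;1;1;3];
[::0;1;0;3;0;3;1;3;1];
[::0;1;0;3;0;3;3;1;1];
[::0;1;0;3;1;0;1;3;3];
[::0;1;0;3;1;0;3;1;3];
[::0;1;0;3;1;0;3;3;1];
[::0;1;0;3;1;1;0;3;3];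
[::0;1;0;3;1;1;3;0;3];
[::0;1;0;3;1;1;3;3;0];
[::0;1;0;3;1;3;0;1;3];
[::0;1;0;3;1;3;0;3;1];
[::0;1;0;3;1;3;1;0;3];
[::0;1;0;3;1;3;1;3;0];
[::0;1;0;3;1;3;3;0;1];
[::0;1;0;3;1;3;3;1;0];
[::0;1;0;3;3;0;1;1;3];
[::0;1;0;3;3;0;1;3;1];
[::0;1;0;3;3;0;3;1;1];
[::0;1;0;3;3;1;0;1;3];
[::0;1;0;3;3;1;0;3;1];
[::0;1;0;3;3;1;1;0;3];
[::0;1;0;3;3;1;1;3;0];
[::0;1;0;3;3;1;3;0;1];
[::0;1;0;3;3;1;3;1;0];
[::0;1;0;3;3;3;0;1;1];
[::0;1;0;3;3;3;1;0;1];
[::0;1;0;3;3;3;1;1;0];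
[::0;1;1;0;0;1;6;6;6];
[::0;1;1;0;0;5;1;5;5];
[::0;1;1;0;0;5;5;1;5];
[::0;1;1;0;0;5;5;5;1];
[::0;1;1;0;1;0;6;6;6];
[::0;1;1;0;1;5;0;5;5];
[::0;1;1;0;1;5;5;0;5];
[::0;1;1;0;1;5;5;5;0];
[::0;1;1;0;4;0;1;4;4];
[::0;1;1;0;4;0;4;1;4];
[::0;1;1;0;4;0;4;4;1];
[::0;1;1;0;4;1;0;4;4];
[::0;1;1;0;4;1;4;0;4];
[::0;1;1;0;4;1;4;4;0];
[::0;1;1;0;4;4;0;1;4];
[::0;1;1;0;4;4;0;4;1];
[::0;1;1;0;4;4;1;0;4];
[::0;1;1;0;4;4;1;4;0];
[::0;1;1;0;4;4;4;0;1];
[::0;1;1;0;4;4;4;1;0];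
[::0;1;1;1;0;0;6;6;6];
[::0;1;1;1;0;5;0;5;5];
[::0;1;1;1;0;5;5;0;5];
[::0;1;1;1;0;5;5;5;0];
[::0;1;1;1;4;0;0;4;4];
[::0;1;1;1;4;0;4;0;4];
[::0;1;1;1;4;0;4;4;0];
[::0;1;1;1;4;4;0;0;4];
[::0;1;1;1;4;4;0;4;0];
[::0;1;1;1;4;4;4;0;0];
[::0;1;1;3;0;0;1;3;3];
[::0;1;1;3;0;0;3;1;3];
[::0;1;1;3;0;0;3;3;1];
[::0;1;1;3;0;1;0;3;3];
[::0;1;1;3;0;1;3;0;3];
[::0;1;1;3;0;1;3;3;0];
[::0;1;1;3;0;3;0;1;3];
[::0;1;1;3;0;3;0;3;1];
[::0;1;1;3;0;3;1;0;3];
[::0;1;1;3;0;3;1;3;0];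
[::0;1;1;3;0;3;3;0;1];
[::0;1;1;3;0;3;3;1;0];
[::0;1;1;3;1;0;0;3;3];
[::0;1;1;3;1;0;3;0;3];
[::0;1;1;3;1;0;3;3;0];
[::0;1;1;3;1;3;0;0;3];
[::0;1;1;3;1;3;0;3;0];
[::0;1;1;3;1;3;3;0;0];
[::0;1;1;3;3;0;0;1;3];
[::0;1;1;3;3;0;0;3;1];
[::0;1;1;3;3;0;1;0;3];
[::0;1;1;3;3;0;1;3;0];
[::0;1;1;3;3;0;3;0;1];
[::0;1;1;3;3;0;3;1;0];
[::0;1;1;3;3;1;0;0;3];
[::0;1;1;3;3;1;0;3;0];
[::0;1;1;3;3;1;3;0;0];
[::0;1;1;3;3;3;0;0;1];
[::0;1;1;3;3;3;0;1;0];
[::0;1;1;3;3;3;1;0;0];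
[::0;1;2;0;0;1;1;2;2];
[::0;1;2;0;0;1;2;1;2];
[::0;1;2;0;0;1;2;2;1];
[::0;1;2;0;0;2;1;1;2];
[::0;1;2;0;0;2;1;2;1];
[::0;1;2;0;0;2;2;1;1];
[::0;1;2;0;1;0;1;2;2];
[::0;1;2;0;1;0;2;1;2];
[::0;1;2;0;1;0;2;2;1];
[::0;1;2;0;1;1;0;2;2];
[::0;1;2;0;1;1;2;0;2];
[::0;1;2;0;1;1;2;2;0];
[::0;1;2;0;1;2;0;1;2];
[::0;1;2;0;1;2;0;2;1];
[::0;1;2;0;1;2;1;0;2];
[::0;1;2;0;1;2;1;2;0];
[::0;1;2;0;1;2;2;0;1];
[::0;1;2;0;1;2;2;1;0];
[::0;1;2;0;2;0;1;1;2];
[::0;1;2;0;2;0;1;2;1];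
[::0;1;2;0;2;0;2;1;1];
[::0;1;2;0;2;1;0;1;2];
[::0;1;2;0;2;1;0;2;1];
[::0;1;2;0;2;1;1;0;2];
[::0;1;2;0;2;1;1;2;0];
[::0;1;2;0;2;1;2;0;1];
[::0;1;2;0;2;1;2;1;0];
[::0;1;2;0;2;2;0;1;1];
[::0;1;2;0;2;2;1;0;1];
[::0;1;2;0;2;2;1;1;0];
[::0;1;2;1;0;0;1;2;2];
[::0;1;2;1;0;0;2;1;2];
[::0;1;2;1;0;0;2;2;1];
[::0;1;2;1;0;1;0;2;2];
[::0;1;2;1;0;1;2;0;2];
[::0;1;2;1;0;1;2;2;0];
[::0;1;2;1;0;2;0;1;2];
[::0;1;2;1;0;2;0;2;1];
[::0;1;2;1;0;2;1;0;2];
[::0;1;2;1;0;2;1;2;0];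
[::0;1;2;1;0;2;2;0;1];
[::0;1;2;1;0;2;2;1;0];
[::0;1;2;1;1;0;0;2;2];
[::0;1;2;1;1;0;2;0;2];
[::0;1;2;1;1;0;2;2;0];
[::0;1;2;1;1;2;0;0;2];
[::0;1;2;1;1;2;0;2;0];
[::0;1;2;1;1;2;2;0;0];
[::0;1;2;1;2;0;0;1;2];
[::0;1;2;1;2;0;0;2;1];
[::0;1;2;1;2;0;1;0;2];
[::0;1;2;1;2;0;1;2;0];
[::0;1;2;1;2;0;2;0;1];
[::0;1;2;1;2;0;2;1;0];
[::0;1;2;1;2;1;0;0;2];
[::0;1;2;1;2;1;0;2;0];
[::0;1;2;1;2;1;2;0;0];
[::0;1;2;1;2;2;0;0;1];
[::0;1;2;1;2;2;0;1;0];
[::0;1;2;1;2;2;1;0;0];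
[::0;1;2;2;0;0;1;1;2];
[::0;1;2;2;0;0;1;2;1];
[::0;1;2;2;0;0;2;1;1];
[::0;1;2;2;0;1;0;1;2];
[::0;1;2;2;0;1;0;2;1];
[::0;1;2;2;0;1;1;0;2];
[::0;1;2;2;0;1;1;2;0];
[::0;1;2;2;0;1;2;0;1];
[::0;1;2;2;0;1;2;1;0];
[::0;1;2;2;0;2;0;1;1];
[::0;1;2;2;0;2;1;0;1];
[::0;1;2;2;0;2;1;1;0];
[::0;1;2;2;1;0;0;1;2];
[::0;1;2;2;1;0;0;2;1];
[::0;1;2;2;1;0;1;0;2];
[::0;1;2;2;1;0;1;2;0];
[::0;1;2;2;1;0;2;0;1];
[::0;1;2;2;1;0;2;1;0];
[::0;1;2;2;1;1;0;0;2];
[::0;1;2;2;1;1;0;2;0];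
[::0;1;2;2;1;1;2;0;0];
[::0;1;2;2;1;2;0;0;1];
[::0;1;2;2;1;2;0;1;0];
[::0;1;2;2;1;2;1;0;0];
[::0;1;2;2;2;0;0;1;1];
[::0;1;2;2;2;0;1;0;1];
[::0;1;2;2;2;0;1;1;0];
[::0;1;2;2;2;1;0;0;1];
[::0;1;2;2;2;1;0;1;0];
[::0;1;2;2;2;1;1;0;0]].
Definition Cl : seq (seq (seq nat)) := [::
[::[::0;0;0;3;3;3;6;6;6];[::0;1;2;0;1;2;0;1;2];[::0;1;2;1;2;0;2;0;1];[::0;1;2;2;0;1;1;2;0]];
[::[::0;0;0;3;3;3;6;6;6];[::0;1;2;0;1;2;0;2;1];[::0;1;2;1;2;0;2;1;0];[::0;1;2;2;0;1;1;0;2]];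
[::[::0;0;0;3;3;3;6;6;6];[::0;1;2;0;1;2;1;0;2];[::0;1;2;1;2;0;0;2;1];[::0;1;2;2;0;1;2;1;0]];
[::[::0;0;0;3;3;3;6;6;6];[::0;1;2;0;1;2;1;2;0];[::0;1;2;1;2;0;0;1;2];[::0;1;2;2;0;1;2;0;1]];
[::[::0;0;0;3;3;3;6;6;6];[::0;1;2;0;1;2;2;0;1];[::0;1;2;1;2;0;1;2;0];[::0;1;2;2;0;1;0;1;2]];
[::[::0;0;0;3;3;3;6;6;6];[::0;1;2;0;1;2;2;1;0];[::0;1;2;1;2;0;1;0;2];[::0;1;2;2;0;1;0;2;1]];
[::[::0;0;0;3;3;3;6;6;6];[::0;1;2;0;2;1;0;1;2];[::0;1;2;1;0;2;2;0;1];[::0;1;2;2;1;0;1;2;0]];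
[::[::0;0;0;3;3;3;6;6;6];[::0;1;2;0;2;1;0;2;1];[::0;1;2;1;0;2;2;1;0];[::0;1;2;2;1;0;1;0;2]];
[::[::0;0;0;3;3;3;6;6;6];[::0;1;2;0;2;1;1;0;2];[::0;1;2;1;0;2;0;2;1];[::0;1;2;2;1;0;2;1;0]];
[::[::0;0;0;3;3;3;6;6;6];[::0;1;2;0;2;1;1;2;0];[::0;1;2;1;0;2;0;1;2];[::0;1;2;2;1;0;2;0;1]];
[::[::0;0;0;3;3;3;6;6;6];[::0;1;2;0;2;1;2;0;1];[::0;1;2;1;0;2;1;2;0];[::0;1;2;2;1;0;0;1;2]];
[::[::0;0;0;3;3;3;6;6;6];[::0;1;2;0;2;1;2;1;0];[::0;1;2;1;0;2;1;0;2];[::0;1;2;2;1;0;0;2;1]];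
[::[::0;0;0;3;3;5;3;5;5];[::0;1;2;0;1;0;2;1;2];[::0;1;2;1;2;2;0;0;1];[::0;1;2;2;0;1;1;2;0]];
[::[::0;0;0;3;3;5;3;5;5];[::0;1;2;0;1;0;2;2;1];[::0;1;2;1;2;2;0;1;0];[::0;1;2;2;0;1;1;0;2]];
[::[::0;0;0;3;3;5;3;5;5];[::0;1;2;0;1;1;2;0;2];[::0;1;2;1;2;0;0;2;1];[::0;1;2;2;0;2;1;1;0]];
[::[::0;0;0;3;3;5;3;5;5];[::0;1;2;0;1;1;2;2;0];[::0;1;2;1;2;0;0;1;2];[::0;1;2;2;0;2;1;0;1]];
[::[::0;0;0;3;3;5;3;5;5];[::0;1;2;0;1;2;2;0;1];[::0;1;2;1;2;1;0;2;0];[::0;1;2;2;0;0;1;1;2]];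
[::[::0;0;0;3;3;5;3;5;5];[::0;1;2;0;1;2;2;1;0];[::0;1;2;1;2;1;0;0;2];[::0;1;2;2;0;0;1;2;1]];
[::[::0;0;0;3;3;5;3;5;5];[::0;1;2;0;2;0;1;1;2];[::0;1;2;1;0;2;2;0;1];[::0;1;2;2;1;1;0;2;0]];
[::[::0;0;0;3;3;5;3;5;5];[::0;1;2;0;2;0;1;2;1];[::0;1;2;1;0;2;2;1;0];[::0;1;2;2;1;1;0;0;2]];
[::[::0;0;0;3;3;5;3;5;5];[::0;1;2;0;2;1;1;0;2];[::0;1;2;1;0;0;2;2;1];[::0;1;2;2;1;2;0;1;0]];
[::[::0;0;0;3;3;5;3;5;5];[::0;1;2;0;2;1;1;2;0];[::0;1;2;1;0;0;2;1;2];[::0;1;2;2;1;2;0;0;1]];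
[::[::0;0;0;3;3;5;3;5;5];[::0;1;2;0;2;2;1;0;1];[::0;1;2;1;0;1;2;2;0];[::0;1;2;2;1;0;0;1;2]];
[::[::0;0;0;3;3;5;3;5;5];[::0;1;2;0;2;2;1;1;0];[::0;1;2;1;0;1;2;0;2];[::0;1;2;2;1;0;0;2;1]];
[::[::0;0;0;3;3;5;5;3;5];[::0;1;2;0;1;0;1;2;2];[::0;1;2;1;2;2;0;0;1];[::0;1;2;2;0;1;2;1;0]];
[::[::0;0;0;3;3;5;5;3;5];[::0;1;2;0;1;0;2;2;1];[::0;1;2;1;2;2;1;0;0];[::0;1;2;2;0;1;0;1;2]];
[::[::0;0;0;3;3;5;5;3;5];[::0;1;2;0;1;1;0;2;2];[::0;1;2;1;2;0;2;0;1];[::0;1;2;2;0;2;1;1;0]];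
[::[::0;0;0;3;3;5;5;3;5];[::0;1;2;0;1;1;2;2;0];[::0;1;2;1;2;0;1;0;2];[::0;1;2;2;0;2;0;1;1]];
[::[::0;0;0;3;3;5;5;3;5];[::0;1;2;0;1;2;0;2;1];[::0;1;2;1;2;1;2;0;0];[::0;1;2;2;0;0;1;1;2]];
[::[::0;0;0;3;3;5;5;3;5];[::0;1;2;0;1;2;1;2;0];[::0;1;2;1;2;1;0;0;2];[::0;1;2;2;0;0;2;1;1]];
[::[::0;0;0;3;3;5;5;3;5];[::0;1;2;0;2;0;1;1;2];[::0;1;2;1;0;2;0;2;1];[::0;1;2;2;1;1;2;0;0]];
[::[::0;0;0;3;3;5;5;3;5];[::0;1;2;0;2;0;2;1;1];[::0;1;2;1;0;2;1;2;0];[::0;1;2;2;1;1;0;0;2]];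
[::[::0;0;0;3;3;5;5;3;5];[::0;1;2;0;2;1;0;1;2];[::0;1;2;1;0;0;2;2;1];[::0;1;2;2;1;2;1;0;0]];
[::[::0;0;0;3;3;5;5;3;5];[::0;1;2;0;2;1;2;1;0];[::0;1;2;1;0;0;1;2;2];[::0;1;2;2;1;2;0;0;1]];
[::[::0;0;0;3;3;5;5;3;5];[::0;1;2;0;2;2;0;1;1];[::0;1;2;1;0;1;2;2;0];[::0;1;2;2;1;0;1;0;2]];
[::[::0;0;0;3;3;5;5;3;5];[::0;1;2;0;2;2;1;1;0];[::0;1;2;1;0;1;0;2;2];[::0;1;2;2;1;0;2;0;1]];
[::[::0;0;0;3;3;5;5;5;3];[::0;1;2;0;1;0;1;2;2];[::0;1;2;1;2;2;0;1;0];[::0;1;2;2;0;1;2;0;1]];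
[::[::0;0;0;3;3;5;5;5;3];[::0;1;2;0;1;0;2;1;2];[::0;1;2;1;2;2;1;0;0];[::0;1;2;2;0;1;0;2;1]];
[::[::0;0;0;3;3;5;5;5;3];[::0;1;2;0;1;1;0;2;2];[::0;1;2;1;2;0;2;1;0];[::0;1;2;2;0;2;1;0;1]];
[::[::0;0;0;3;3;5;5;5;3];[::0;1;2;0;1;1;2;0;2];[::0;1;2;1;2;0;1;2;0];[::0;1;2;2;0;2;0;1;1]];
[::[::0;0;0;3;3;5;5;5;3];[::0;1;2;0;1;2;0;1;2];[::0;1;2;1;2;1;2;0;0];[::0;1;2;2;0;0;1;2;1]];
[::[::0;0;0;3;3;5;5;5;3];[::0;1;2;0;1;2;1;0;2];[::0;1;2;1;2;1;0;2;0];[::0;1;2;2;0;0;2;1;1]];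
[::[::0;0;0;3;3;5;5;5;3];[::0;1;2;0;2;0;1;2;1];[::0;1;2;1;0;2;0;1;2];[::0;1;2;2;1;1;2;0;0]];
[::[::0;0;0;3;3;5;5;5;3];[::0;1;2;0;2;0;2;1;1];[::0;1;2;1;0;2;1;0;2];[::0;1;2;2;1;1;0;2;0]];
[::[::0;0;0;3;3;5;5;5;3];[::0;1;2;0;2;1;0;2;1];[::0;1;2;1;0;0;2;1;2];[::0;1;2;2;1;2;1;0;0]];
[::[::0;0;0;3;3;5;5;5;3];[::0;1;2;0;2;1;2;0;1];[::0;1;2;1;0;0;1;2;2];[::0;1;2;2;1;2;0;1;0]];
[::[::0;0;0;3;3;5;5;5;3];[::0;1;2;0;2;2;0;1;1];[::0;1;2;1;0;1;2;0;2];[::0;1;2;2;1;0;1;2;0]];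
[::[::0;0;0;3;3;5;5;5;3];[::0;1;2;0;2;2;1;0;1];[::0;1;2;1;0;1;0;2;2];[::0;1;2;2;1;0;2;1;0]];
[::[::0;0;0;3;4;3;3;4;4];[::0;1;2;0;0;1;2;1;2];[::0;1;2;1;2;2;0;0;1];[::0;1;2;2;1;0;1;2;0]];
[::[::0;0;0;3;4;3;3;4;4];[::0;1;2;0;0;1;2;2;1];[::0;1;2;1;2;2;0;1;0];[::0;1;2;2;1;0;1;0;2]];
[::[::0;0;0;3;4;3;3;4;4];[::0;1;2;0;0;2;1;1;2];[::0;1;2;1;2;0;2;0;1];[::0;1;2;2;1;1;0;2;0]];
[::[::0;0;0;3;4;3;3;4;4];[::0;1;2;0;0;2;1;2;1];[::0;1;2;1;2;0;2;1;0];[::0;1;2;2;1;1;0;0;2]];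
[::[::0;0;0;3;4;3;3;4;4];[::0;1;2;0;1;1;2;0;2];[::0;1;2;1;0;2;0;2;1];[::0;1;2;2;2;0;1;1;0]];
[::[::0;0;0;3;4;3;3;4;4];[::0;1;2;0;1;1;2;2;0];[::0;1;2;1;0;2;0;1;2];[::0;1;2;2;2;0;1;0;1]];
[::[::0;0;0;3;4;3;3;4;4];[::0;1;2;0;1;2;1;0;2];[::0;1;2;1;0;0;2;2;1];[::0;1;2;2;2;1;0;1;0]];
[::[::0;0;0;3;4;3;3;4;4];[::0;1;2;0;1;2;1;2;0];[::0;1;2;1;0;0;2;1;2];[::0;1;2;2;2;1;0;0;1]];
[::[::0;0;0;3;4;3;3;4;4];[::0;1;2;0;2;1;2;0;1];[::0;1;2;1;1;2;0;2;0];[::0;1;2;2;0;0;1;1;2]];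
[::[::0;0;0;3;4;3;3;4;4];[::0;1;2;0;2;1;2;1;0];[::0;1;2;1;1;2;0;0;2];[::0;1;2;2;0;0;1;2;1]];
[::[::0;0;0;3;4;3;3;4;4];[::0;1;2;0;2;2;1;0;1];[::0;1;2;1;1;0;2;2;0];[::0;1;2;2;0;1;0;1;2]];
[::[::0;0;0;3;4;3;3;4;4];[::0;1;2;0;2;2;1;1;0];[::0;1;2;1;1;0;2;0;2];[::0;1;2;2;0;1;0;2;1]];
[::[::0;0;0;3;4;3;4;3;4];[::0;1;2;0;0;1;1;2;2];[::0;1;2;1;2;2;0;0;1];[::0;1;2;2;1;0;2;1;0]];
[::[::0;0;0;3;4;3;4;3;4];[::0;1;2;0;0;1;2;2;1];[::0;1;2;1;2;2;1;0;0];[::0;1;2;2;1;0;0;1;2]];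
[::[::0;0;0;3;4;3;4;3;4];[::0;1;2;0;0;2;1;1;2];[::0;1;2;1;2;0;0;2;1];[::0;1;2;2;1;1;2;0;0]];
[::[::0;0;0;3;4;3;4;3;4];[::0;1;2;0;0;2;2;1;1];[::0;1;2;1;2;0;1;2;0];[::0;1;2;2;1;1;0;0;2]];
[::[::0;0;0;3;4;3;4;3;4];[::0;1;2;0;1;1;0;2;2];[::0;1;2;1;0;2;2;0;1];[::0;1;2;2;2;0;1;1;0]];
[::[::0;0;0;3;4;3;4;3;4];[::0;1;2;0;1;1;2;2;0];[::0;1;2;1;0;2;1;0;2];[::0;1;2;2;2;0;0;1;1]];
[::[::0;0;0;3;4;3;4;3;4];[::0;1;2;0;1;2;0;1;2];[::0;1;2;1;0;0;2;2;1];[::0;1;2;2;2;1;1;0;0]];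
[::[::0;0;0;3;4;3;4;3;4];[::0;1;2;0;1;2;2;1;0];[::0;1;2;1;0;0;1;2;2];[::0;1;2;2;2;1;0;0;1]];
[::[::0;0;0;3;4;3;4;3;4];[::0;1;2;0;2;1;0;2;1];[::0;1;2;1;1;2;2;0;0];[::0;1;2;2;0;0;1;1;2]];
[::[::0;0;0;3;4;3;4;3;4];[::0;1;2;0;2;1;1;2;0];[::0;1;2;1;1;2;0;0;2];[::0;1;2;2;0;0;2;1;1]];
[::[::0;0;0;3;4;3;4;3;4];[::0;1;2;0;2;2;0;1;1];[::0;1;2;1;1;0;2;2;0];[::0;1;2;2;0;1;1;0;2]];
[::[::0;0;0;3;4;3;4;3;4];[::0;1;2;0;2;2;1;1;0];[::0;1;2;1;1;0;0;2;2];[::0;1;2;2;0;1;2;0;1]];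
[::[::0;0;0;3;4;3;4;4;3];[::0;1;2;0;0;1;1;2;2];[::0;1;2;1;2;2;0;1;0];[::0;1;2;2;1;0;2;0;1]];
[::[::0;0;0;3;4;3;4;4;3];[::0;1;2;0;0;1;2;1;2];[::0;1;2;1;2;2;1;0;0];[::0;1;2;2;1;0;0;2;1]];
[::[::0;0;0;3;4;3;4;4;3];[::0;1;2;0;0;2;1;2;1];[::0;1;2;1;2;0;0;1;2];[::0;1;2;2;1;1;2;0;0]];
[::[::0;0;0;3;4;3;4;4;3];[::0;1;2;0;0;2;2;1;1];[::0;1;2;1;2;0;1;0;2];[::0;1;2;2;1;1;0;2;0]];
[::[::0;0;0;3;4;3;4;4;3];[::0;1;2;0;1;1;0;2;2];[::0;1;2;1;0;2;2;1;0];[::0;1;2;2;2;0;1;0;1]];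
[::[::0;0;0;3;4;3;4;4;3];[::0;1;2;0;1;1;2;0;2];[::0;1;2;1;0;2;1;2;0];[::0;1;2;2;2;0;0;1;1]];
[::[::0;0;0;3;4;3;4;4;3];[::0;1;2;0;1;2;0;2;1];[::0;1;2;1;0;0;2;1;2];[::0;1;2;2;2;1;1;0;0]];
[::[::0;0;0;3;4;3;4;4;3];[::0;1;2;0;1;2;2;0;1];[::0;1;2;1;0;0;1;2;2];[::0;1;2;2;2;1;0;1;0]];
[::[::0;0;0;3;4;3;4;4;3];[::0;1;2;0;2;1;0;1;2];[::0;1;2;1;1;2;2;0;0];[::0;1;2;2;0;0;1;2;1]];
[::[::0;0;0;3;4;3;4;4;3];[::0;1;2;0;2;1;1;0;2];[::0;1;2;1;1;2;0;2;0];[::0;1;2;2;0;0;2;1;1]];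
[::[::0;0;0;3;4;3;4;4;3];[::0;1;2;0;2;2;0;1;1];[::0;1;2;1;1;0;2;0;2];[::0;1;2;2;0;1;1;2;0]];
[::[::0;0;0;3;4;3;4;4;3];[::0;1;2;0;2;2;1;0;1];[::0;1;2;1;1;0;0;2;2];[::0;1;2;2;0;1;2;1;0]];
[::[::0;0;0;3;4;4;3;3;4];[::0;1;2;0;0;1;1;2;2];[::0;1;2;1;2;0;2;0;1];[::0;1;2;2;1;2;0;1;0]];
[::[::0;0;0;3;4;4;3;3;4];[::0;1;2;0;0;1;2;1;2];[::0;1;2;1;2;0;0;2;1];[::0;1;2;2;1;2;1;0;0]];
[::[::0;0;0;3;4;4;3;3;4];[::0;1;2;0;0;2;1;2;1];[::0;1;2;1;2;1;2;0;0];[::0;1;2;2;1;0;0;1;2]];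
[::[::0;0;0;3;4;4;3;3;4];[::0;1;2;0;0;2;2;1;1];[::0;1;2;1;2;1;0;2;0];[::0;1;2;2;1;0;1;0;2]];
[::[::0;0;0;3;4;4;3;3;4];[::0;1;2;0;1;0;1;2;2];[::0;1;2;1;0;2;2;0;1];[::0;1;2;2;2;1;0;1;0]];
[::[::0;0;0;3;4;4;3;3;4];[::0;1;2;0;1;0;2;1;2];[::0;1;2;1;0;2;0;2;1];[::0;1;2;2;2;1;1;0;0]];
[::[::0;0;0;3;4;4;3;3;4];[::0;1;2;0;1;2;1;2;0];[::0;1;2;1;0;1;2;0;2];[::0;1;2;2;2;0;0;1;1]];
[::[::0;0;0;3;4;4;3;3;4];[::0;1;2;0;1;2;2;1;0];[::0;1;2;1;0;1;0;2;2];[::0;1;2;2;2;0;1;0;1]];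
[::[::0;0;0;3;4;4;3;3;4];[::0;1;2;0;2;0;1;2;1];[::0;1;2;1;1;2;2;0;0];[::0;1;2;2;0;1;0;1;2]];
[::[::0;0;0;3;4;4;3;3;4];[::0;1;2;0;2;0;2;1;1];[::0;1;2;1;1;2;0;2;0];[::0;1;2;2;0;1;1;0;2]];
[::[::0;0;0;3;4;4;3;3;4];[::0;1;2;0;2;1;1;2;0];[::0;1;2;1;1;0;2;0;2];[::0;1;2;2;0;2;0;1;1]];
[::[::0;0;0;3;4;4;3;3;4];[::0;1;2;0;2;1;2;1;0];[::0;1;2;1;1;0;0;2;2];[::0;1;2;2;0;2;1;0;1]];
[::[::0;0;0;3;4;4;3;4;3];[::0;1;2;0;0;1;1;2;2];[::0;1;2;1;2;0;2;1;0];[::0;1;2;2;1;2;0;0;1]];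
[::[::0;0;0;3;4;4;3;4;3];[::0;1;2;0;0;1;2;2;1];[::0;1;2;1;2;0;0;1;2];[::0;1;2;2;1;2;1;0;0]];
[::[::0;0;0;3;4;4;3;4;3];[::0;1;2;0;0;2;1;1;2];[::0;1;2;1;2;1;2;0;0];[::0;1;2;2;1;0;0;2;1]];
[::[::0;0;0;3;4;4;3;4;3];[::0;1;2;0;0;2;2;1;1];[::0;1;2;1;2;1;0;0;2];[::0;1;2;2;1;0;1;2;0]];
[::[::0;0;0;3;4;4;3;4;3];[::0;1;2;0;1;0;1;2;2];[::0;1;2;1;0;2;2;1;0];[::0;1;2;2;2;1;0;0;1]];
[::[::0;0;0;3;4;4;3;4;3];[::0;1;2;0;1;0;2;2;1];[::0;1;2;1;0;2;0;1;2];[::0;1;2;2;2;1;1;0;0]];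
[::[::0;0;0;3;4;4;3;4;3];[::0;1;2;0;1;2;1;0;2];[::0;1;2;1;0;1;2;2;0];[::0;1;2;2;2;0;0;1;1]];
[::[::0;0;0;3;4;4;3;4;3];[::0;1;2;0;1;2;2;0;1];[::0;1;2;1;0;1;0;2;2];[::0;1;2;2;2;0;1;1;0]];
[::[::0;0;0;3;4;4;3;4;3];[::0;1;2;0;2;0;1;1;2];[::0;1;2;1;1;2;2;0;0];[::0;1;2;2;0;1;0;2;1]];
[::[::0;0;0;3;4;4;3;4;3];[::0;1;2;0;2;0;2;1;1];[::0;1;2;1;1;2;0;0;2];[::0;1;2;2;0;1;1;2;0]];
[::[::0;0;0;3;4;4;3;4;3];[::0;1;2;0;2;1;1;0;2];[::0;1;2;1;1;0;2;2;0];[::0;1;2;2;0;2;0;1;1]];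
[::[::0;0;0;3;4;4;3;4;3];[::0;1;2;0;2;1;2;0;1];[::0;1;2;1;1;0;0;2;2];[::0;1;2;2;0;2;1;1;0]];
[::[::0;0;0;3;4;4;4;3;3];[::0;1;2;0;0;1;2;1;2];[::0;1;2;1;2;0;1;2;0];[::0;1;2;2;1;2;0;0;1]];
[::[::0;0;0;3;4;4;4;3;3];[::0;1;2;0;0;1;2;2;1];[::0;1;2;1;2;0;1;0;2];[::0;1;2;2;1;2;0;1;0]];
[::[::0;0;0;3;4;4;4;3;3];[::0;1;2;0;0;2;1;1;2];[::0;1;2;1;2;1;0;2;0];[::0;1;2;2;1;0;2;0;1]];
[::[::0;0;0;3;4;4;4;3;3];[::0;1;2;0;0;2;1;2;1];[::0;1;2;1;2;1;0;0;2];[::0;1;2;2;1;0;2;1;0]];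
[::[::0;0;0;3;4;4;4;3;3];[::0;1;2;0;1;0;2;1;2];[::0;1;2;1;0;2;1;2;0];[::0;1;2;2;2;1;0;0;1]];
[::[::0;0;0;3;4;4;4;3;3];[::0;1;2;0;1;0;2;2;1];[::0;1;2;1;0;2;1;0;2];[::0;1;2;2;2;1;0;1;0]];
[::[::0;0;0;3;4;4;4;3;3];[::0;1;2;0;1;2;0;1;2];[::0;1;2;1;0;1;2;2;0];[::0;1;2;2;2;0;1;0;1]];
[::[::0;0;0;3;4;4;4;3;3];[::0;1;2;0;1;2;0;2;1];[::0;1;2;1;0;1;2;0;2];[::0;1;2;2;2;0;1;1;0]];
[::[::0;0;0;3;4;4;4;3;3];[::0;1;2;0;2;0;1;1;2];[::0;1;2;1;1;2;0;2;0];[::0;1;2;2;0;1;2;0;1]];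
[::[::0;0;0;3;4;4;4;3;3];[::0;1;2;0;2;0;1;2;1];[::0;1;2;1;1;2;0;0;2];[::0;1;2;2;0;1;2;1;0]];
[::[::0;0;0;3;4;4;4;3;3];[::0;1;2;0;2;1;0;1;2];[::0;1;2;1;1;0;2;2;0];[::0;1;2;2;0;2;1;0;1]];
[::[::0;0;0;3;4;4;4;3;3];[::0;1;2;0;2;1;0;2;1];[::0;1;2;1;1;0;2;0;2];[::0;1;2;2;0;2;1;1;0]];
[::[::0;0;2;0;2;2;6;6;6];[::0;1;0;3;1;3;0;1;3];[::0;1;1;3;3;0;3;0;1];[::0;1;2;2;0;1;1;2;0]];
[::[::0;0;2;0;2;2;6;6;6];[::0;1;0;3;1;3;0;3;1];[::0;1;1;3;3;0;3;1;0];[::0;1;2;2;0;1;1;0;2]];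
[::[::0;0;2;0;2;2;6;6;6];[::0;1;0;3;1;3;1;0;3];[::0;1;1;3;3;0;0;3;1];[::0;1;2;2;0;1;2;1;0]];
[::[::0;0;2;0;2;2;6;6;6];[::0;1;0;3;1;3;1;3;0];[::0;1;1;3;3;0;0;1;3];[::0;1;2;2;0;1;2;0;1]];
[::[::0;0;2;0;2;2;6;6;6];[::0;1;0;3;1;3;3;0;1];[::0;1;1;3;3;0;1;3;0];[::0;1;2;2;0;1;0;1;2]];
[::[::0;0;2;0;2;2;6;6;6];[::0;1;0;3;1;3;3;1;0];[::0;1;1;3;3;0;1;0;3];[::0;1;2;2;0;1;0;2;1]];
[::[::0;0;2;0;2;2;6;6;6];[::0;1;0;3;3;1;0;1;3];[::0;1;1;3;0;3;3;0;1];[::0;1;2;2;1;0;1;2;0]];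
[::[::0;0;2;0;2;2;6;6;6];[::0;1;0;3;3;1;0;3;1];[::0;1;1;3;0;3;3;1;0];[::0;1;2;2;1;0;1;0;2]];
[::[::0;0;2;0;2;2;6;6;6];[::0;1;0;3;3;1;1;0;3];[::0;1;1;3;0;3;0;3;1];[::0;1;2;2;1;0;2;1;0]];
[::[::0;0;2;0;2;2;6;6;6];[::0;1;0;3;3;1;1;3;0];[::0;1;1;3;0;3;0;1;3];[::0;1;2;2;1;0;2;0;1]];
[::[::0;0;2;0;2;2;6;6;6];[::0;1;0;3;3;1;3;0;1];[::0;1;1;3;0;3;1;3;0];[::0;1;2;2;1;0;0;1;2]];
[::[::0;0;2;0;2;2;6;6;6];[::0;1;0;3;3;1;3;1;0];[::0;1;1;3;0;3;1;0;3];[::0;1;2;2;1;0;0;2;1]];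
[::[::0;0;2;0;2;5;2;5;5];[::0;1;0;3;1;0;3;1;3];[::0;1;1;3;3;3;0;0;1];[::0;1;2;2;0;1;1;2;0]];
[::[::0;0;2;0;2;5;2;5;5];[::0;1;0;3;1;0;3;3;1];[::0;1;1;3;3;3;0;1;0];[::0;1;2;2;0;1;1;0;2]];
[::[::0;0;2;0;2;5;2;5;5];[::0;1;0;3;1;1;3;0;3];[::0;1;1;3;3;0;0;3;1];[::0;1;2;2;0;2;1;1;0]];
[::[::0;0;2;0;2;5;2;5;5];[::0;1;0;3;1;1;3;3;0];[::0;1;1;3;3;0;0;1;3];[::0;1;2;2;0;2;1;0;1]];
[::[::0;0;2;0;2;5;2;5;5];[::0;1;0;3;1;3;3;0;1];[::0;1;1;3;3;1;0;3;0];[::0;1;2;2;0;0;1;1;2]];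
[::[::0;0;2;0;2;5;2;5;5];[::0;1;0;3;1;3;3;1;0];[::0;1;1;3;3;1;0;0;3];[::0;1;2;2;0;0;1;2;1]];
[::[::0;0;2;0;2;5;2;5;5];[::0;1;0;3;3;0;1;1;3];[::0;1;1;3;0;3;3;0;1];[::0;1;2;2;1;1;0;2;0]];
[::[::0;0;2;0;2;5;2;5;5];[::0;1;0;3;3;0;1;3;1];[::0;1;1;3;0;3;3;1;0];[::0;1;2;2;1;1;0;0;2]];
[::[::0;0;2;0;2;5;2;5;5];[::0;1;0;3;3;1;1;0;3];[::0;1;1;3;0;0;3;3;1];[::0;1;2;2;1;2;0;1;0]];
[::[::0;0;2;0;2;5;2;5;5];[::0;1;0;3;3;1;1;3;0];[::0;1;1;3;0;0;3;1;3];[::0;1;2;2;1;2;0;0;1]];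
[::[::0;0;2;0;2;5;2;5;5];[::0;1;0;3;3;3;1;0;1];[::0;1;1;3;0;1;3;3;0];[::0;1;2;2;1;0;0;1;2]];
[::[::0;0;2;0;2;5;2;5;5];[::0;1;0;3;3;3;1;1;0];[::0;1;1;3;0;1;3;0;3];[::0;1;2;2;1;0;0;2;1]];
[::[::0;0;2;0;2;5;5;2;5];[::0;1;0;3;1;0;1;3;3];[::0;1;1;3;3;3;0;0;1];[::0;1;2;2;0;1;2;1;0]];
[::[::0;0;2;0;2;5;5;2;5];[::0;1;0;3;1;0;3;3;1];[::0;1;1;3;3;3;1;0;0];[::0;1;2;2;0;1;0;1;2]];
[::[::0;0;2;0;2;5;5;2;5];[::0;1;0;3;1;1;0;3;3];[::0;1;1;3;3;0;3;0;1];[::0;1;2;2;0;2;1;1;0]];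
[::[::0;0;2;0;2;5;5;2;5];[::0;1;0;3;1;1;3;3;0];[::0;1;1;3;3;0;1;0;3];[::0;1;2;2;0;2;0;1;1]];
[::[::0;0;2;0;2;5;5;2;5];[::0;1;0;3;1;3;0;3;1];[::0;1;1;3;3;1;3;0;0];[::0;1;2;2;0;0;1;1;2]];
[::[::0;0;2;0;2;5;5;2;5];[::0;1;0;3;1;3;1;3;0];[::0;1;1;3;3;1;0;0;3];[::0;1;2;2;0;0;2;1;1]];
[::[::0;0;2;0;2;5;5;2;5];[::0;1;0;3;3;0;1;1;3];[::0;1;1;3;0;3;0;3;1];[::0;1;2;2;1;1;2;0;0]];
[::[::0;0;2;0;2;5;5;2;5];[::0;1;0;3;3;0;3;1;1];[::0;1;1;3;0;3;1;3;0];[::0;1;2;2;1;1;0;0;2]];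
[::[::0;0;2;0;2;5;5;2;5];[::0;1;0;3;3;1;0;1;3];[::0;1;1;3;0;0;3;3;1];[::0;1;2;2;1;2;1;0;0]];
[::[::0;0;2;0;2;5;5;2;5];[::0;1;0;3;3;1;3;1;0];[::0;1;1;3;0;0;1;3;3];[::0;1;2;2;1;2;0;0;1]];
[::[::0;0;2;0;2;5;5;2;5];[::0;1;0;3;3;3;0;1;1];[::0;1;1;3;0;1;3;3;0];[::0;1;2;2;1;0;1;0;2]];
[::[::0;0;2;0;2;5;5;2;5];[::0;1;0;3;3;3;1;1;0];[::0;1;1;3;0;1;0;3;3];[::0;1;2;2;1;0;2;0;1]];
[::[::0;0;2;0;2;5;5;5;2];[::0;1;0;3;1;0;1;3;3];[::0;1;1;3;3;3;0;1;0];[::0;1;2;2;0;1;2;0;1]];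
[::[::0;0;2;0;2;5;5;5;2];[::0;1;0;3;1;0;3;1;3];[::0;1;1;3;3;3;1;0;0];[::0;1;2;2;0;1;0;2;1]];
[::[::0;0;2;0;2;5;5;5;2];[::0;1;0;3;1;1;0;3;3];[::0;1;1;3;3;0;3;1;0];[::0;1;2;2;0;2;1;0;1]];
[::[::0;0;2;0;2;5;5;5;2];[::0;1;0;3;1;1;3;0;3];[::0;1;1;3;3;0;1;3;0];[::0;1;2;2;0;2;0;1;1]];
[::[::0;0;2;0;2;5;5;5;2];[::0;1;0;3;1;3;0;1;3];[::0;1;1;3;3;1;3;0;0];[::0;1;2;2;0;0;1;2;1]];
[::[::0;0;2;0;2;5;5;5;2];[::0;1;0;3;1;3;1;0;3];[::0;1;1;3;3;1;0;3;0];[::0;1;2;2;0;0;2;1;1]];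
[::[::0;0;2;0;2;5;5;5;2];[::0;1;0;3;3;0;1;3;1];[::0;1;1;3;0;3;0;1;3];[::0;1;2;2;1;1;2;0;0]];
[::[::0;0;2;0;2;5;5;5;2];[::0;1;0;3;3;0;3;1;1];[::0;1;1;3;0;3;1;0;3];[::0;1;2;2;1;1;0;2;0]];
[::[::0;0;2;0;2;5;5;5;2];[::0;1;0;3;3;1;0;3;1];[::0;1;1;3;0;0;3;1;3];[::0;1;2;2;1;2;1;0;0]];
[::[::0;0;2;0;2;5;5;5;2];[::0;1;0;3;3;1;3;0;1];[::0;1;1;3;0;0;1;3;3];[::0;1;2;2;1;2;0;1;0]];
[::[::0;0;2;0;2;5;5;5;2];[::0;1;0;3;3;3;0;1;1];[::0;1;1;3;0;1;3;0;3];[::0;1;2;2;1;0;1;2;0]];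
[::[::0;0;2;0;2;5;5;5;2];[::0;1;0;3;3;3;1;0;1];[::0;1;1;3;0;1;0;3;3];[::0;1;2;2;1;0;2;1;0]];
[::[::0;0;2;0;4;2;2;4;4];[::0;1;0;3;0;1;3;1;3];[::0;1;1;3;3;3;0;0;1];[::0;1;2;2;1;0;1;2;0]];
[::[::0;0;2;0;4;2;2;4;4];[::0;1;0;3;0;1;3;3;1];[::0;1;1;3;3;3;0;1;0];[::0;1;2;2;1;0;1;0;2]];
[::[::0;0;2;0;4;2;2;4;4];[::0;1;0;3;0;3;1;1;3];[::0;1;1;3;3;0;3;0;1];[::0;1;2;2;1;1;0;2;0]];
[::[::0;0;2;0;4;2;2;4;4];[::0;1;0;3;0;3;1;3;1];[::0;1;1;3;3;0;3;1;0];[::0;1;2;2;1;1;0;0;2]];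
[::[::0;0;2;0;4;2;2;4;4];[::0;1;0;3;1;1;3;0;3];[::0;1;1;3;0;3;0;3;1];[::0;1;2;2;2;0;1;1;0]];
[::[::0;0;2;0;4;2;2;4;4];[::0;1;0;3;1;1;3;3;0];[::0;1;1;3;0;3;0;1;3];[::0;1;2;2;2;0;1;0;1]];
[::[::0;0;2;0;4;2;2;4;4];[::0;1;0;3;1;3;1;0;3];[::0;1;1;3;0;0;3;3;1];[::0;1;2;2;2;1;0;1;0]];
[::[::0;0;2;0;4;2;2;4;4];[::0;1;0;3;1;3;1;3;0];[::0;1;1;3;0;0;3;1;3];[::0;1;2;2;2;1;0;0;1]];
[::[::0;0;2;0;4;2;2;4;4];[::0;1;0;3;3;1;3;0;1];[::0;1;1;3;1;3;0;3;0];[::0;1;2;2;0;0;1;1;2]];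
[::[::0;0;2;0;4;2;2;4;4];[::0;1;0;3;3;1;3;1;0];[::0;1;1;3;1;3;0;0;3];[::0;1;2;2;0;0;1;2;1]];
[::[::0;0;2;0;4;2;2;4;4];[::0;1;0;3;3;3;1;0;1];[::0;1;1;3;1;0;3;3;0];[::0;1;2;2;0;1;0;1;2]];
[::[::0;0;2;0;4;2;2;4;4];[::0;1;0;3;3;3;1;1;0];[::0;1;1;3;1;0;3;0;3];[::0;1;2;2;0;1;0;2;1]];
[::[::0;0;2;0;4;2;4;2;4];[::0;1;0;3;0;1;1;3;3];[::0;1;1;3;3;3;0;0;1];[::0;1;2;2;1;0;2;1;0]];
[::[::0;0;2;0;4;2;4;2;4];[::0;1;0;3;0;1;3;3;1];[::0;1;1;3;3;3;1;0;0];[::0;1;2;2;1;0;0;1;2]];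
[::[::0;0;2;0;4;2;4;2;4];[::0;1;0;3;0;3;1;1;3];[::0;1;1;3;3;0;0;3;1];[::0;1;2;2;1;1;2;0;0]];
[::[::0;0;2;0;4;2;4;2;4];[::0;1;0;3;0;3;3;1;1];[::0;1;1;3;3;0;1;3;0];[::0;1;2;2;1;1;0;0;2]];
[::[::0;0;2;0;4;2;4;2;4];[::0;1;0;3;1;1;0;3;3];[::0;1;1;3;0;3;3;0;1];[::0;1;2;2;2;0;1;1;0]];
[::[::0;0;2;0;4;2;4;2;4];[::0;1;0;3;1;1;3;3;0];[::0;1;1;3;0;3;1;0;3];[::0;1;2;2;2;0;0;1;1]];
[::[::0;0;2;0;4;2;4;2;4];[::0;1;0;3;1;3;0;1;3];[::0;1;1;3;0;0;3;3;1];[::0;1;2;2;2;1;1;0;0]];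
[::[::0;0;2;0;4;2;4;2;4];[::0;1;0;3;1;3;3;1;0];[::0;1;1;3;0;0;1;3;3];[::0;1;2;2;2;1;0;0;1]];
[::[::0;0;2;0;4;2;4;2;4];[::0;1;0;3;3;1;0;3;1];[::0;1;1;3;1;3;3;0;0];[::0;1;2;2;0;0;1;1;2]];
[::[::0;0;2;0;4;2;4;2;4];[::0;1;0;3;3;1;1;3;0];[::0;1;1;3;1;3;0;0;3];[::0;1;2;2;0;0;2;1;1]];
[::[::0;0;2;0;4;2;4;2;4];[::0;1;0;3;3;3;0;1;1];[::0;1;1;3;1;0;3;3;0];[::0;1;2;2;0;1;1;0;2]];
[::[::0;0;2;0;4;2;4;2;4];[::0;1;0;3;3;3;1;1;0];[::0;1;1;3;1;0;0;3;3];[::0;1;2;2;0;1;2;0;1]];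
[::[::0;0;2;0;4;2;4;4;2];[::0;1;0;3;0;1;1;3;3];[::0;1;1;3;3;3;0;1;0];[::0;1;2;2;1;0;2;0;1]];
[::[::0;0;2;0;4;2;4;4;2];[::0;1;0;3;0;1;3;1;3];[::0;1;1;3;3;3;1;0;0];[::0;1;2;2;1;0;0;2;1]];
[::[::0;0;2;0;4;2;4;4;2];[::0;1;0;3;0;3;1;3;1];[::0;1;1;3;3;0;0;1;3];[::0;1;2;2;1;1;2;0;0]];
[::[::0;0;2;0;4;2;4;4;2];[::0;1;0;3;0;3;3;1;1];[::0;1;1;3;3;0;1;0;3];[::0;1;2;2;1;1;0;2;0]];
[::[::0;0;2;0;4;2;4;4;2];[::0;1;0;3;1;1;0;3;3];[::0;1;1;3;0;3;3;1;0];[::0;1;2;2;2;0;1;0;1]];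
[::[::0;0;2;0;4;2;4;4;2];[::0;1;0;3;1;1;3;0;3];[::0;1;1;3;0;3;1;3;0];[::0;1;2;2;2;0;0;1;1]];
[::[::0;0;2;0;4;2;4;4;2];[::0;1;0;3;1;3;0;3;1];[::0;1;1;3;0;0;3;1;3];[::0;1;2;2;2;1;1;0;0]];
[::[::0;0;2;0;4;2;4;4;2];[::0;1;0;3;1;3;3;0;1];[::0;1;1;3;0;0;1;3;3];[::0;1;2;2;2;1;0;1;0]];
[::[::0;0;2;0;4;2;4;4;2];[::0;1;0;3;3;1;0;1;3];[::0;1;1;3;1;3;3;0;0];[::0;1;2;2;0;0;1;2;1]];
[::[::0;0;2;0;4;2;4;4;2];[::0;1;0;3;3;1;1;0;3];[::0;1;1;3;1;3;0;3;0];[::0;1;2;2;0;0;2;1;1]];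
[::[::0;0;2;0;4;2;4;4;2];[::0;1;0;3;3;3;0;1;1];[::0;1;1;3;1;0;3;0;3];[::0;1;2;2;0;1;1;2;0]];
[::[::0;0;2;0;4;2;4;4;2];[::0;1;0;3;3;3;1;0;1];[::0;1;1;3;1;0;0;3;3];[::0;1;2;2;0;1;2;1;0]];
[::[::0;0;2;0;4;4;2;2;4];[::0;1;0;3;0;1;1;3;3];[::0;1;1;3;3;0;3;0;1];[::0;1;2;2;1;2;0;1;0]];
[::[::0;0;2;0;4;4;2;2;4];[::0;1;0;3;0;1;3;1;3];[::0;1;1;3;3;0;0;3;1];[::0;1;2;2;1;2;1;0;0]];
[::[::0;0;2;0;4;4;2;2;4];[::0;1;0;3;0;3;1;3;1];[::0;1;1;3;3;1;3;0;0];[::0;1;2;2;1;0;0;1;2]];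
[::[::0;0;2;0;4;4;2;2;4];[::0;1;0;3;0;3;3;1;1];[::0;1;1;3;3;1;0;3;0];[::0;1;2;2;1;0;1;0;2]];
[::[::0;0;2;0;4;4;2;2;4];[::0;1;0;3;1;0;1;3;3];[::0;1;1;3;0;3;3;0;1];[::0;1;2;2;2;1;0;1;0]];
[::[::0;0;2;0;4;4;2;2;4];[::0;1;0;3;1;0;3;1;3];[::0;1;1;3;0;3;0;3;1];[::0;1;2;2;2;1;1;0;0]];
[::[::0;0;2;0;4;4;2;2;4];[::0;1;0;3;1;3;1;3;0];[::0;1;1;3;0;1;3;0;3];[::0;1;2;2;2;0;0;1;1]];
[::[::0;0;2;0;4;4;2;2;4];[::0;1;0;3;1;3;3;1;0];[::0;1;1;3;0;1;0;3;3];[::0;1;2;2;2;0;1;0;1]];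
[::[::0;0;2;0;4;4;2;2;4];[::0;1;0;3;3;0;1;3;1];[::0;1;1;3;1;3;3;0;0];[::0;1;2;2;0;1;0;1;2]];
[::[::0;0;2;0;4;4;2;2;4];[::0;1;0;3;3;0;3;1;1];[::0;1;1;3;1;3;0;3;0];[::0;1;2;2;0;1;1;0;2]];
[::[::0;0;2;0;4;4;2;2;4];[::0;1;0;3;3;1;1;3;0];[::0;1;1;3;1;0;3;0;3];[::0;1;2;2;0;2;0;1;1]];
[::[::0;0;2;0;4;4;2;2;4];[::0;1;0;3;3;1;3;1;0];[::0;1;1;3;1;0;0;3;3];[::0;1;2;2;0;2;1;0;1]];
[::[::0;0;2;0;4;4;2;4;2];[::0;1;0;3;0;1;1;3;3];[::0;1;1;3;3;0;3;1;0];[::0;1;2;2;1;2;0;0;1]];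
[::[::0;0;2;0;4;4;2;4;2];[::0;1;0;3;0;1;3;3;1];[::0;1;1;3;3;0;0;1;3];[::0;1;2;2;1;2;1;0;0]];
[::[::0;0;2;0;4;4;2;4;2];[::0;1;0;3;0;3;1;1;3];[::0;1;1;3;3;1;3;0;0];[::0;1;2;2;1;0;0;2;1]];
[::[::0;0;2;0;4;4;2;4;2];[::0;1;0;3;0;3;3;1;1];[::0;1;1;3;3;1;0;0;3];[::0;1;2;2;1;0;1;2;0]];
[::[::0;0;2;0;4;4;2;4;2];[::0;1;0;3;1;0;1;3;3];[::0;1;1;3;0;3;3;1;0];[::0;1;2;2;2;1;0;0;1]];
[::[::0;0;2;0;4;4;2;4;2];[::0;1;0;3;1;0;3;3;1];[::0;1;1;3;0;3;0;1;3];[::0;1;2;2;2;1;1;0;0]];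
[::[::0;0;2;0;4;4;2;4;2];[::0;1;0;3;1;3;1;0;3];[::0;1;1;3;0;1;3;3;0];[::0;1;2;2;2;0;0;1;1]];
[::[::0;0;2;0;4;4;2;4;2];[::0;1;0;3;1;3;3;0;1];[::0;1;1;3;0;1;0;3;3];[::0;1;2;2;2;0;1;1;0]];
[::[::0;0;2;0;4;4;2;4;2];[::0;1;0;3;3;0;1;1;3];[::0;1;1;3;1;3;3;0;0];[::0;1;2;2;0;1;0;2;1]];
[::[::0;0;2;0;4;4;2;4;2];[::0;1;0;3;3;0;3;1;1];[::0;1;1;3;1;3;0;0;3];[::0;1;2;2;0;1;1;2;0]];
[::[::0;0;2;0;4;4;2;4;2];[::0;1;0;3;3;1;1;0;3];[::0;1;1;3;1;0;3;3;0];[::0;1;2;2;0;2;0;1;1]];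
[::[::0;0;2;0;4;4;2;4;2];[::0;1;0;3;3;1;3;0;1];[::0;1;1;3;1;0;0;3;3];[::0;1;2;2;0;2;1;1;0]];
[::[::0;0;2;0;4;4;4;2;2];[::0;1;0;3;0;1;3;1;3];[::0;1;1;3;3;0;1;3;0];[::0;1;2;2;1;2;0;0;1]];
[::[::0;0;2;0;4;4;4;2;2];[::0;1;0;3;0;1;3;3;1];[::0;1;1;3;3;0;1;0;3];[::0;1;2;2;1;2;0;1;0]];
[::[::0;0;2;0;4;4;4;2;2];[::0;1;0;3;0;3;1;1;3];[::0;1;1;3;3;1;0;3;0];[::0;1;2;2;1;0;2;0;1]];
[::[::0;0;2;0;4;4;4;2;2];[::0;1;0;3;0;3;1;3;1];[::0;1;1;3;3;1;0;0;3];[::0;1;2;2;1;0;2;1;0]];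
[::[::0;0;2;0;4;4;4;2;2];[::0;1;0;3;1;0;3;1;3];[::0;1;1;3;0;3;1;3;0];[::0;1;2;2;2;1;0;0;1]];
[::[::0;0;2;0;4;4;4;2;2];[::0;1;0;3;1;0;3;3;1];[::0;1;1;3;0;3;1;0;3];[::0;1;2;2;2;1;0;1;0]];
[::[::0;0;2;0;4;4;4;2;2];[::0;1;0;3;1;3;0;1;3];[::0;1;1;3;0;1;3;3;0];[::0;1;2;2;2;0;1;0;1]];
[::[::0;0;2;0;4;4;4;2;2];[::0;1;0;3;1;3;0;3;1];[::0;1;1;3;0;1;3;0;3];[::0;1;2;2;2;0;1;1;0]];
[::[::0;0;2;0;4;4;4;2;2];[::0;1;0;3;3;0;1;1;3];[::0;1;1;3;1;3;0;3;0];[::0;1;2;2;0;1;2;0;1]];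
[::[::0;0;2;0;4;4;4;2;2];[::0;1;0;3;3;0;1;3;1];[::0;1;1;3;1;3;0;0;3];[::0;1;2;2;0;1;2;1;0]];
[::[::0;0;2;0;4;4;4;2;2];[::0;1;0;3;3;1;0;1;3];[::0;1;1;3;1;0;3;3;0];[::0;1;2;2;0;2;1;0;1]];
[::[::0;0;2;0;4;4;4;2;2];[::0;1;0;3;3;1;0;3;1];[::0;1;1;3;1;0;3;0;3];[::0;1;2;2;0;2;1;1;0]];
[::[::0;0;2;2;0;2;6;6;6];[::0;1;0;1;4;4;0;1;4];[::0;1;1;3;3;0;3;0;1];[::0;1;2;0;2;1;1;2;0]];
[::[::0;0;2;2;0;2;6;6;6];[::0;1;0;1;4;4;0;4;1];[::0;1;1;3;3;0;3;1;0];[::0;1;2;0;2;1;1;0;2]];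
[::[::0;0;2;2;0;2;6;6;6];[::0;1;0;1;4;4;1;0;4];[::0;1;1;3;3;0;0;3;1];[::0;1;2;0;2;1;2;1;0]];
[::[::0;0;2;2;0;2;6;6;6];[::0;1;0;1;4;4;1;4;0];[::0;1;1;3;3;0;0;1;3];[::0;1;2;0;2;1;2;0;1]];
[::[::0;0;2;2;0;2;6;6;6];[::0;1;0;1;4;4;4;0;1];[::0;1;1;3;3;0;1;3;0];[::0;1;2;0;2;1;0;1;2]];
[::[::0;0;2;2;0;2;6;6;6];[::0;1;0;1;4;4;4;1;0];[::0;1;1;3;3;0;1;0;3];[::0;1;2;0;2;1;0;2;1]];
[::[::0;0;2;2;0;2;6;6;6];[::0;1;0;3;3;1;0;1;3];[::0;1;1;0;4;4;4;0;1];[::0;1;2;1;2;0;1;2;0]];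
[::[::0;0;2;2;0;2;6;6;6];[::0;1;0;3;3;1;0;3;1];[::0;1;1;0;4;4;4;1;0];[::0;1;2;1;2;0;1;0;2]];
[::[::0;0;2;2;0;2;6;6;6];[::0;1;0;3;3;1;1;0;3];[::0;1;1;0;4;4;0;4;1];[::0;1;2;1;2;0;2;1;0]];
[::[::0;0;2;2;0;2;6;6;6];[::0;1;0;3;3;1;1;3;0];[::0;1;1;0;4;4;0;1;4];[::0;1;2;1;2;0;2;0;1]];
[::[::0;0;2;2;0;2;6;6;6];[::0;1;0;3;3;1;3;0;1];[::0;1;1;0;4;4;1;4;0];[::0;1;2;1;2;0;0;1;2]];
[::[::0;0;2;2;0;2;6;6;6];[::0;1;0;3;3;1;3;1;0];[::0;1;1;0;4;4;1;0;4];[::0;1;2;1;2;0;0;2;1]];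
[::[::0;0;2;2;0;5;2;5;5];[::0;1;0;1;4;0;4;1;4];[::0;1;1;3;3;3;0;0;1];[::0;1;2;0;2;1;1;2;0]];
[::[::0;0;2;2;0;5;2;5;5];[::0;1;0;1;4;0;4;4;1];[::0;1;1;3;3;3;0;1;0];[::0;1;2;0;2;1;1;0;2]];
[::[::0;0;2;2;0;5;2;5;5];[::0;1;0;1;4;1;4;0;4];[::0;1;1;3;3;0;0;3;1];[::0;1;2;0;2;2;1;1;0]];
[::[::0;0;2;2;0;5;2;5;5];[::0;1;0;1;4;1;4;4;0];[::0;1;1;3;3;0;0;1;3];[::0;1;2;0;2;2;1;0;1]];
[::[::0;0;2;2;0;5;2;5;5];[::0;1;0;1;4;4;4;0;1];[::0;1;1;3;3;1;0;3;0];[::0;1;2;0;2;0;1;1;2]];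
[::[::0;0;2;2;0;5;2;5;5];[::0;1;0;1;4;4;4;1;0];[::0;1;1;3;3;1;0;0;3];[::0;1;2;0;2;0;1;2;1]];
[::[::0;0;2;2;0;5;2;5;5];[::0;1;0;3;3;0;1;1;3];[::0;1;1;0;4;4;4;0;1];[::0;1;2;1;2;1;0;2;0]];
[::[::0;0;2;2;0;5;2;5;5];[::0;1;0;3;3;0;1;3;1];[::0;1;1;0;4;4;4;1;0];[::0;1;2;1;2;1;0;0;2]];
[::[::0;0;2;2;0;5;2;5;5];[::0;1;0;3;3;1;1;0;3];[::0;1;1;0;4;0;4;4;1];[::0;1;2;1;2;2;0;1;0]];
[::[::0;0;2;2;0;5;2;5;5];[::0;1;0;3;3;1;1;3;0];[::0;1;1;0;4;0;4;1;4];[::0;1;2;1;2;2;0;0;1]];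
[::[::0;0;2;2;0;5;2;5;5];[::0;1;0;3;3;3;1;0;1];[::0;1;1;0;4;1;4;4;0];[::0;1;2;1;2;0;0;1;2]];
[::[::0;0;2;2;0;5;2;5;5];[::0;1;0;3;3;3;1;1;0];[::0;1;1;0;4;1;4;0;4];[::0;1;2;1;2;0;0;2;1]];
[::[::0;0;2;2;0;5;5;2;5];[::0;1;0;1;4;0;1;4;4];[::0;1;1;3;3;3;0;0;1];[::0;1;2;0;2;1;2;1;0]];
[::[::0;0;2;2;0;5;5;2;5];[::0;1;0;1;4;0;4;4;1];[::0;1;1;3;3;3;1;0;0];[::0;1;2;0;2;1;0;1;2]];
[::[::0;0;2;2;0;5;5;2;5];[::0;1;0;1;4;1;0;4;4];[::0;1;1;3;3;0;3;0;1];[::0;1;2;0;2;2;1;1;0]];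
[::[::0;0;2;2;0;5;5;2;5];[::0;1;0;1;4;1;4;4;0];[::0;1;1;3;3;0;1;0;3];[::0;1;2;0;2;2;0;1;1]];
[::[::0;0;2;2;0;5;5;2;5];[::0;1;0;1;4;4;0;4;1];[::0;1;1;3;3;1;3;0;0];[::0;1;2;0;2;0;1;1;2]];
[::[::0;0;2;2;0;5;5;2;5];[::0;1;0;1;4;4;1;4;0];[::0;1;1;3;3;1;0;0;3];[::0;1;2;0;2;0;2;1;1]];
[::[::0;0;2;2;0;5;5;2;5];[::0;1;0;3;3;0;1;1;3];[::0;1;1;0;4;4;0;4;1];[::0;1;2;1;2;1;2;0;0]];
[::[::0;0;2;2;0;5;5;2;5];[::0;1;0;3;3;0;3;1;1];[::0;1;1;0;4;4;1;4;0];[::0;1;2;1;2;1;0;0;2]];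
[::[::0;0;2;2;0;5;5;2;5];[::0;1;0;3;3;1;0;1;3];[::0;1;1;0;4;0;4;4;1];[::0;1;2;1;2;2;1;0;0]];
[::[::0;0;2;2;0;5;5;2;5];[::0;1;0;3;3;1;3;1;0];[::0;1;1;0;4;0;1;4;4];[::0;1;2;1;2;2;0;0;1]];
[::[::0;0;2;2;0;5;5;2;5];[::0;1;0;3;3;3;0;1;1];[::0;1;1;0;4;1;4;4;0];[::0;1;2;1;2;0;1;0;2]];
[::[::0;0;2;2;0;5;5;2;5];[::0;1;0;3;3;3;1;1;0];[::0;1;1;0;4;1;0;4;4];[::0;1;2;1;2;0;2;0;1]];
[::[::0;0;2;2;0;5;5;5;2];[::0;1;0;1;4;0;1;4;4];[::0;1;1;3;3;3;0;1;0];[::0;1;2;0;2;1;2;0;1]];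
[::[::0;0;2;2;0;5;5;5;2];[::0;1;0;1;4;0;4;1;4];[::0;1;1;3;3;3;1;0;0];[::0;1;2;0;2;1;0;2;1]];
[::[::0;0;2;2;0;5;5;5;2];[::0;1;0;1;4;1;0;4;4];[::0;1;1;3;3;0;3;1;0];[::0;1;2;0;2;2;1;0;1]];
[::[::0;0;2;2;0;5;5;5;2];[::0;1;0;1;4;1;4;0;4];[::0;1;1;3;3;0;1;3;0];[::0;1;2;0;2;2;0;1;1]];
[::[::0;0;2;2;0;5;5;5;2];[::0;1;0;1;4;4;0;1;4];[::0;1;1;3;3;1;3;0;0];[::0;1;2;0;2;0;1;2;1]];
[::[::0;0;2;2;0;5;5;5;2];[::0;1;0;1;4;4;1;0;4];[::0;1;1;3;3;1;0;3;0];[::0;1;2;0;2;0;2;1;1]];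
[::[::0;0;2;2;0;5;5;5;2];[::0;1;0;3;3;0;1;3;1];[::0;1;1;0;4;4;0;1;4];[::0;1;2;1;2;1;2;0;0]];
[::[::0;0;2;2;0;5;5;5;2];[::0;1;0;3;3;0;3;1;1];[::0;1;1;0;4;4;1;0;4];[::0;1;2;1;2;1;0;2;0]];
[::[::0;0;2;2;0;5;5;5;2];[::0;1;0;3;3;1;0;3;1];[::0;1;1;0;4;0;4;1;4];[::0;1;2;1;2;2;1;0;0]];
[::[::0;0;2;2;0;5;5;5;2];[::0;1;0;3;3;1;3;0;1];[::0;1;1;0;4;0;1;4;4];[::0;1;2;1;2;2;0;1;0]];
[::[::0;0;2;2;0;5;5;5;2];[::0;1;0;3;3;3;0;1;1];[::0;1;1;0;4;1;4;0;4];[::0;1;2;1;2;0;1;2;0]];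
[::[::0;0;2;2;0;5;5;5;2];[::0;1;0;3;3;3;1;0;1];[::0;1;1;0;4;1;0;4;4];[::0;1;2;1;2;0;2;1;0]];
[::[::0;0;2;2;2;0;6;6;6];[::0;1;0;1;4;4;0;1;4];[::0;1;1;3;0;3;3;0;1];[::0;1;2;0;1;2;1;2;0]];
[::[::0;0;2;2;2;0;6;6;6];[::0;1;0;1;4;4;0;4;1];[::0;1;1;3;0;3;3;1;0];[::0;1;2;0;1;2;1;0;2]];
[::[::0;0;2;2;2;0;6;6;6];[::0;1;0;1;4;4;1;0;4];[::0;1;1;3;0;3;0;3;1];[::0;1;2;0;1;2;2;1;0]];
[::[::0;0;2;2;2;0;6;6;6];[::0;1;0;1;4;4;1;4;0];[::0;1;1;3;0;3;0;1;3];[::0;1;2;0;1;2;2;0;1]];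
[::[::0;0;2;2;2;0;6;6;6];[::0;1;0;1;4;4;4;0;1];[::0;1;1;3;0;3;1;3;0];[::0;1;2;0;1;2;0;1;2]];
[::[::0;0;2;2;2;0;6;6;6];[::0;1;0;1;4;4;4;1;0];[::0;1;1;3;0;3;1;0;3];[::0;1;2;0;1;2;0;2;1]];
[::[::0;0;2;2;2;0;6;6;6];[::0;1;0;3;1;3;0;1;3];[::0;1;1;0;4;4;4;0;1];[::0;1;2;1;0;2;1;2;0]];
[::[::0;0;2;2;2;0;6;6;6];[::0;1;0;3;1;3;0;3;1];[::0;1;1;0;4;4;4;1;0];[::0;1;2;1;0;2;1;0;2]];
[::[::0;0;2;2;2;0;6;6;6];[::0;1;0;3;1;3;1;0;3];[::0;1;1;0;4;4;0;4;1];[::0;1;2;1;0;2;2;1;0]];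
[::[::0;0;2;2;2;0;6;6;6];[::0;1;0;3;1;3;1;3;0];[::0;1;1;0;4;4;0;1;4];[::0;1;2;1;0;2;2;0;1]];
[::[::0;0;2;2;2;0;6;6;6];[::0;1;0;3;1;3;3;0;1];[::0;1;1;0;4;4;1;4;0];[::0;1;2;1;0;2;0;1;2]];
[::[::0;0;2;2;2;0;6;6;6];[::0;1;0;3;1;3;3;1;0];[::0;1;1;0;4;4;1;0;4];[::0;1;2;1;0;2;0;2;1]];
[::[::0;0;2;2;2;5;0;5;5];[::0;1;0;1;4;0;4;1;4];[::0;1;1;3;0;3;3;0;1];[::0;1;2;0;1;1;2;2;0]];
[::[::0;0;2;2;2;5;0;5;5];[::0;1;0;1;4;0;4;4;1];[::0;1;1;3;0;3;3;1;0];[::0;1;2;0;1;1;2;0;2]];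
[::[::0;0;2;2;2;5;0;5;5];[::0;1;0;1;4;1;4;0;4];[::0;1;1;3;0;0;3;3;1];[::0;1;2;0;1;2;2;1;0]];
[::[::0;0;2;2;2;5;0;5;5];[::0;1;0;1;4;1;4;4;0];[::0;1;1;3;0;0;3;1;3];[::0;1;2;0;1;2;2;0;1]];
[::[::0;0;2;2;2;5;0;5;5];[::0;1;0;1;4;4;4;0;1];[::0;1;1;3;0;1;3;3;0];[::0;1;2;0;1;0;2;1;2]];
[::[::0;0;2;2;2;5;0;5;5];[::0;1;0;1;4;4;4;1;0];[::0;1;1;3;0;1;3;0;3];[::0;1;2;0;1;0;2;2;1]];
[::[::0;0;2;2;2;5;0;5;5];[::0;1;0;3;1;0;3;1;3];[::0;1;1;0;4;4;4;0;1];[::0;1;2;1;0;1;2;2;0]];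
[::[::0;0;2;2;2;5;0;5;5];[::0;1;0;3;1;0;3;3;1];[::0;1;1;0;4;4;4;1;0];[::0;1;2;1;0;1;2;0;2]];
[::[::0;0;2;2;2;5;0;5;5];[::0;1;0;3;1;1;3;0;3];[::0;1;1;0;4;0;4;4;1];[::0;1;2;1;0;2;2;1;0]];
[::[::0;0;2;2;2;5;0;5;5];[::0;1;0;3;1;1;3;3;0];[::0;1;1;0;4;0;4;1;4];[::0;1;2;1;0;2;2;0;1]];
[::[::0;0;2;2;2;5;0;5;5];[::0;1;0;3;1;3;3;0;1];[::0;1;1;0;4;1;4;4;0];[::0;1;2;1;0;0;2;1;2]];
[::[::0;0;2;2;2;5;0;5;5];[::0;1;0;3;1;3;3;1;0];[::0;1;1;0;4;1;4;0;4];[::0;1;2;1;0;0;2;2;1]];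
[::[::0;0;2;2;2;5;5;0;5];[::0;1;0;1;4;0;1;4;4];[::0;1;1;3;0;3;0;3;1];[::0;1;2;0;1;1;2;2;0]];
[::[::0;0;2;2;2;5;5;0;5];[::0;1;0;1;4;0;4;4;1];[::0;1;1;3;0;3;1;3;0];[::0;1;2;0;1;1;0;2;2]];
[::[::0;0;2;2;2;5;5;0;5];[::0;1;0;1;4;1;0;4;4];[::0;1;1;3;0;0;3;3;1];[::0;1;2;0;1;2;1;2;0]];
[::[::0;0;2;2;2;5;5;0;5];[::0;1;0;1;4;1;4;4;0];[::0;1;1;3;0;0;1;3;3];[::0;1;2;0;1;2;0;2;1]];
[::[::0;0;2;2;2;5;5;0;5];[::0;1;0;1;4;4;0;4;1];[::0;1;1;3;0;1;3;3;0];[::0;1;2;0;1;0;1;2;2]];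
[::[::0;0;2;2;2;5;5;0;5];[::0;1;0;1;4;4;1;4;0];[::0;1;1;3;0;1;0;3;3];[::0;1;2;0;1;0;2;2;1]];
[::[::0;0;2;2;2;5;5;0;5];[::0;1;0;3;1;0;1;3;3];[::0;1;1;0;4;4;0;4;1];[::0;1;2;1;0;1;2;2;0]];
[::[::0;0;2;2;2;5;5;0;5];[::0;1;0;3;1;0;3;3;1];[::0;1;1;0;4;4;1;4;0];[::0;1;2;1;0;1;0;2;2]];
[::[::0;0;2;2;2;5;5;0;5];[::0;1;0;3;1;1;0;3;3];[::0;1;1;0;4;0;4;4;1];[::0;1;2;1;0;2;1;2;0]];
[::[::0;0;2;2;2;5;5;0;5];[::0;1;0;3;1;1;3;3;0];[::0;1;1;0;4;0;1;4;4];[::0;1;2;1;0;2;0;2;1]];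
[::[::0;0;2;2;2;5;5;0;5];[::0;1;0;3;1;3;0;3;1];[::0;1;1;0;4;1;4;4;0];[::0;1;2;1;0;0;1;2;2]];
[::[::0;0;2;2;2;5;5;0;5];[::0;1;0;3;1;3;1;3;0];[::0;1;1;0;4;1;0;4;4];[::0;1;2;1;0;0;2;2;1]];
[::[::0;0;2;2;2;5;5;5;0];[::0;1;0;1;4;0;1;4;4];[::0;1;1;3;0;3;0;1;3];[::0;1;2;0;1;1;2;0;2]];
[::[::0;0;2;2;2;5;5;5;0];[::0;1;0;1;4;0;4;1;4];[::0;1;1;3;0;3;1;0;3];[::0;1;2;0;1;1;0;2;2]];
[::[::0;0;2;2;2;5;5;5;0];[::0;1;0;1;4;1;0;4;4];[::0;1;1;3;0;0;3;1;3];[::0;1;2;0;1;2;1;0;2]];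
[::[::0;0;2;2;2;5;5;5;0];[::0;1;0;1;4;1;4;0;4];[::0;1;1;3;0;0;1;3;3];[::0;1;2;0;1;2;0;1;2]];
[::[::0;0;2;2;2;5;5;5;0];[::0;1;0;1;4;4;0;1;4];[::0;1;1;3;0;1;3;0;3];[::0;1;2;0;1;0;1;2;2]];
[::[::0;0;2;2;2;5;5;5;0];[::0;1;0;1;4;4;1;0;4];[::0;1;1;3;0;1;0;3;3];[::0;1;2;0;1;0;2;1;2]];
[::[::0;0;2;2;2;5;5;5;0];[::0;1;0;3;1;0;1;3;3];[::0;1;1;0;4;4;0;1;4];[::0;1;2;1;0;1;2;0;2]];
[::[::0;0;2;2;2;5;5;5;0];[::0;1;0;3;1;0;3;1;3];[::0;1;1;0;4;4;1;0;4];[::0;1;2;1;0;1;0;2;2]];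
[::[::0;0;2;2;2;5;5;5;0];[::0;1;0;3;1;1;0;3;3];[::0;1;1;0;4;0;4;1;4];[::0;1;2;1;0;2;1;0;2]];
[::[::0;0;2;2;2;5;5;5;0];[::0;1;0;3;1;1;3;0;3];[::0;1;1;0;4;0;1;4;4];[::0;1;2;1;0;2;0;1;2]];
[::[::0;0;2;2;2;5;5;5;0];[::0;1;0;3;1;3;0;1;3];[::0;1;1;0;4;1;4;0;4];[::0;1;2;1;0;0;1;2;2]];
[::[::0;0;2;2;2;5;5;5;0];[::0;1;0;3;1;3;1;0;3];[::0;1;1;0;4;1;0;4;4];[::0;1;2;1;0;0;2;1;2]];
[::[::0;0;2;2;4;0;2;4;4];[::0;1;0;1;0;5;5;1;5];[::0;1;1;3;3;3;0;0;1];[::0;1;2;0;1;2;1;2;0]];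
[::[::0;0;2;2;4;0;2;4;4];[::0;1;0;1;0;5;5;5;1];[::0;1;1;3;3;3;0;1;0];[::0;1;2;0;1;2;1;0;2]];
[::[::0;0;2;2;4;0;2;4;4];[::0;1;0;1;1;5;5;0;5];[::0;1;1;3;0;3;0;3;1];[::0;1;2;0;2;2;1;1;0]];
[::[::0;0;2;2;4;0;2;4;4];[::0;1;0;1;1;5;5;5;0];[::0;1;1;3;0;3;0;1;3];[::0;1;2;0;2;2;1;0;1]];
[::[::0;0;2;2;4;0;2;4;4];[::0;1;0;1;4;4;4;0;1];[::0;1;1;3;1;3;0;3;0];[::0;1;2;0;0;2;1;1;2]];
[::[::0;0;2;2;4;0;2;4;4];[::0;1;0;1;4;4;4;1;0];[::0;1;1;3;1;3;0;0;3];[::0;1;2;0;0;2;1;2;1]];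
[::[::0;0;2;2;4;0;2;4;4];[::0;1;0;3;0;3;1;1;3];[::0;1;1;0;4;4;4;0;1];[::0;1;2;1;1;2;0;2;0]];
[::[::0;0;2;2;4;0;2;4;4];[::0;1;0;3;0;3;1;3;1];[::0;1;1;0;4;4;4;1;0];[::0;1;2;1;1;2;0;0;2]];
[::[::0;0;2;2;4;0;2;4;4];[::0;1;0;3;1;3;1;0;3];[::0;1;1;0;0;5;5;5;1];[::0;1;2;1;2;2;0;1;0]];
[::[::0;0;2;2;4;0;2;4;4];[::0;1;0;3;1;3;1;3;0];[::0;1;1;0;0;5;5;1;5];[::0;1;2;1;2;2;0;0;1]];
[::[::0;0;2;2;4;0;2;4;4];[::0;1;0;3;3;3;1;0;1];[::0;1;1;0;1;5;5;5;0];[::0;1;2;1;0;2;0;1;2]];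
[::[::0;0;2;2;4;0;2;4;4];[::0;1;0;3;3;3;1;1;0];[::0;1;1;0;1;5;5;0;5];[::0;1;2;1;0;2;0;2;1]];
[::[::0;0;2;2;4;0;4;2;4];[::0;1;0;1;0;5;1;5;5];[::0;1;1;3;3;3;0;0;1];[::0;1;2;0;1;2;2;1;0]];
[::[::0;0;2;2;4;0;4;2;4];[::0;1;0;1;0;5;5;5;1];[::0;1;1;3;3;3;1;0;0];[::0;1;2;0;1;2;0;1;2]];
[::[::0;0;2;2;4;0;4;2;4];[::0;1;0;1;1;5;0;5;5];[::0;1;1;3;0;3;3;0;1];[::0;1;2;0;2;2;1;1;0]];
[::[::0;0;2;2;4;0;4;2;4];[::0;1;0;1;1;5;5;5;0];[::0;1;1;3;0;3;1;0;3];[::0;1;2;0;2;2;0;1;1]];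
[::[::0;0;2;2;4;0;4;2;4];[::0;1;0;1;4;4;0;4;1];[::0;1;1;3;1;3;3;0;0];[::0;1;2;0;0;2;1;1;2]];
[::[::0;0;2;2;4;0;4;2;4];[::0;1;0;1;4;4;1;4;0];[::0;1;1;3;1;3;0;0;3];[::0;1;2;0;0;2;2;1;1]];
[::[::0;0;2;2;4;0;4;2;4];[::0;1;0;3;0;3;1;1;3];[::0;1;1;0;4;4;0;4;1];[::0;1;2;1;1;2;2;0;0]];
[::[::0;0;2;2;4;0;4;2;4];[::0;1;0;3;0;3;3;1;1];[::0;1;1;0;4;4;1;4;0];[::0;1;2;1;1;2;0;0;2]];
[::[::0;0;2;2;4;0;4;2;4];[::0;1;0;3;1;3;0;1;3];[::0;1;1;0;0;5;5;5;1];[::0;1;2;1;2;2;1;0;0]];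
[::[::0;0;2;2;4;0;4;2;4];[::0;1;0;3;1;3;3;1;0];[::0;1;1;0;0;5;1;5;5];[::0;1;2;1;2;2;0;0;1]];
[::[::0;0;2;2;4;0;4;2;4];[::0;1;0;3;3;3;0;1;1];[::0;1;1;0;1;5;5;5;0];[::0;1;2;1;0;2;1;0;2]];
[::[::0;0;2;2;4;0;4;2;4];[::0;1;0;3;3;3;1;1;0];[::0;1;1;0;1;5;0;5;5];[::0;1;2;1;0;2;2;0;1]];
[::[::0;0;2;2;4;0;4;4;2];[::0;1;0;1;0;5;1;5;5];[::0;1;1;3;3;3;0;1;0];[::0;1;2;0;1;2;2;0;1]];
[::[::0;0;2;2;4;0;4;4;2];[::0;1;0;1;0;5;5;1;5];[::0;1;1;3;3;3;1;0;0];[::0;1;2;0;1;2;0;2;1]];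
[::[::0;0;2;2;4;0;4;4;2];[::0;1;0;1;1;5;0;5;5];[::0;1;1;3;0;3;3;1;0];[::0;1;2;0;2;2;1;0;1]];
[::[::0;0;2;2;4;0;4;4;2];[::0;1;0;1;1;5;5;0;5];[::0;1;1;3;0;3;1;3;0];[::0;1;2;0;2;2;0;1;1]];
[::[::0;0;2;2;4;0;4;4;2];[::0;1;0;1;4;4;0;1;4];[::0;1;1;3;1;3;3;0;0];[::0;1;2;0;0;2;1;2;1]];
[::[::0;0;2;2;4;0;4;4;2];[::0;1;0;1;4;4;1;0;4];[::0;1;1;3;1;3;0;3;0];[::0;1;2;0;0;2;2;1;1]];
[::[::0;0;2;2;4;0;4;4;2];[::0;1;0;3;0;3;1;3;1];[::0;1;1;0;4;4;0;1;4];[::0;1;2;1;1;2;2;0;0]];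
[::[::0;0;2;2;4;0;4;4;2];[::0;1;0;3;0;3;3;1;1];[::0;1;1;0;4;4;1;0;4];[::0;1;2;1;1;2;0;2;0]];
[::[::0;0;2;2;4;0;4;4;2];[::0;1;0;3;1;3;0;3;1];[::0;1;1;0;0;5;5;1;5];[::0;1;2;1;2;2;1;0;0]];
[::[::0;0;2;2;4;0;4;4;2];[::0;1;0;3;1;3;3;0;1];[::0;1;1;0;0;5;1;5;5];[::0;1;2;1;2;2;0;1;0]];
[::[::0;0;2;2;4;0;4;4;2];[::0;1;0;3;3;3;0;1;1];[::0;1;1;0;1;5;5;0;5];[::0;1;2;1;0;2;1;2;0]];
[::[::0;0;2;2;4;0;4;4;2];[::0;1;0;3;3;3;1;0;1];[::0;1;1;0;1;5;0;5;5];[::0;1;2;1;0;2;2;1;0]];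
[::[::0;0;2;2;4;2;0;4;4];[::0;1;0;1;0;5;5;1;5];[::0;1;1;3;3;0;3;0;1];[::0;1;2;0;1;1;2;2;0]];
[::[::0;0;2;2;4;2;0;4;4];[::0;1;0;1;0;5;5;5;1];[::0;1;1;3;3;0;3;1;0];[::0;1;2;0;1;1;2;0;2]];
[::[::0;0;2;2;4;2;0;4;4];[::0;1;0;1;1;5;5;0;5];[::0;1;1;3;0;0;3;3;1];[::0;1;2;0;2;1;2;1;0]];
[::[::0;0;2;2;4;2;0;4;4];[::0;1;0;1;1;5;5;5;0];[::0;1;1;3;0;0;3;1;3];[::0;1;2;0;2;1;2;0;1]];
[::[::0;0;2;2;4;2;0;4;4];[::0;1;0;1;4;4;4;0;1];[::0;1;1;3;1;0;3;3;0];[::0;1;2;0;0;1;2;1;2]];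
[::[::0;0;2;2;4;2;0;4;4];[::0;1;0;1;4;4;4;1;0];[::0;1;1;3;1;0;3;0;3];[::0;1;2;0;0;1;2;2;1]];
[::[::0;0;2;2;4;2;0;4;4];[::0;1;0;3;0;1;3;1;3];[::0;1;1;0;4;4;4;0;1];[::0;1;2;1;1;0;2;2;0]];
[::[::0;0;2;2;4;2;0;4;4];[::0;1;0;3;0;1;3;3;1];[::0;1;1;0;4;4;4;1;0];[::0;1;2;1;1;0;2;0;2]];
[::[::0;0;2;2;4;2;0;4;4];[::0;1;0;3;1;1;3;0;3];[::0;1;1;0;0;5;5;5;1];[::0;1;2;1;2;0;2;1;0]];
[::[::0;0;2;2;4;2;0;4;4];[::0;1;0;3;1;1;3;3;0];[::0;1;1;0;0;5;5;1;5];[::0;1;2;1;2;0;2;0;1]];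
[::[::0;0;2;2;4;2;0;4;4];[::0;1;0;3;3;1;3;0;1];[::0;1;1;0;1;5;5;5;0];[::0;1;2;1;0;0;2;1;2]];
[::[::0;0;2;2;4;2;0;4;4];[::0;1;0;3;3;1;3;1;0];[::0;1;1;0;1;5;5;0;5];[::0;1;2;1;0;0;2;2;1]];
[::[::0;0;2;2;4;2;4;0;4];[::0;1;0;1;0;5;1;5;5];[::0;1;1;3;3;0;0;3;1];[::0;1;2;0;1;1;2;2;0]];
[::[::0;0;2;2;4;2;4;0;4];[::0;1;0;1;0;5;5;5;1];[::0;1;1;3;3;0;1;3;0];[::0;1;2;0;1;1;0;2;2]];
[::[::0;0;2;2;4;2;4;0;4];[::0;1;0;1;1;5;0;5;5];[::0;1;1;3;0;0;3;3;1];[::0;1;2;0;2;1;1;2;0]];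
[::[::0;0;2;2;4;2;4;0;4];[::0;1;0;1;1;5;5;5;0];[::0;1;1;3;0;0;1;3;3];[::0;1;2;0;2;1;0;2;1]];
[::[::0;0;2;2;4;2;4;0;4];[::0;1;0;1;4;4;0;4;1];[::0;1;1;3;1;0;3;3;0];[::0;1;2;0;0;1;1;2;2]];
[::[::0;0;2;2;4;2;4;0;4];[::0;1;0;1;4;4;1;4;0];[::0;1;1;3;1;0;0;3;3];[::0;1;2;0;0;1;2;2;1]];
[::[::0;0;2;2;4;2;4;0;4];[::0;1;0;3;0;1;1;3;3];[::0;1;1;0;4;4;0;4;1];[::0;1;2;1;1;0;2;2;0]];
[::[::0;0;2;2;4;2;4;0;4];[::0;1;0;3;0;1;3;3;1];[::0;1;1;0;4;4;1;4;0];[::0;1;2;1;1;0;0;2;2]];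
[::[::0;0;2;2;4;2;4;0;4];[::0;1;0;3;1;1;0;3;3];[::0;1;1;0;0;5;5;5;1];[::0;1;2;1;2;0;1;2;0]];
[::[::0;0;2;2;4;2;4;0;4];[::0;1;0;3;1;1;3;3;0];[::0;1;1;0;0;5;1;5;5];[::0;1;2;1;2;0;0;2;1]];
[::[::0;0;2;2;4;2;4;0;4];[::0;1;0;3;3;1;0;3;1];[::0;1;1;0;1;5;5;5;0];[::0;1;2;1;0;0;1;2;2]];
[::[::0;0;2;2;4;2;4;0;4];[::0;1;0;3;3;1;1;3;0];[::0;1;1;0;1;5;0;5;5];[::0;1;2;1;0;0;2;2;1]];
[::[::0;0;2;2;4;2;4;4;0];[::0;1;0;1;0;5;1;5;5];[::0;1;1;3;3;0;0;1;3];[::0;1;2;0;1;1;2;0;2]];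
[::[::0;0;2;2;4;2;4;4;0];[::0;1;0;1;0;5;5;1;5];[::0;1;1;3;3;0;1;0;3];[::0;1;2;0;1;1;0;2;2]];
[::[::0;0;2;2;4;2;4;4;0];[::0;1;0;1;1;5;0;5;5];[::0;1;1;3;0;0;3;1;3];[::0;1;2;0;2;1;1;0;2]];
[::[::0;0;2;2;4;2;4;4;0];[::0;1;0;1;1;5;5;0;5];[::0;1;1;3;0;0;1;3;3];[::0;1;2;0;2;1;0;1;2]];
[::[::0;0;2;2;4;2;4;4;0];[::0;1;0;1;4;4;0;1;4];[::0;1;1;3;1;0;3;0;3];[::0;1;2;0;0;1;1;2;2]];
[::[::0;0;2;2;4;2;4;4;0];[::0;1;0;1;4;4;1;0;4];[::0;1;1;3;1;0;0;3;3];[::0;1;2;0;0;1;2;1;2]];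
[::[::0;0;2;2;4;2;4;4;0];[::0;1;0;3;0;1;1;3;3];[::0;1;1;0;4;4;0;1;4];[::0;1;2;1;1;0;2;0;2]];
[::[::0;0;2;2;4;2;4;4;0];[::0;1;0;3;0;1;3;1;3];[::0;1;1;0;4;4;1;0;4];[::0;1;2;1;1;0;0;2;2]];
[::[::0;0;2;2;4;2;4;4;0];[::0;1;0;3;1;1;0;3;3];[::0;1;1;0;0;5;5;1;5];[::0;1;2;1;2;0;1;0;2]];
[::[::0;0;2;2;4;2;4;4;0];[::0;1;0;3;1;1;3;0;3];[::0;1;1;0;0;5;1;5;5];[::0;1;2;1;2;0;0;1;2]];
[::[::0;0;2;2;4;2;4;4;0];[::0;1;0;3;3;1;0;1;3];[::0;1;1;0;1;5;5;0;5];[::0;1;2;1;0;0;1;2;2]];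
[::[::0;0;2;2;4;2;4;4;0];[::0;1;0;3;3;1;1;0;3];[::0;1;1;0;1;5;0;5;5];[::0;1;2;1;0;0;2;1;2]];
[::[::0;0;2;2;4;4;0;2;4];[::0;1;0;1;0;1;6;6;6];[::0;1;1;3;3;0;3;0;1];[::0;1;2;0;1;2;2;1;0]];
[::[::0;0;2;2;4;4;0;2;4];[::0;1;0;1;0;5;5;5;1];[::0;1;1;3;3;1;3;0;0];[::0;1;2;0;1;0;2;1;2]];
[::[::0;0;2;2;4;4;0;2;4];[::0;1;0;1;1;0;6;6;6];[::0;1;1;3;0;3;3;0;1];[::0;1;2;0;2;1;2;1;0]];
[::[::0;0;2;2;4;4;0;2;4];[::0;1;0;1;1;5;5;5;0];[::0;1;1;3;0;1;3;0;3];[::0;1;2;0;2;0;2;1;1]];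
[::[::0;0;2;2;4;4;0;2;4];[::0;1;0;1;4;0;4;4;1];[::0;1;1;3;1;3;3;0;0];[::0;1;2;0;0;1;2;1;2]];
[::[::0;0;2;2;4;4;0;2;4];[::0;1;0;1;4;1;4;4;0];[::0;1;1;3;1;0;3;0;3];[::0;1;2;0;0;2;2;1;1]];
[::[::0;0;2;2;4;4;0;2;4];[::0;1;0;3;0;1;3;1;3];[::0;1;1;0;4;0;4;4;1];[::0;1;2;1;1;2;2;0;0]];
[::[::0;0;2;2;4;4;0;2;4];[::0;1;0;3;0;3;3;1;1];[::0;1;1;0;4;1;4;4;0];[::0;1;2;1;1;0;2;0;2]];
[::[::0;0;2;2;4;4;0;2;4];[::0;1;0;3;1;0;3;1;3];[::0;1;1;0;0;5;5;5;1];[::0;1;2;1;2;1;2;0;0]];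
[::[::0;0;2;2;4;4;0;2;4];[::0;1;0;3;1;3;3;1;0];[::0;1;1;0;0;1;6;6;6];[::0;1;2;1;2;0;2;0;1]];
[::[::0;0;2;2;4;4;0;2;4];[::0;1;0;3;3;0;3;1;1];[::0;1;1;0;1;5;5;5;0];[::0;1;2;1;0;1;2;0;2]];
[::[::0;0;2;2;4;4;0;2;4];[::0;1;0;3;3;1;3;1;0];[::0;1;1;0;1;0;6;6;6];[::0;1;2;1;0;2;2;0;1]];
[::[::0;0;2;2;4;4;0;4;2];[::0;1;0;1;0;1;6;6;6];[::0;1;1;3;3;0;3;1;0];[::0;1;2;0;1;2;2;0;1]];
[::[::0;0;2;2;4;4;0;4;2];[::0;1;0;1;0;5;5;1;5];[::0;1;1;3;3;1;3;0;0];[::0;1;2;0;1;0;2;2;1]];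
[::[::0;0;2;2;4;4;0;4;2];[::0;1;0;1;1;0;6;6;6];[::0;1;1;3;0;3;3;1;0];[::0;1;2;0;2;1;2;0;1]];
[::[::0;0;2;2;4;4;0;4;2];[::0;1;0;1;1;5;5;0;5];[::0;1;1;3;0;1;3;3;0];[::0;1;2;0;2;0;2;1;1]];
[::[::0;0;2;2;4;4;0;4;2];[::0;1;0;1;4;0;4;1;4];[::0;1;1;3;1;3;3;0;0];[::0;1;2;0;0;1;2;2;1]];
[::[::0;0;2;2;4;4;0;4;2];[::0;1;0;1;4;1;4;0;4];[::0;1;1;3;1;0;3;3;0];[::0;1;2;0;0;2;2;1;1]];
[::[::0;0;2;2;4;4;0;4;2];[::0;1;0;3;0;1;3;3;1];[::0;1;1;0;4;0;4;1;4];[::0;1;2;1;1;2;2;0;0]];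
[::[::0;0;2;2;4;4;0;4;2];[::0;1;0;3;0;3;3;1;1];[::0;1;1;0;4;1;4;0;4];[::0;1;2;1;1;0;2;2;0]];
[::[::0;0;2;2;4;4;0;4;2];[::0;1;0;3;1;0;3;3;1];[::0;1;1;0;0;5;5;1;5];[::0;1;2;1;2;1;2;0;0]];
[::[::0;0;2;2;4;4;0;4;2];[::0;1;0;3;1;3;3;0;1];[::0;1;1;0;0;1;6;6;6];[::0;1;2;1;2;0;2;1;0]];
[::[::0;0;2;2;4;4;0;4;2];[::0;1;0;3;3;0;3;1;1];[::0;1;1;0;1;5;5;0;5];[::0;1;2;1;0;1;2;2;0]];
[::[::0;0;2;2;4;4;0;4;2];[::0;1;0;3;3;1;3;0;1];[::0;1;1;0;1;0;6;6;6];[::0;1;2;1;0;2;2;1;0]];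
[::[::0;0;2;2;4;4;2;0;4];[::0;1;0;1;0;1;6;6;6];[::0;1;1;3;3;0;0;3;1];[::0;1;2;0;1;2;1;2;0]];
[::[::0;0;2;2;4;4;2;0;4];[::0;1;0;1;0;5;5;5;1];[::0;1;1;3;3;1;0;3;0];[::0;1;2;0;1;0;1;2;2]];
[::[::0;0;2;2;4;4;2;0;4];[::0;1;0;1;1;0;6;6;6];[::0;1;1;3;0;3;0;3;1];[::0;1;2;0;2;1;1;2;0]];
[::[::0;0;2;2;4;4;2;0;4];[::0;1;0;1;1;5;5;5;0];[::0;1;1;3;0;1;0;3;3];[::0;1;2;0;2;0;1;2;1]];
[::[::0;0;2;2;4;4;2;0;4];[::0;1;0;1;4;0;4;4;1];[::0;1;1;3;1;3;0;3;0];[::0;1;2;0;0;1;1;2;2]];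
[::[::0;0;2;2;4;4;2;0;4];[::0;1;0;1;4;1;4;4;0];[::0;1;1;3;1;0;0;3;3];[::0;1;2;0;0;2;1;2;1]];
[::[::0;0;2;2;4;4;2;0;4];[::0;1;0;3;0;1;1;3;3];[::0;1;1;0;4;0;4;4;1];[::0;1;2;1;1;2;0;2;0]];
[::[::0;0;2;2;4;4;2;0;4];[::0;1;0;3;0;3;1;3;1];[::0;1;1;0;4;1;4;4;0];[::0;1;2;1;1;0;0;2;2]];
[::[::0;0;2;2;4;4;2;0;4];[::0;1;0;3;1;0;1;3;3];[::0;1;1;0;0;5;5;5;1];[::0;1;2;1;2;1;0;2;0]];
[::[::0;0;2;2;4;4;2;0;4];[::0;1;0;3;1;3;1;3;0];[::0;1;1;0;0;1;6;6;6];[::0;1;2;1;2;0;0;2;1]];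
[::[::0;0;2;2;4;4;2;0;4];[::0;1;0;3;3;0;1;3;1];[::0;1;1;0;1;5;5;5;0];[::0;1;2;1;0;1;0;2;2]];
[::[::0;0;2;2;4;4;2;0;4];[::0;1;0;3;3;1;1;3;0];[::0;1;1;0;1;0;6;6;6];[::0;1;2;1;0;2;0;2;1]];
[::[::0;0;2;2;4;4;2;4;0];[::0;1;0;1;0;1;6;6;6];[::0;1;1;3;3;0;0;1;3];[::0;1;2;0;1;2;1;0;2]];
[::[::0;0;2;2;4;4;2;4;0];[::0;1;0;1;0;5;5;1;5];[::0;1;1;3;3;1;0;0;3];[::0;1;2;0;1;0;1;2;2]];
[::[::0;0;2;2;4;4;2;4;0];[::0;1;0;1;1;0;6;6;6];[::0;1;1;3;0;3;0;1;3];[::0;1;2;0;2;1;1;0;2]];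
[::[::0;0;2;2;4;4;2;4;0];[::0;1;0;1;1;5;5;0;5];[::0;1;1;3;0;1;0;3;3];[::0;1;2;0;2;0;1;1;2]];
[::[::0;0;2;2;4;4;2;4;0];[::0;1;0;1;4;0;4;1;4];[::0;1;1;3;1;3;0;0;3];[::0;1;2;0;0;1;1;2;2]];
[::[::0;0;2;2;4;4;2;4;0];[::0;1;0;1;4;1;4;0;4];[::0;1;1;3;1;0;0;3;3];[::0;1;2;0;0;2;1;1;2]];
[::[::0;0;2;2;4;4;2;4;0];[::0;1;0;3;0;1;1;3;3];[::0;1;1;0;4;0;4;1;4];[::0;1;2;1;1;2;0;0;2]];
[::[::0;0;2;2;4;4;2;4;0];[::0;1;0;3;0;3;1;1;3];[::0;1;1;0;4;1;4;0;4];[::0;1;2;1;1;0;0;2;2]];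
[::[::0;0;2;2;4;4;2;4;0];[::0;1;0;3;1;0;1;3;3];[::0;1;1;0;0;5;5;1;5];[::0;1;2;1;2;1;0;0;2]];
[::[::0;0;2;2;4;4;2;4;0];[::0;1;0;3;1;3;1;0;3];[::0;1;1;0;0;1;6;6;6];[::0;1;2;1;2;0;0;1;2]];
[::[::0;0;2;2;4;4;2;4;0];[::0;1;0;3;3;0;1;1;3];[::0;1;1;0;1;5;5;0;5];[::0;1;2;1;0;1;0;2;2]];
[::[::0;0;2;2;4;4;2;4;0];[::0;1;0;3;3;1;1;0;3];[::0;1;1;0;1;0;6;6;6];[::0;1;2;1;0;2;0;1;2]];
[::[::0;0;2;2;4;4;4;0;2];[::0;1;0;1;0;1;6;6;6];[::0;1;1;3;3;0;1;3;0];[::0;1;2;0;1;2;0;2;1]];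
[::[::0;0;2;2;4;4;4;0;2];[::0;1;0;1;0;5;1;5;5];[::0;1;1;3;3;1;0;3;0];[::0;1;2;0;1;0;2;2;1]];
[::[::0;0;2;2;4;4;4;0;2];[::0;1;0;1;1;0;6;6;6];[::0;1;1;3;0;3;1;3;0];[::0;1;2;0;2;1;0;2;1]];
[::[::0;0;2;2;4;4;4;0;2];[::0;1;0;1;1;5;0;5;5];[::0;1;1;3;0;1;3;3;0];[::0;1;2;0;2;0;1;2;1]];
[::[::0;0;2;2;4;4;4;0;2];[::0;1;0;1;4;0;1;4;4];[::0;1;1;3;1;3;0;3;0];[::0;1;2;0;0;1;2;2;1]];
[::[::0;0;2;2;4;4;4;0;2];[::0;1;0;1;4;1;0;4;4];[::0;1;1;3;1;0;3;3;0];[::0;1;2;0;0;2;1;2;1]];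
[::[::0;0;2;2;4;4;4;0;2];[::0;1;0;3;0;1;3;3;1];[::0;1;1;0;4;0;1;4;4];[::0;1;2;1;1;2;0;2;0]];
[::[::0;0;2;2;4;4;4;0;2];[::0;1;0;3;0;3;1;3;1];[::0;1;1;0;4;1;0;4;4];[::0;1;2;1;1;0;2;2;0]];
[::[::0;0;2;2;4;4;4;0;2];[::0;1;0;3;1;0;3;3;1];[::0;1;1;0;0;5;1;5;5];[::0;1;2;1;2;1;0;2;0]];
[::[::0;0;2;2;4;4;4;0;2];[::0;1;0;3;1;3;0;3;1];[::0;1;1;0;0;1;6;6;6];[::0;1;2;1;2;0;1;2;0]];
[::[::0;0;2;2;4;4;4;0;2];[::0;1;0;3;3;0;1;3;1];[::0;1;1;0;1;5;0;5;5];[::0;1;2;1;0;1;2;2;0]];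
[::[::0;0;2;2;4;4;4;0;2];[::0;1;0;3;3;1;0;3;1];[::0;1;1;0;1;0;6;6;6];[::0;1;2;1;0;2;1;2;0]];
[::[::0;0;2;2;4;4;4;2;0];[::0;1;0;1;0;1;6;6;6];[::0;1;1;3;3;0;1;0;3];[::0;1;2;0;1;2;0;1;2]];
[::[::0;0;2;2;4;4;4;2;0];[::0;1;0;1;0;5;1;5;5];[::0;1;1;3;3;1;0;0;3];[::0;1;2;0;1;0;2;1;2]];
[::[::0;0;2;2;4;4;4;2;0];[::0;1;0;1;1;0;6;6;6];[::0;1;1;3;0;3;1;0;3];[::0;1;2;0;2;1;0;1;2]];
[::[::0;0;2;2;4;4;4;2;0];[::0;1;0;1;1;5;0;5;5];[::0;1;1;3;0;1;3;0;3];[::0;1;2;0;2;0;1;1;2]];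
[::[::0;0;2;2;4;4;4;2;0];[::0;1;0;1;4;0;1;4;4];[::0;1;1;3;1;3;0;0;3];[::0;1;2;0;0;1;2;1;2]];
[::[::0;0;2;2;4;4;4;2;0];[::0;1;0;1;4;1;0;4;4];[::0;1;1;3;1;0;3;0;3];[::0;1;2;0;0;2;1;1;2]];
[::[::0;0;2;2;4;4;4;2;0];[::0;1;0;3;0;1;3;1;3];[::0;1;1;0;4;0;1;4;4];[::0;1;2;1;1;2;0;0;2]];
[::[::0;0;2;2;4;4;4;2;0];[::0;1;0;3;0;3;1;1;3];[::0;1;1;0;4;1;0;4;4];[::0;1;2;1;1;0;2;0;2]];
[::[::0;0;2;2;4;4;4;2;0];[::0;1;0;3;1;0;3;1;3];[::0;1;1;0;0;5;1;5;5];[::0;1;2;1;2;1;0;0;2]];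
[::[::0;0;2;2;4;4;4;2;0];[::0;1;0;3;1;3;0;1;3];[::0;1;1;0;0;1;6;6;6];[::0;1;2;1;2;0;1;0;2]];
[::[::0;0;2;2;4;4;4;2;0];[::0;1;0;3;3;0;1;1;3];[::0;1;1;0;1;5;0;5;5];[::0;1;2;1;0;1;2;0;2]];
[::[::0;0;2;2;4;4;4;2;0];[::0;1;0;3;3;1;0;1;3];[::0;1;1;0;1;0;6;6;6];[::0;1;2;1;0;2;1;0;2]];
[::[::0;0;2;3;0;2;2;3;3];[::0;1;0;0;4;1;4;1;4];[::0;1;1;3;3;3;0;0;1];[::0;1;2;1;2;0;1;2;0]];
[::[::0;0;2;3;0;2;2;3;3];[::0;1;0;0;4;1;4;4;1];[::0;1;1;3;3;3;0;1;0];[::0;1;2;1;2;0;1;0;2]];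
[::[::0;0;2;3;0;2;2;3;3];[::0;1;0;0;4;4;1;1;4];[::0;1;1;3;3;0;3;0;1];[::0;1;2;1;2;1;0;2;0]];
[::[::0;0;2;3;0;2;2;3;3];[::0;1;0;0;4;4;1;4;1];[::0;1;1;3;3;0;3;1;0];[::0;1;2;1;2;1;0;0;2]];
[::[::0;0;2;3;0;2;2;3;3];[::0;1;0;1;4;1;4;0;4];[::0;1;1;0;4;4;0;4;1];[::0;1;2;2;2;0;1;1;0]];
[::[::0;0;2;3;0;2;2;3;3];[::0;1;0;1;4;1;4;4;0];[::0;1;1;0;4;4;0;1;4];[::0;1;2;2;2;0;1;0;1]];
[::[::0;0;2;3;0;2;2;3;3];[::0;1;0;1;4;4;1;0;4];[::0;1;1;0;4;0;4;4;1];[::0;1;2;2;2;1;0;1;0]];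
[::[::0;0;2;3;0;2;2;3;3];[::0;1;0;1;4;4;1;4;0];[::0;1;1;0;4;0;4;1;4];[::0;1;2;2;2;1;0;0;1]];
[::[::0;0;2;3;0;2;2;3;3];[::0;1;0;3;3;1;3;0;1];[::0;1;1;1;4;4;0;4;0];[::0;1;2;0;2;0;1;1;2]];
[::[::0;0;2;3;0;2;2;3;3];[::0;1;0;3;3;1;3;1;0];[::0;1;1;1;4;4;0;0;4];[::0;1;2;0;2;0;1;2;1]];
[::[::0;0;2;3;0;2;2;3;3];[::0;1;0;3;3;3;1;0;1];[::0;1;1;1;4;0;4;4;0];[::0;1;2;0;2;1;0;1;2]];
[::[::0;0;2;3;0;2;2;3;3];[::0;1;0;3;3;3;1;1;0];[::0;1;1;1;4;0;4;0;4];[::0;1;2;0;2;1;0;2;1]];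
[::[::0;0;2;3;0;2;3;2;3];[::0;1;0;0;4;1;1;4;4];[::0;1;1;3;3;3;0;0;1];[::0;1;2;1;2;0;2;1;0]];
[::[::0;0;2;3;0;2;3;2;3];[::0;1;0;0;4;1;4;4;1];[::0;1;1;3;3;3;1;0;0];[::0;1;2;1;2;0;0;1;2]];
[::[::0;0;2;3;0;2;3;2;3];[::0;1;0;0;4;4;1;1;4];[::0;1;1;3;3;0;0;3;1];[::0;1;2;1;2;1;2;0;0]];
[::[::0;0;2;3;0;2;3;2;3];[::0;1;0;0;4;4;4;1;1];[::0;1;1;3;3;0;1;3;0];[::0;1;2;1;2;1;0;0;2]];
[::[::0;0;2;3;0;2;3;2;3];[::0;1;0;1;4;1;0;4;4];[::0;1;1;0;4;4;4;0;1];[::0;1;2;2;2;0;1;1;0]];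
[::[::0;0;2;3;0;2;3;2;3];[::0;1;0;1;4;1;4;4;0];[::0;1;1;0;4;4;1;0;4];[::0;1;2;2;2;0;0;1;1]];
[::[::0;0;2;3;0;2;3;2;3];[::0;1;0;1;4;4;0;1;4];[::0;1;1;0;4;0;4;4;1];[::0;1;2;2;2;1;1;0;0]];
[::[::0;0;2;3;0;2;3;2;3];[::0;1;0;1;4;4;4;1;0];[::0;1;1;0;4;0;1;4;4];[::0;1;2;2;2;1;0;0;1]];
[::[::0;0;2;3;0;2;3;2;3];[::0;1;0;3;3;1;0;3;1];[::0;1;1;1;4;4;4;0;0];[::0;1;2;0;2;0;1;1;2]];
[::[::0;0;2;3;0;2;3;2;3];[::0;1;0;3;3;1;1;3;0];[::0;1;1;1;4;4;0;0;4];[::0;1;2;0;2;0;2;1;1]];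
[::[::0;0;2;3;0;2;3;2;3];[::0;1;0;3;3;3;0;1;1];[::0;1;1;1;4;0;4;4;0];[::0;1;2;0;2;1;1;0;2]];
[::[::0;0;2;3;0;2;3;2;3];[::0;1;0;3;3;3;1;1;0];[::0;1;1;1;4;0;0;4;4];[::0;1;2;0;2;1;2;0;1]];
[::[::0;0;2;3;0;2;3;3;2];[::0;1;0;0;4;1;1;4;4];[::0;1;1;3;3;3;0;1;0];[::0;1;2;1;2;0;2;0;1]];
[::[::0;0;2;3;0;2;3;3;2];[::0;1;0;0;4;1;4;1;4];[::0;1;1;3;3;3;1;0;0];[::0;1;2;1;2;0;0;2;1]];
[::[::0;0;2;3;0;2;3;3;2];[::0;1;0;0;4;4;1;4;1];[::0;1;1;3;3;0;0;1;3];[::0;1;2;1;2;1;2;0;0]];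
[::[::0;0;2;3;0;2;3;3;2];[::0;1;0;0;4;4;4;1;1];[::0;1;1;3;3;0;1;0;3];[::0;1;2;1;2;1;0;2;0]];
[::[::0;0;2;3;0;2;3;3;2];[::0;1;0;1;4;1;0;4;4];[::0;1;1;0;4;4;4;1;0];[::0;1;2;2;2;0;1;0;1]];
[::[::0;0;2;3;0;2;3;3;2];[::0;1;0;1;4;1;4;0;4];[::0;1;1;0;4;4;1;4;0];[::0;1;2;2;2;0;0;1;1]];
[::[::0;0;2;3;0;2;3;3;2];[::0;1;0;1;4;4;0;4;1];[::0;1;1;0;4;0;4;1;4];[::0;1;2;2;2;1;1;0;0]];
[::[::0;0;2;3;0;2;3;3;2];[::0;1;0;1;4;4;4;0;1];[::0;1;1;0;4;0;1;4;4];[::0;1;2;2;2;1;0;1;0]];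
[::[::0;0;2;3;0;2;3;3;2];[::0;1;0;3;3;1;0;1;3];[::0;1;1;1;4;4;4;0;0];[::0;1;2;0;2;0;1;2;1]];
[::[::0;0;2;3;0;2;3;3;2];[::0;1;0;3;3;1;1;0;3];[::0;1;1;1;4;4;0;4;0];[::0;1;2;0;2;0;2;1;1]];
[::[::0;0;2;3;0;2;3;3;2];[::0;1;0;3;3;3;0;1;1];[::0;1;1;1;4;0;4;0;4];[::0;1;2;0;2;1;1;2;0]];
[::[::0;0;2;3;0;2;3;3;2];[::0;1;0;3;3;3;1;0;1];[::0;1;1;1;4;0;0;4;4];[::0;1;2;0;2;1;2;1;0]];
[::[::0;0;2;3;0;3;2;2;3];[::0;1;0;0;4;1;1;4;4];[::0;1;1;3;3;0;3;0;1];[::0;1;2;1;2;2;0;1;0]];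
[::[::0;0;2;3;0;3;2;2;3];[::0;1;0;0;4;1;4;1;4];[::0;1;1;3;3;0;0;3;1];[::0;1;2;1;2;2;1;0;0]];
[::[::0;0;2;3;0;3;2;2;3];[::0;1;0;0;4;4;1;4;1];[::0;1;1;3;3;1;3;0;0];[::0;1;2;1;2;0;0;1;2]];
[::[::0;0;2;3;0;3;2;2;3];[::0;1;0;0;4;4;4;1;1];[::0;1;1;3;3;1;0;3;0];[::0;1;2;1;2;0;1;0;2]];
[::[::0;0;2;3;0;3;2;2;3];[::0;1;0;1;4;0;1;4;4];[::0;1;1;0;4;4;4;0;1];[::0;1;2;2;2;1;0;1;0]];
[::[::0;0;2;3;0;3;2;2;3];[::0;1;0;1;4;0;4;1;4];[::0;1;1;0;4;4;0;4;1];[::0;1;2;2;2;1;1;0;0]];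
[::[::0;0;2;3;0;3;2;2;3];[::0;1;0;1;4;4;1;4;0];[::0;1;1;0;4;1;4;0;4];[::0;1;2;2;2;0;0;1;1]];
[::[::0;0;2;3;0;3;2;2;3];[::0;1;0;1;4;4;4;1;0];[::0;1;1;0;4;1;0;4;4];[::0;1;2;2;2;0;1;0;1]];
[::[::0;0;2;3;0;3;2;2;3];[::0;1;0;3;3;0;1;3;1];[::0;1;1;1;4;4;4;0;0];[::0;1;2;0;2;1;0;1;2]];
[::[::0;0;2;3;0;3;2;2;3];[::0;1;0;3;3;0;3;1;1];[::0;1;1;1;4;4;0;4;0];[::0;1;2;0;2;1;1;0;2]];
[::[::0;0;2;3;0;3;2;2;3];[::0;1;0;3;3;1;1;3;0];[::0;1;1;1;4;0;4;0;4];[::0;1;2;0;2;2;0;1;1]];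
[::[::0;0;2;3;0;3;2;2;3];[::0;1;0;3;3;1;3;1;0];[::0;1;1;1;4;0;0;4;4];[::0;1;2;0;2;2;1;0;1]];
[::[::0;0;2;3;0;3;2;3;2];[::0;1;0;0;4;1;1;4;4];[::0;1;1;3;3;0;3;1;0];[::0;1;2;1;2;2;0;0;1]];
[::[::0;0;2;3;0;3;2;3;2];[::0;1;0;0;4;1;4;4;1];[::0;1;1;3;3;0;0;1;3];[::0;1;2;1;2;2;1;0;0]];
[::[::0;0;2;3;0;3;2;3;2];[::0;1;0;0;4;4;1;1;4];[::0;1;1;3;3;1;3;0;0];[::0;1;2;1;2;0;0;2;1]];
[::[::0;0;2;3;0;3;2;3;2];[::0;1;0;0;4;4;4;1;1];[::0;1;1;3;3;1;0;0;3];[::0;1;2;1;2;0;1;2;0]];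
[::[::0;0;2;3;0;3;2;3;2];[::0;1;0;1;4;0;1;4;4];[::0;1;1;0;4;4;4;1;0];[::0;1;2;2;2;1;0;0;1]];
[::[::0;0;2;3;0;3;2;3;2];[::0;1;0;1;4;0;4;4;1];[::0;1;1;0;4;4;0;1;4];[::0;1;2;2;2;1;1;0;0]];
[::[::0;0;2;3;0;3;2;3;2];[::0;1;0;1;4;4;1;0;4];[::0;1;1;0;4;1;4;4;0];[::0;1;2;2;2;0;0;1;1]];
[::[::0;0;2;3;0;3;2;3;2];[::0;1;0;1;4;4;4;0;1];[::0;1;1;0;4;1;0;4;4];[::0;1;2;2;2;0;1;1;0]];
[::[::0;0;2;3;0;3;2;3;2];[::0;1;0;3;3;0;1;1;3];[::0;1;1;1;4;4;4;0;0];[::0;1;2;0;2;1;0;2;1]];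
[::[::0;0;2;3;0;3;2;3;2];[::0;1;0;3;3;0;3;1;1];[::0;1;1;1;4;4;0;0;4];[::0;1;2;0;2;1;1;2;0]];
[::[::0;0;2;3;0;3;2;3;2];[::0;1;0;3;3;1;1;0;3];[::0;1;1;1;4;0;4;4;0];[::0;1;2;0;2;2;0;1;1]];
[::[::0;0;2;3;0;3;2;3;2];[::0;1;0;3;3;1;3;0;1];[::0;1;1;1;4;0;0;4;4];[::0;1;2;0;2;2;1;1;0]];
[::[::0;0;2;3;0;3;3;2;2];[::0;1;0;0;4;1;4;1;4];[::0;1;1;3;3;0;1;3;0];[::0;1;2;1;2;2;0;0;1]];
[::[::0;0;2;3;0;3;3;2;2];[::0;1;0;0;4;1;4;4;1];[::0;1;1;3;3;0;1;0;3];[::0;1;2;1;2;2;0;1;0]];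
[::[::0;0;2;3;0;3;3;2;2];[::0;1;0;0;4;4;1;1;4];[::0;1;1;3;3;1;0;3;0];[::0;1;2;1;2;0;2;0;1]];
[::[::0;0;2;3;0;3;3;2;2];[::0;1;0;0;4;4;1;4;1];[::0;1;1;3;3;1;0;0;3];[::0;1;2;1;2;0;2;1;0]];
[::[::0;0;2;3;0;3;3;2;2];[::0;1;0;1;4;0;4;1;4];[::0;1;1;0;4;4;1;4;0];[::0;1;2;2;2;1;0;0;1]];
[::[::0;0;2;3;0;3;3;2;2];[::0;1;0;1;4;0;4;4;1];[::0;1;1;0;4;4;1;0;4];[::0;1;2;2;2;1;0;1;0]];
[::[::0;0;2;3;0;3;3;2;2];[::0;1;0;1;4;4;0;1;4];[::0;1;1;0;4;1;4;4;0];[::0;1;2;2;2;0;1;0;1]];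
[::[::0;0;2;3;0;3;3;2;2];[::0;1;0;1;4;4;0;4;1];[::0;1;1;0;4;1;4;0;4];[::0;1;2;2;2;0;1;1;0]];
[::[::0;0;2;3;0;3;3;2;2];[::0;1;0;3;3;0;1;1;3];[::0;1;1;1;4;4;0;4;0];[::0;1;2;0;2;1;2;0;1]];
[::[::0;0;2;3;0;3;3;2;2];[::0;1;0;3;3;0;1;3;1];[::0;1;1;1;4;4;0;0;4];[::0;1;2;0;2;1;2;1;0]];
[::[::0;0;2;3;0;3;3;2;2];[::0;1;0;3;3;1;0;1;3];[::0;1;1;1;4;0;4;4;0];[::0;1;2;0;2;2;1;0;1]];
[::[::0;0;2;3;0;3;3;2;2];[::0;1;0;3;3;1;0;3;1];[::0;1;1;1;4;0;4;0;4];[::0;1;2;0;2;2;1;1;0]];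
[::[::0;0;2;3;2;0;2;3;3];[::0;1;0;0;1;5;5;1;5];[::0;1;1;3;3;3;0;0;1];[::0;1;2;1;0;2;1;2;0]];
[::[::0;0;2;3;2;0;2;3;3];[::0;1;0;0;1;5;5;5;1];[::0;1;1;3;3;3;0;1;0];[::0;1;2;1;0;2;1;0;2]];
[::[::0;0;2;3;2;0;2;3;3];[::0;1;0;0;4;4;1;1;4];[::0;1;1;3;0;3;3;0;1];[::0;1;2;1;1;2;0;2;0]];
[::[::0;0;2;3;2;0;2;3;3];[::0;1;0;0;4;4;1;4;1];[::0;1;1;3;0;3;3;1;0];[::0;1;2;1;1;2;0;0;2]];
[::[::0;0;2;3;2;0;2;3;3];[::0;1;0;1;1;5;5;0;5];[::0;1;1;0;4;4;0;4;1];[::0;1;2;2;0;2;1;1;0]];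
[::[::0;0;2;3;2;0;2;3;3];[::0;1;0;1;1;5;5;5;0];[::0;1;1;0;4;4;0;1;4];[::0;1;2;2;0;2;1;0;1]];
[::[::0;0;2;3;2;0;2;3;3];[::0;1;0;1;4;4;1;0;4];[::0;1;1;0;0;5;5;5;1];[::0;1;2;2;1;2;0;1;0]];
[::[::0;0;2;3;2;0;2;3;3];[::0;1;0;1;4;4;1;4;0];[::0;1;1;0;0;5;5;1;5];[::0;1;2;2;1;2;0;0;1]];
[::[::0;0;2;3;2;0;2;3;3];[::0;1;0;3;1;3;3;0;1];[::0;1;1;1;4;4;0;4;0];[::0;1;2;0;0;2;1;1;2]];
[::[::0;0;2;3;2;0;2;3;3];[::0;1;0;3;1;3;3;1;0];[::0;1;1;1;4;4;0;0;4];[::0;1;2;0;0;2;1;2;1]];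
[::[::0;0;2;3;2;0;2;3;3];[::0;1;0;3;3;3;1;0;1];[::0;1;1;1;0;5;5;5;0];[::0;1;2;0;1;2;0;1;2]];
[::[::0;0;2;3;2;0;2;3;3];[::0;1;0;3;3;3;1;1;0];[::0;1;1;1;0;5;5;0;5];[::0;1;2;0;1;2;0;2;1]];
[::[::0;0;2;3;2;0;3;2;3];[::0;1;0;0;1;5;1;5;5];[::0;1;1;3;3;3;0;0;1];[::0;1;2;1;0;2;2;1;0]];
[::[::0;0;2;3;2;0;3;2;3];[::0;1;0;0;1;5;5;5;1];[::0;1;1;3;3;3;1;0;0];[::0;1;2;1;0;2;0;1;2]];
[::[::0;0;2;3;2;0;3;2;3];[::0;1;0;0;4;4;1;1;4];[::0;1;1;3;0;3;0;3;1];[::0;1;2;1;1;2;2;0;0]];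
[::[::0;0;2;3;2;0;3;2;3];[::0;1;0;0;4;4;4;1;1];[::0;1;1;3;0;3;1;3;0];[::0;1;2;1;1;2;0;0;2]];
[::[::0;0;2;3;2;0;3;2;3];[::0;1;0;1;1;5;0;5;5];[::0;1;1;0;4;4;4;0;1];[::0;1;2;2;0;2;1;1;0]];
[::[::0;0;2;3;2;0;3;2;3];[::0;1;0;1;1;5;5;5;0];[::0;1;1;0;4;4;1;0;4];[::0;1;2;2;0;2;0;1;1]];
[::[::0;0;2;3;2;0;3;2;3];[::0;1;0;1;4;4;0;1;4];[::0;1;1;0;0;5;5;5;1];[::0;1;2;2;1;2;1;0;0]];
[::[::0;0;2;3;2;0;3;2;3];[::0;1;0;1;4;4;4;1;0];[::0;1;1;0;0;5;1;5;5];[::0;1;2;2;1;2;0;0;1]];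
[::[::0;0;2;3;2;0;3;2;3];[::0;1;0;3;1;3;0;3;1];[::0;1;1;1;4;4;4;0;0];[::0;1;2;0;0;2;1;1;2]];
[::[::0;0;2;3;2;0;3;2;3];[::0;1;0;3;1;3;1;3;0];[::0;1;1;1;4;4;0;0;4];[::0;1;2;0;0;2;2;1;1]];
[::[::0;0;2;3;2;0;3;2;3];[::0;1;0;3;3;3;0;1;1];[::0;1;1;1;0;5;5;5;0];[::0;1;2;0;1;2;1;0;2]];
[::[::0;0;2;3;2;0;3;2;3];[::0;1;0;3;3;3;1;1;0];[::0;1;1;1;0;5;0;5;5];[::0;1;2;0;1;2;2;0;1]];
[::[::0;0;2;3;2;0;3;3;2];[::0;1;0;0;1;5;1;5;5];[::0;1;1;3;3;3;0;1;0];[::0;1;2;1;0;2;2;0;1]];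
[::[::0;0;2;3;2;0;3;3;2];[::0;1;0;0;1;5;5;1;5];[::0;1;1;3;3;3;1;0;0];[::0;1;2;1;0;2;0;2;1]];
[::[::0;0;2;3;2;0;3;3;2];[::0;1;0;0;4;4;1;4;1];[::0;1;1;3;0;3;0;1;3];[::0;1;2;1;1;2;2;0;0]];
[::[::0;0;2;3;2;0;3;3;2];[::0;1;0;0;4;4;4;1;1];[::0;1;1;3;0;3;1;0;3];[::0;1;2;1;1;2;0;2;0]];
[::[::0;0;2;3;2;0;3;3;2];[::0;1;0;1;1;5;0;5;5];[::0;1;1;0;4;4;4;1;0];[::0;1;2;2;0;2;1;0;1]];
[::[::0;0;2;3;2;0;3;3;2];[::0;1;0;1;1;5;5;0;5];[::0;1;1;0;4;4;1;4;0];[::0;1;2;2;0;2;0;1;1]];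
[::[::0;0;2;3;2;0;3;3;2];[::0;1;0;1;4;4;0;4;1];[::0;1;1;0;0;5;5;1;5];[::0;1;2;2;1;2;1;0;0]];
[::[::0;0;2;3;2;0;3;3;2];[::0;1;0;1;4;4;4;0;1];[::0;1;1;0;0;5;1;5;5];[::0;1;2;2;1;2;0;1;0]];
[::[::0;0;2;3;2;0;3;3;2];[::0;1;0;3;1;3;0;1;3];[::0;1;1;1;4;4;4;0;0];[::0;1;2;0;0;2;1;2;1]];
[::[::0;0;2;3;2;0;3;3;2];[::0;1;0;3;1;3;1;0;3];[::0;1;1;1;4;4;0;4;0];[::0;1;2;0;0;2;2;1;1]];
[::[::0;0;2;3;2;0;3;3;2];[::0;1;0;3;3;3;0;1;1];[::0;1;1;1;0;5;5;0;5];[::0;1;2;0;1;2;1;2;0]];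
[::[::0;0;2;3;2;0;3;3;2];[::0;1;0;3;3;3;1;0;1];[::0;1;1;1;0;5;0;5;5];[::0;1;2;0;1;2;2;1;0]];
[::[::0;0;2;3;2;2;0;3;3];[::0;1;0;0;1;5;5;1;5];[::0;1;1;3;3;0;3;0;1];[::0;1;2;1;0;1;2;2;0]];
[::[::0;0;2;3;2;2;0;3;3];[::0;1;0;0;1;5;5;5;1];[::0;1;1;3;3;0;3;1;0];[::0;1;2;1;0;1;2;0;2]];
[::[::0;0;2;3;2;2;0;3;3];[::0;1;0;0;4;1;4;1;4];[::0;1;1;3;0;3;3;0;1];[::0;1;2;1;1;0;2;2;0]];
[::[::0;0;2;3;2;2;0;3;3];[::0;1;0;0;4;1;4;4;1];[::0;1;1;3;0;3;3;1;0];[::0;1;2;1;1;0;2;0;2]];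
[::[::0;0;2;3;2;2;0;3;3];[::0;1;0;1;1;5;5;0;5];[::0;1;1;0;4;0;4;4;1];[::0;1;2;2;0;1;2;1;0]];
[::[::0;0;2;3;2;2;0;3;3];[::0;1;0;1;1;5;5;5;0];[::0;1;1;0;4;0;4;1;4];[::0;1;2;2;0;1;2;0;1]];
[::[::0;0;2;3;2;2;0;3;3];[::0;1;0;1;4;1;4;0;4];[::0;1;1;0;0;5;5;5;1];[::0;1;2;2;1;0;2;1;0]];
[::[::0;0;2;3;2;2;0;3;3];[::0;1;0;1;4;1;4;4;0];[::0;1;1;0;0;5;5;1;5];[::0;1;2;2;1;0;2;0;1]];
[::[::0;0;2;3;2;2;0;3;3];[::0;1;0;3;1;3;3;0;1];[::0;1;1;1;4;0;4;4;0];[::0;1;2;0;0;1;2;1;2]];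
[::[::0;0;2;3;2;2;0;3;3];[::0;1;0;3;1;3;3;1;0];[::0;1;1;1;4;0;4;0;4];[::0;1;2;0;0;1;2;2;1]];
[::[::0;0;2;3;2;2;0;3;3];[::0;1;0;3;3;1;3;0;1];[::0;1;1;1;0;5;5;5;0];[::0;1;2;0;1;0;2;1;2]];
[::[::0;0;2;3;2;2;0;3;3];[::0;1;0;3;3;1;3;1;0];[::0;1;1;1;0;5;5;0;5];[::0;1;2;0;1;0;2;2;1]];
[::[::0;0;2;3;2;2;3;0;3];[::0;1;0;0;1;5;1;5;5];[::0;1;1;3;3;0;0;3;1];[::0;1;2;1;0;1;2;2;0]];
[::[::0;0;2;3;2;2;3;0;3];[::0;1;0;0;1;5;5;5;1];[::0;1;1;3;3;0;1;3;0];[::0;1;2;1;0;1;0;2;2]];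
[::[::0;0;2;3;2;2;3;0;3];[::0;1;0;0;4;1;1;4;4];[::0;1;1;3;0;3;0;3;1];[::0;1;2;1;1;0;2;2;0]];
[::[::0;0;2;3;2;2;3;0;3];[::0;1;0;0;4;1;4;4;1];[::0;1;1;3;0;3;1;3;0];[::0;1;2;1;1;0;0;2;2]];
[::[::0;0;2;3;2;2;3;0;3];[::0;1;0;1;1;5;0;5;5];[::0;1;1;0;4;0;4;4;1];[::0;1;2;2;0;1;1;2;0]];
[::[::0;0;2;3;2;2;3;0;3];[::0;1;0;1;1;5;5;5;0];[::0;1;1;0;4;0;1;4;4];[::0;1;2;2;0;1;0;2;1]];
[::[::0;0;2;3;2;2;3;0;3];[::0;1;0;1;4;1;0;4;4];[::0;1;1;0;0;5;5;5;1];[::0;1;2;2;1;0;1;2;0]];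
[::[::0;0;2;3;2;2;3;0;3];[::0;1;0;1;4;1;4;4;0];[::0;1;1;0;0;5;1;5;5];[::0;1;2;2;1;0;0;2;1]];
[::[::0;0;2;3;2;2;3;0;3];[::0;1;0;3;1;3;0;3;1];[::0;1;1;1;4;0;4;4;0];[::0;1;2;0;0;1;1;2;2]];
[::[::0;0;2;3;2;2;3;0;3];[::0;1;0;3;1;3;1;3;0];[::0;1;1;1;4;0;0;4;4];[::0;1;2;0;0;1;2;2;1]];
[::[::0;0;2;3;2;2;3;0;3];[::0;1;0;3;3;1;0;3;1];[::0;1;1;1;0;5;5;5;0];[::0;1;2;0;1;0;1;2;2]];
[::[::0;0;2;3;2;2;3;0;3];[::0;1;0;3;3;1;1;3;0];[::0;1;1;1;0;5;0;5;5];[::0;1;2;0;1;0;2;2;1]];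
[::[::0;0;2;3;2;2;3;3;0];[::0;1;0;0;1;5;1;5;5];[::0;1;1;3;3;0;0;1;3];[::0;1;2;1;0;1;2;0;2]];
[::[::0;0;2;3;2;2;3;3;0];[::0;1;0;0;1;5;5;1;5];[::0;1;1;3;3;0;1;0;3];[::0;1;2;1;0;1;0;2;2]];
[::[::0;0;2;3;2;2;3;3;0];[::0;1;0;0;4;1;1;4;4];[::0;1;1;3;0;3;0;1;3];[::0;1;2;1;1;0;2;0;2]];
[::[::0;0;2;3;2;2;3;3;0];[::0;1;0;0;4;1;4;1;4];[::0;1;1;3;0;3;1;0;3];[::0;1;2;1;1;0;0;2;2]];
[::[::0;0;2;3;2;2;3;3;0];[::0;1;0;1;1;5;0;5;5];[::0;1;1;0;4;0;4;1;4];[::0;1;2;2;0;1;1;0;2]];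
[::[::0;0;2;3;2;2;3;3;0];[::0;1;0;1;1;5;5;0;5];[::0;1;1;0;4;0;1;4;4];[::0;1;2;2;0;1;0;1;2]];
[::[::0;0;2;3;2;2;3;3;0];[::0;1;0;1;4;1;0;4;4];[::0;1;1;0;0;5;5;1;5];[::0;1;2;2;1;0;1;0;2]];
[::[::0;0;2;3;2;2;3;3;0];[::0;1;0;1;4;1;4;0;4];[::0;1;1;0;0;5;1;5;5];[::0;1;2;2;1;0;0;1;2]];
[::[::0;0;2;3;2;2;3;3;0];[::0;1;0;3;1;3;0;1;3];[::0;1;1;1;4;0;4;0;4];[::0;1;2;0;0;1;1;2;2]];
[::[::0;0;2;3;2;2;3;3;0];[::0;1;0;3;1;3;1;0;3];[::0;1;1;1;4;0;0;4;4];[::0;1;2;0;0;1;2;1;2]];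
[::[::0;0;2;3;2;2;3;3;0];[::0;1;0;3;3;1;0;1;3];[::0;1;1;1;0;5;5;0;5];[::0;1;2;0;1;0;1;2;2]];
[::[::0;0;2;3;2;2;3;3;0];[::0;1;0;3;3;1;1;0;3];[::0;1;1;1;0;5;0;5;5];[::0;1;2;0;1;0;2;1;2]];
[::[::0;0;2;3;2;3;0;2;3];[::0;1;0;0;1;1;6;6;6];[::0;1;1;3;3;0;3;0;1];[::0;1;2;1;0;2;2;1;0]];
[::[::0;0;2;3;2;3;0;2;3];[::0;1;0;0;1;5;5;5;1];[::0;1;1;3;3;1;3;0;0];[::0;1;2;1;0;0;2;1;2]];
[::[::0;0;2;3;2;3;0;2;3];[::0;1;0;0;4;1;4;1;4];[::0;1;1;3;0;0;3;3;1];[::0;1;2;1;1;2;2;0;0]];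
[::[::0;0;2;3;2;3;0;2;3];[::0;1;0;0;4;4;4;1;1];[::0;1;1;3;0;1;3;3;0];[::0;1;2;1;1;0;2;0;2]];
[::[::0;0;2;3;2;3;0;2;3];[::0;1;0;1;1;0;6;6;6];[::0;1;1;0;4;4;4;0;1];[::0;1;2;2;0;1;2;1;0]];
[::[::0;0;2;3;2;3;0;2;3];[::0;1;0;1;1;5;5;5;0];[::0;1;1;0;4;1;4;0;4];[::0;1;2;2;0;0;2;1;1]];
[::[::0;0;2;3;2;3;0;2;3];[::0;1;0;1;4;0;4;1;4];[::0;1;1;0;0;5;5;5;1];[::0;1;2;2;1;1;2;0;0]];
[::[::0;0;2;3;2;3;0;2;3];[::0;1;0;1;4;4;4;1;0];[::0;1;1;0;0;1;6;6;6];[::0;1;2;2;1;0;2;0;1]];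
[::[::0;0;2;3;2;3;0;2;3];[::0;1;0;3;1;0;3;3;1];[::0;1;1;1;4;4;4;0;0];[::0;1;2;0;0;1;2;1;2]];
[::[::0;0;2;3;2;3;0;2;3];[::0;1;0;3;1;1;3;3;0];[::0;1;1;1;4;0;4;0;4];[::0;1;2;0;0;2;2;1;1]];
[::[::0;0;2;3;2;3;0;2;3];[::0;1;0;3;3;0;3;1;1];[::0;1;1;1;0;5;5;5;0];[::0;1;2;0;1;1;2;0;2]];
[::[::0;0;2;3;2;3;0;2;3];[::0;1;0;3;3;1;3;1;0];[::0;1;1;1;0;0;6;6;6];[::0;1;2;0;1;2;2;0;1]];
[::[::0;0;2;3;2;3;0;3;2];[::0;1;0;0;1;1;6;6;6];[::0;1;1;3;3;0;3;1;0];[::0;1;2;1;0;2;2;0;1]];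
[::[::0;0;2;3;2;3;0;3;2];[::0;1;0;0;1;5;5;1;5];[::0;1;1;3;3;1;3;0;0];[::0;1;2;1;0;0;2;2;1]];
[::[::0;0;2;3;2;3;0;3;2];[::0;1;0;0;4;1;4;4;1];[::0;1;1;3;0;0;3;1;3];[::0;1;2;1;1;2;2;0;0]];
[::[::0;0;2;3;2;3;0;3;2];[::0;1;0;0;4;4;4;1;1];[::0;1;1;3;0;1;3;0;3];[::0;1;2;1;1;0;2;2;0]];
[::[::0;0;2;3;2;3;0;3;2];[::0;1;0;1;1;0;6;6;6];[::0;1;1;0;4;4;4;1;0];[::0;1;2;2;0;1;2;0;1]];
[::[::0;0;2;3;2;3;0;3;2];[::0;1;0;1;1;5;5;0;5];[::0;1;1;0;4;1;4;4;0];[::0;1;2;2;0;0;2;1;1]];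
[::[::0;0;2;3;2;3;0;3;2];[::0;1;0;1;4;0;4;4;1];[::0;1;1;0;0;5;5;1;5];[::0;1;2;2;1;1;2;0;0]];
[::[::0;0;2;3;2;3;0;3;2];[::0;1;0;1;4;4;4;0;1];[::0;1;1;0;0;1;6;6;6];[::0;1;2;2;1;0;2;1;0]];
[::[::0;0;2;3;2;3;0;3;2];[::0;1;0;3;1;0;3;1;3];[::0;1;1;1;4;4;4;0;0];[::0;1;2;0;0;1;2;2;1]];
[::[::0;0;2;3;2;3;0;3;2];[::0;1;0;3;1;1;3;0;3];[::0;1;1;1;4;0;4;4;0];[::0;1;2;0;0;2;2;1;1]];
[::[::0;0;2;3;2;3;0;3;2];[::0;1;0;3;3;0;3;1;1];[::0;1;1;1;0;5;5;0;5];[::0;1;2;0;1;1;2;2;0]];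
[::[::0;0;2;3;2;3;0;3;2];[::0;1;0;3;3;1;3;0;1];[::0;1;1;1;0;0;6;6;6];[::0;1;2;0;1;2;2;1;0]];
[::[::0;0;2;3;2;3;2;0;3];[::0;1;0;0;1;1;6;6;6];[::0;1;1;3;3;0;0;3;1];[::0;1;2;1;0;2;1;2;0]];
[::[::0;0;2;3;2;3;2;0;3];[::0;1;0;0;1;5;5;5;1];[::0;1;1;3;3;1;0;3;0];[::0;1;2;1;0;0;1;2;2]];
[::[::0;0;2;3;2;3;2;0;3];[::0;1;0;0;4;1;1;4;4];[::0;1;1;3;0;0;3;3;1];[::0;1;2;1;1;2;0;2;0]];
[::[::0;0;2;3;2;3;2;0;3];[::0;1;0;0;4;4;1;4;1];[::0;1;1;3;0;1;3;3;0];[::0;1;2;1;1;0;0;2;2]];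
[::[::0;0;2;3;2;3;2;0;3];[::0;1;0;1;1;0;6;6;6];[::0;1;1;0;4;4;0;4;1];[::0;1;2;2;0;1;1;2;0]];
[::[::0;0;2;3;2;3;2;0;3];[::0;1;0;1;1;5;5;5;0];[::0;1;1;0;4;1;0;4;4];[::0;1;2;2;0;0;1;2;1]];
[::[::0;0;2;3;2;3;2;0;3];[::0;1;0;1;4;0;1;4;4];[::0;1;1;0;0;5;5;5;1];[::0;1;2;2;1;1;0;2;0]];
[::[::0;0;2;3;2;3;2;0;3];[::0;1;0;1;4;4;1;4;0];[::0;1;1;0;0;1;6;6;6];[::0;1;2;2;1;0;0;2;1]];
[::[::0;0;2;3;2;3;2;0;3];[::0;1;0;3;1;0;3;3;1];[::0;1;1;1;4;4;0;4;0];[::0;1;2;0;0;1;1;2;2]];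
[::[::0;0;2;3;2;3;2;0;3];[::0;1;0;3;1;1;3;3;0];[::0;1;1;1;4;0;0;4;4];[::0;1;2;0;0;2;1;2;1]];
[::[::0;0;2;3;2;3;2;0;3];[::0;1;0;3;3;0;1;3;1];[::0;1;1;1;0;5;5;5;0];[::0;1;2;0;1;1;0;2;2]];
[::[::0;0;2;3;2;3;2;0;3];[::0;1;0;3;3;1;1;3;0];[::0;1;1;1;0;0;6;6;6];[::0;1;2;0;1;2;0;2;1]];
[::[::0;0;2;3;2;3;2;3;0];[::0;1;0;0;1;1;6;6;6];[::0;1;1;3;3;0;0;1;3];[::0;1;2;1;0;2;1;0;2]];
[::[::0;0;2;3;2;3;2;3;0];[::0;1;0;0;1;5;5;1;5];[::0;1;1;3;3;1;0;0;3];[::0;1;2;1;0;0;1;2;2]];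
[::[::0;0;2;3;2;3;2;3;0];[::0;1;0;0;4;1;1;4;4];[::0;1;1;3;0;0;3;1;3];[::0;1;2;1;1;2;0;0;2]];
[::[::0;0;2;3;2;3;2;3;0];[::0;1;0;0;4;4;1;1;4];[::0;1;1;3;0;1;3;0;3];[::0;1;2;1;1;0;0;2;2]];
[::[::0;0;2;3;2;3;2;3;0];[::0;1;0;1;1;0;6;6;6];[::0;1;1;0;4;4;0;1;4];[::0;1;2;2;0;1;1;0;2]];
[::[::0;0;2;3;2;3;2;3;0];[::0;1;0;1;1;5;5;0;5];[::0;1;1;0;4;1;0;4;4];[::0;1;2;2;0;0;1;1;2]];
[::[::0;0;2;3;2;3;2;3;0];[::0;1;0;1;4;0;1;4;4];[::0;1;1;0;0;5;5;1;5];[::0;1;2;2;1;1;0;0;2]];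
[::[::0;0;2;3;2;3;2;3;0];[::0;1;0;1;4;4;1;0;4];[::0;1;1;0;0;1;6;6;6];[::0;1;2;2;1;0;0;1;2]];
[::[::0;0;2;3;2;3;2;3;0];[::0;1;0;3;1;0;3;1;3];[::0;1;1;1;4;4;0;0;4];[::0;1;2;0;0;1;1;2;2]];
[::[::0;0;2;3;2;3;2;3;0];[::0;1;0;3;1;1;3;0;3];[::0;1;1;1;4;0;0;4;4];[::0;1;2;0;0;2;1;1;2]];
[::[::0;0;2;3;2;3;2;3;0];[::0;1;0;3;3;0;1;1;3];[::0;1;1;1;0;5;5;0;5];[::0;1;2;0;1;1;0;2;2]];
[::[::0;0;2;3;2;3;2;3;0];[::0;1;0;3;3;1;1;0;3];[::0;1;1;1;0;0;6;6;6];[::0;1;2;0;1;2;0;1;2]];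
[::[::0;0;2;3;2;3;3;0;2];[::0;1;0;0;1;1;6;6;6];[::0;1;1;3;3;0;1;3;0];[::0;1;2;1;0;2;0;2;1]];
[::[::0;0;2;3;2;3;3;0;2];[::0;1;0;0;1;5;1;5;5];[::0;1;1;3;3;1;0;3;0];[::0;1;2;1;0;0;2;2;1]];
[::[::0;0;2;3;2;3;3;0;2];[::0;1;0;0;4;1;4;4;1];[::0;1;1;3;0;0;1;3;3];[::0;1;2;1;1;2;0;2;0]];
[::[::0;0;2;3;2;3;3;0;2];[::0;1;0;0;4;4;1;4;1];[::0;1;1;3;0;1;0;3;3];[::0;1;2;1;1;0;2;2;0]];
[::[::0;0;2;3;2;3;3;0;2];[::0;1;0;1;1;0;6;6;6];[::0;1;1;0;4;4;1;4;0];[::0;1;2;2;0;1;0;2;1]];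
[::[::0;0;2;3;2;3;3;0;2];[::0;1;0;1;1;5;0;5;5];[::0;1;1;0;4;1;4;4;0];[::0;1;2;2;0;0;1;2;1]];
[::[::0;0;2;3;2;3;3;0;2];[::0;1;0;1;4;0;4;4;1];[::0;1;1;0;0;5;1;5;5];[::0;1;2;2;1;1;0;2;0]];
[::[::0;0;2;3;2;3;3;0;2];[::0;1;0;1;4;4;0;4;1];[::0;1;1;0;0;1;6;6;6];[::0;1;2;2;1;0;1;2;0]];
[::[::0;0;2;3;2;3;3;0;2];[::0;1;0;3;1;0;1;3;3];[::0;1;1;1;4;4;0;4;0];[::0;1;2;0;0;1;2;2;1]];
[::[::0;0;2;3;2;3;3;0;2];[::0;1;0;3;1;1;0;3;3];[::0;1;1;1;4;0;4;4;0];[::0;1;2;0;0;2;1;2;1]];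
[::[::0;0;2;3;2;3;3;0;2];[::0;1;0;3;3;0;1;3;1];[::0;1;1;1;0;5;0;5;5];[::0;1;2;0;1;1;2;2;0]];
[::[::0;0;2;3;2;3;3;0;2];[::0;1;0;3;3;1;0;3;1];[::0;1;1;1;0;0;6;6;6];[::0;1;2;0;1;2;1;2;0]];
[::[::0;0;2;3;2;3;3;2;0];[::0;1;0;0;1;1;6;6;6];[::0;1;1;3;3;0;1;0;3];[::0;1;2;1;0;2;0;1;2]];
[::[::0;0;2;3;2;3;3;2;0];[::0;1;0;0;1;5;1;5;5];[::0;1;1;3;3;1;0;0;3];[::0;1;2;1;0;0;2;1;2]];
[::[::0;0;2;3;2;3;3;2;0];[::0;1;0;0;4;1;4;1;4];[::0;1;1;3;0;0;1;3;3];[::0;1;2;1;1;2;0;0;2]];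
[::[::0;0;2;3;2;3;3;2;0];[::0;1;0;0;4;4;1;1;4];[::0;1;1;3;0;1;0;3;3];[::0;1;2;1;1;0;2;0;2]];
[::[::0;0;2;3;2;3;3;2;0];[::0;1;0;1;1;0;6;6;6];[::0;1;1;0;4;4;1;0;4];[::0;1;2;2;0;1;0;1;2]];
[::[::0;0;2;3;2;3;3;2;0];[::0;1;0;1;1;5;0;5;5];[::0;1;1;0;4;1;4;0;4];[::0;1;2;2;0;0;1;1;2]];
[::[::0;0;2;3;2;3;3;2;0];[::0;1;0;1;4;0;4;1;4];[::0;1;1;0;0;5;1;5;5];[::0;1;2;2;1;1;0;0;2]];
[::[::0;0;2;3;2;3;3;2;0];[::0;1;0;1;4;4;0;1;4];[::0;1;1;0;0;1;6;6;6];[::0;1;2;2;1;0;1;0;2]];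
[::[::0;0;2;3;2;3;3;2;0];[::0;1;0;3;1;0;1;3;3];[::0;1;1;1;4;4;0;0;4];[::0;1;2;0;0;1;2;1;2]];
[::[::0;0;2;3;2;3;3;2;0];[::0;1;0;3;1;1;0;3;3];[::0;1;1;1;4;0;4;0;4];[::0;1;2;0;0;2;1;1;2]];
[::[::0;0;2;3;2;3;3;2;0];[::0;1;0;3;3;0;1;1;3];[::0;1;1;1;0;5;0;5;5];[::0;1;2;0;1;1;2;0;2]];
[::[::0;0;2;3;2;3;3;2;0];[::0;1;0;3;3;1;0;1;3];[::0;1;1;1;0;0;6;6;6];[::0;1;2;0;1;2;1;0;2]];
[::[::0;0;2;3;3;0;2;2;3];[::0;1;0;0;1;5;1;5;5];[::0;1;1;3;0;3;3;0;1];[::0;1;2;1;2;2;0;1;0]];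
[::[::0;0;2;3;3;0;2;2;3];[::0;1;0;0;1;5;5;1;5];[::0;1;1;3;0;3;0;3;1];[::0;1;2;1;2;2;1;0;0]];
[::[::0;0;2;3;3;0;2;2;3];[::0;1;0;0;4;4;1;4;1];[::0;1;1;3;1;3;3;0;0];[::0;1;2;1;0;2;0;1;2]];
[::[::0;0;2;3;3;0;2;2;3];[::0;1;0;0;4;4;4;1;1];[::0;1;1;3;1;3;0;3;0];[::0;1;2;1;0;2;1;0;2]];
[::[::0;0;2;3;3;0;2;2;3];[::0;1;0;1;0;5;1;5;5];[::0;1;1;0;4;4;4;0;1];[::0;1;2;2;1;2;0;1;0]];
[::[::0;0;2;3;3;0;2;2;3];[::0;1;0;1;0;5;5;1;5];[::0;1;1;0;4;4;0;4;1];[::0;1;2;2;1;2;1;0;0]];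
[::[::0;0;2;3;3;0;2;2;3];[::0;1;0;1;4;4;1;4;0];[::0;1;1;0;1;5;5;0;5];[::0;1;2;2;0;2;0;1;1]];
[::[::0;0;2;3;3;0;2;2;3];[::0;1;0;1;4;4;4;1;0];[::0;1;1;0;1;5;0;5;5];[::0;1;2;2;0;2;1;0;1]];
[::[::0;0;2;3;3;0;2;2;3];[::0;1;0;3;0;3;1;3;1];[::0;1;1;1;4;4;4;0;0];[::0;1;2;0;1;2;0;1;2]];
[::[::0;0;2;3;3;0;2;2;3];[::0;1;0;3;0;3;3;1;1];[::0;1;1;1;4;4;0;4;0];[::0;1;2;0;1;2;1;0;2]];
[::[::0;0;2;3;3;0;2;2;3];[::0;1;0;3;1;3;1;3;0];[::0;1;1;1;0;5;5;0;5];[::0;1;2;0;2;2;0;1;1]];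
[::[::0;0;2;3;3;0;2;2;3];[::0;1;0;3;1;3;3;1;0];[::0;1;1;1;0;5;0;5;5];[::0;1;2;0;2;2;1;0;1]];
[::[::0;0;2;3;3;0;2;3;2];[::0;1;0;0;1;5;1;5;5];[::0;1;1;3;0;3;3;1;0];[::0;1;2;1;2;2;0;0;1]];
[::[::0;0;2;3;3;0;2;3;2];[::0;1;0;0;1;5;5;5;1];[::0;1;1;3;0;3;0;1;3];[::0;1;2;1;2;2;1;0;0]];
[::[::0;0;2;3;3;0;2;3;2];[::0;1;0;0;4;4;1;1;4];[::0;1;1;3;1;3;3;0;0];[::0;1;2;1;0;2;0;2;1]];
[::[::0;0;2;3;3;0;2;3;2];[::0;1;0;0;4;4;4;1;1];[::0;1;1;3;1;3;0;0;3];[::0;1;2;1;0;2;1;2;0]];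
[::[::0;0;2;3;3;0;2;3;2];[::0;1;0;1;0;5;1;5;5];[::0;1;1;0;4;4;4;1;0];[::0;1;2;2;1;2;0;0;1]];
[::[::0;0;2;3;3;0;2;3;2];[::0;1;0;1;0;5;5;5;1];[::0;1;1;0;4;4;0;1;4];[::0;1;2;2;1;2;1;0;0]];
[::[::0;0;2;3;3;0;2;3;2];[::0;1;0;1;4;4;1;0;4];[::0;1;1;0;1;5;5;5;0];[::0;1;2;2;0;2;0;1;1]];
[::[::0;0;2;3;3;0;2;3;2];[::0;1;0;1;4;4;4;0;1];[::0;1;1;0;1;5;0;5;5];[::0;1;2;2;0;2;1;1;0]];
[::[::0;0;2;3;3;0;2;3;2];[::0;1;0;3;0;3;1;1;3];[::0;1;1;1;4;4;4;0;0];[::0;1;2;0;1;2;0;2;1]];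
[::[::0;0;2;3;3;0;2;3;2];[::0;1;0;3;0;3;3;1;1];[::0;1;1;1;4;4;0;0;4];[::0;1;2;0;1;2;1;2;0]];
[::[::0;0;2;3;3;0;2;3;2];[::0;1;0;3;1;3;1;0;3];[::0;1;1;1;0;5;5;5;0];[::0;1;2;0;2;2;0;1;1]];
[::[::0;0;2;3;3;0;2;3;2];[::0;1;0;3;1;3;3;0;1];[::0;1;1;1;0;5;0;5;5];[::0;1;2;0;2;2;1;1;0]];
[::[::0;0;2;3;3;0;3;2;2];[::0;1;0;0;1;5;5;1;5];[::0;1;1;3;0;3;1;3;0];[::0;1;2;1;2;2;0;0;1]];
[::[::0;0;2;3;3;0;3;2;2];[::0;1;0;0;1;5;5;5;1];[::0;1;1;3;0;3;1;0;3];[::0;1;2;1;2;2;0;1;0]];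
[::[::0;0;2;3;3;0;3;2;2];[::0;1;0;0;4;4;1;1;4];[::0;1;1;3;1;3;0;3;0];[::0;1;2;1;0;2;2;0;1]];
[::[::0;0;2;3;3;0;3;2;2];[::0;1;0;0;4;4;1;4;1];[::0;1;1;3;1;3;0;0;3];[::0;1;2;1;0;2;2;1;0]];
[::[::0;0;2;3;3;0;3;2;2];[::0;1;0;1;0;5;5;1;5];[::0;1;1;0;4;4;1;4;0];[::0;1;2;2;1;2;0;0;1]];
[::[::0;0;2;3;3;0;3;2;2];[::0;1;0;1;0;5;5;5;1];[::0;1;1;0;4;4;1;0;4];[::0;1;2;2;1;2;0;1;0]];
[::[::0;0;2;3;3;0;3;2;2];[::0;1;0;1;4;4;0;1;4];[::0;1;1;0;1;5;5;5;0];[::0;1;2;2;0;2;1;0;1]];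
[::[::0;0;2;3;3;0;3;2;2];[::0;1;0;1;4;4;0;4;1];[::0;1;1;0;1;5;5;0;5];[::0;1;2;2;0;2;1;1;0]];
[::[::0;0;2;3;3;0;3;2;2];[::0;1;0;3;0;3;1;1;3];[::0;1;1;1;4;4;0;4;0];[::0;1;2;0;1;2;2;0;1]];
[::[::0;0;2;3;3;0;3;2;2];[::0;1;0;3;0;3;1;3;1];[::0;1;1;1;4;4;0;0;4];[::0;1;2;0;1;2;2;1;0]];
[::[::0;0;2;3;3;0;3;2;2];[::0;1;0;3;1;3;0;1;3];[::0;1;1;1;0;5;5;5;0];[::0;1;2;0;2;2;1;0;1]];
[::[::0;0;2;3;3;0;3;2;2];[::0;1;0;3;1;3;0;3;1];[::0;1;1;1;0;5;5;0;5];[::0;1;2;0;2;2;1;1;0]];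
[::[::0;0;2;3;3;2;0;2;3];[::0;1;0;0;1;1;6;6;6];[::0;1;1;3;0;3;3;0;1];[::0;1;2;1;2;0;2;1;0]];
[::[::0;0;2;3;3;2;0;2;3];[::0;1;0;0;1;5;5;1;5];[::0;1;1;3;0;0;3;3;1];[::0;1;2;1;2;1;2;0;0]];
[::[::0;0;2;3;3;2;0;2;3];[::0;1;0;0;4;1;4;4;1];[::0;1;1;3;1;3;3;0;0];[::0;1;2;1;0;0;2;1;2]];
[::[::0;0;2;3;3;2;0;2;3];[::0;1;0;0;4;4;4;1;1];[::0;1;1;3;1;0;3;3;0];[::0;1;2;1;0;1;2;0;2]];
[::[::0;0;2;3;3;2;0;2;3];[::0;1;0;1;0;1;6;6;6];[::0;1;1;0;4;4;4;0;1];[::0;1;2;2;1;0;2;1;0]];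
[::[::0;0;2;3;3;2;0;2;3];[::0;1;0;1;0;5;5;1;5];[::0;1;1;0;4;0;4;4;1];[::0;1;2;2;1;1;2;0;0]];
[::[::0;0;2;3;3;2;0;2;3];[::0;1;0;1;4;1;4;4;0];[::0;1;1;0;1;5;5;0;5];[::0;1;2;2;0;0;2;1;1]];
[::[::0;0;2;3;3;2;0;2;3];[::0;1;0;1;4;4;4;1;0];[::0;1;1;0;1;0;6;6;6];[::0;1;2;2;0;1;2;0;1]];
[::[::0;0;2;3;3;2;0;2;3];[::0;1;0;3;0;1;3;3;1];[::0;1;1;1;4;4;4;0;0];[::0;1;2;0;1;0;2;1;2]];
[::[::0;0;2;3;3;2;0;2;3];[::0;1;0;3;0;3;3;1;1];[::0;1;1;1;4;0;4;4;0];[::0;1;2;0;1;1;2;0;2]];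
[::[::0;0;2;3;3;2;0;2;3];[::0;1;0;3;1;1;3;3;0];[::0;1;1;1;0;5;5;0;5];[::0;1;2;0;2;0;2;1;1]];
[::[::0;0;2;3;3;2;0;2;3];[::0;1;0;3;1;3;3;1;0];[::0;1;1;1;0;0;6;6;6];[::0;1;2;0;2;1;2;0;1]];
[::[::0;0;2;3;3;2;0;3;2];[::0;1;0;0;1;1;6;6;6];[::0;1;1;3;0;3;3;1;0];[::0;1;2;1;2;0;2;0;1]];
[::[::0;0;2;3;3;2;0;3;2];[::0;1;0;0;1;5;5;5;1];[::0;1;1;3;0;0;3;1;3];[::0;1;2;1;2;1;2;0;0]];
[::[::0;0;2;3;3;2;0;3;2];[::0;1;0;0;4;1;4;1;4];[::0;1;1;3;1;3;3;0;0];[::0;1;2;1;0;0;2;2;1]];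
[::[::0;0;2;3;3;2;0;3;2];[::0;1;0;0;4;4;4;1;1];[::0;1;1;3;1;0;3;0;3];[::0;1;2;1;0;1;2;2;0]];
[::[::0;0;2;3;3;2;0;3;2];[::0;1;0;1;0;1;6;6;6];[::0;1;1;0;4;4;4;1;0];[::0;1;2;2;1;0;2;0;1]];
[::[::0;0;2;3;3;2;0;3;2];[::0;1;0;1;0;5;5;5;1];[::0;1;1;0;4;0;4;1;4];[::0;1;2;2;1;1;2;0;0]];
[::[::0;0;2;3;3;2;0;3;2];[::0;1;0;1;4;1;4;0;4];[::0;1;1;0;1;5;5;5;0];[::0;1;2;2;0;0;2;1;1]];
[::[::0;0;2;3;3;2;0;3;2];[::0;1;0;1;4;4;4;0;1];[::0;1;1;0;1;0;6;6;6];[::0;1;2;2;0;1;2;1;0]];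
[::[::0;0;2;3;3;2;0;3;2];[::0;1;0;3;0;1;3;1;3];[::0;1;1;1;4;4;4;0;0];[::0;1;2;0;1;0;2;2;1]];
[::[::0;0;2;3;3;2;0;3;2];[::0;1;0;3;0;3;3;1;1];[::0;1;1;1;4;0;4;0;4];[::0;1;2;0;1;1;2;2;0]];
[::[::0;0;2;3;3;2;0;3;2];[::0;1;0;3;1;1;3;0;3];[::0;1;1;1;0;5;5;5;0];[::0;1;2;0;2;0;2;1;1]];
[::[::0;0;2;3;3;2;0;3;2];[::0;1;0;3;1;3;3;0;1];[::0;1;1;1;0;0;6;6;6];[::0;1;2;0;2;1;2;1;0]];
[::[::0;0;2;3;3;2;2;0;3];[::0;1;0;0;1;1;6;6;6];[::0;1;1;3;0;3;0;3;1];[::0;1;2;1;2;0;1;2;0]];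
[::[::0;0;2;3;3;2;2;0;3];[::0;1;0;0;1;5;1;5;5];[::0;1;1;3;0;0;3;3;1];[::0;1;2;1;2;1;0;2;0]];
[::[::0;0;2;3;3;2;2;0;3];[::0;1;0;0;4;1;4;4;1];[::0;1;1;3;1;3;0;3;0];[::0;1;2;1;0;0;1;2;2]];
[::[::0;0;2;3;3;2;2;0;3];[::0;1;0;0;4;4;1;4;1];[::0;1;1;3;1;0;3;3;0];[::0;1;2;1;0;1;0;2;2]];
[::[::0;0;2;3;3;2;2;0;3];[::0;1;0;1;0;1;6;6;6];[::0;1;1;0;4;4;0;4;1];[::0;1;2;2;1;0;1;2;0]];
[::[::0;0;2;3;3;2;2;0;3];[::0;1;0;1;0;5;1;5;5];[::0;1;1;0;4;0;4;4;1];[::0;1;2;2;1;1;0;2;0]];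
[::[::0;0;2;3;3;2;2;0;3];[::0;1;0;1;4;1;4;4;0];[::0;1;1;0;1;5;0;5;5];[::0;1;2;2;0;0;1;2;1]];
[::[::0;0;2;3;3;2;2;0;3];[::0;1;0;1;4;4;1;4;0];[::0;1;1;0;1;0;6;6;6];[::0;1;2;2;0;1;0;2;1]];
[::[::0;0;2;3;3;2;2;0;3];[::0;1;0;3;0;1;3;3;1];[::0;1;1;1;4;4;0;4;0];[::0;1;2;0;1;0;1;2;2]];
[::[::0;0;2;3;3;2;2;0;3];[::0;1;0;3;0;3;1;3;1];[::0;1;1;1;4;0;4;4;0];[::0;1;2;0;1;1;0;2;2]];
[::[::0;0;2;3;3;2;2;0;3];[::0;1;0;3;1;1;3;3;0];[::0;1;1;1;0;5;0;5;5];[::0;1;2;0;2;0;1;2;1]];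
[::[::0;0;2;3;3;2;2;0;3];[::0;1;0;3;1;3;1;3;0];[::0;1;1;1;0;0;6;6;6];[::0;1;2;0;2;1;0;2;1]];
[::[::0;0;2;3;3;2;2;3;0];[::0;1;0;0;1;1;6;6;6];[::0;1;1;3;0;3;0;1;3];[::0;1;2;1;2;0;1;0;2]];
[::[::0;0;2;3;3;2;2;3;0];[::0;1;0;0;1;5;1;5;5];[::0;1;1;3;0;0;3;1;3];[::0;1;2;1;2;1;0;0;2]];
[::[::0;0;2;3;3;2;2;3;0];[::0;1;0;0;4;1;4;1;4];[::0;1;1;3;1;3;0;0;3];[::0;1;2;1;0;0;1;2;2]];
[::[::0;0;2;3;3;2;2;3;0];[::0;1;0;0;4;4;1;1;4];[::0;1;1;3;1;0;3;0;3];[::0;1;2;1;0;1;0;2;2]];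
[::[::0;0;2;3;3;2;2;3;0];[::0;1;0;1;0;1;6;6;6];[::0;1;1;0;4;4;0;1;4];[::0;1;2;2;1;0;1;0;2]];
[::[::0;0;2;3;3;2;2;3;0];[::0;1;0;1;0;5;1;5;5];[::0;1;1;0;4;0;4;1;4];[::0;1;2;2;1;1;0;0;2]];
[::[::0;0;2;3;3;2;2;3;0];[::0;1;0;1;4;1;4;0;4];[::0;1;1;0;1;5;0;5;5];[::0;1;2;2;0;0;1;1;2]];
[::[::0;0;2;3;3;2;2;3;0];[::0;1;0;1;4;4;1;0;4];[::0;1;1;0;1;0;6;6;6];[::0;1;2;2;0;1;0;1;2]];
[::[::0;0;2;3;3;2;2;3;0];[::0;1;0;3;0;1;3;1;3];[::0;1;1;1;4;4;0;0;4];[::0;1;2;0;1;0;1;2;2]];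
[::[::0;0;2;3;3;2;2;3;0];[::0;1;0;3;0;3;1;1;3];[::0;1;1;1;4;0;4;0;4];[::0;1;2;0;1;1;0;2;2]];
[::[::0;0;2;3;3;2;2;3;0];[::0;1;0;3;1;1;3;0;3];[::0;1;1;1;0;5;0;5;5];[::0;1;2;0;2;0;1;1;2]];
[::[::0;0;2;3;3;2;2;3;0];[::0;1;0;3;1;3;1;0;3];[::0;1;1;1;0;0;6;6;6];[::0;1;2;0;2;1;0;1;2]];
[::[::0;0;2;3;3;2;3;0;2];[::0;1;0;0;1;1;6;6;6];[::0;1;1;3;0;3;1;3;0];[::0;1;2;1;2;0;0;2;1]];
[::[::0;0;2;3;3;2;3;0;2];[::0;1;0;0;1;5;5;5;1];[::0;1;1;3;0;0;1;3;3];[::0;1;2;1;2;1;0;2;0]];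
[::[::0;0;2;3;3;2;3;0;2];[::0;1;0;0;4;1;1;4;4];[::0;1;1;3;1;3;0;3;0];[::0;1;2;1;0;0;2;2;1]];
[::[::0;0;2;3;3;2;3;0;2];[::0;1;0;0;4;4;1;4;1];[::0;1;1;3;1;0;0;3;3];[::0;1;2;1;0;1;2;2;0]];
[::[::0;0;2;3;3;2;3;0;2];[::0;1;0;1;0;1;6;6;6];[::0;1;1;0;4;4;1;4;0];[::0;1;2;2;1;0;0;2;1]];
[::[::0;0;2;3;3;2;3;0;2];[::0;1;0;1;0;5;5;5;1];[::0;1;1;0;4;0;1;4;4];[::0;1;2;2;1;1;0;2;0]];
[::[::0;0;2;3;3;2;3;0;2];[::0;1;0;1;4;1;0;4;4];[::0;1;1;0;1;5;5;5;0];[::0;1;2;2;0;0;1;2;1]];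
[::[::0;0;2;3;3;2;3;0;2];[::0;1;0;1;4;4;0;4;1];[::0;1;1;0;1;0;6;6;6];[::0;1;2;2;0;1;1;2;0]];
[::[::0;0;2;3;3;2;3;0;2];[::0;1;0;3;0;1;1;3;3];[::0;1;1;1;4;4;0;4;0];[::0;1;2;0;1;0;2;2;1]];
[::[::0;0;2;3;3;2;3;0;2];[::0;1;0;3;0;3;1;3;1];[::0;1;1;1;4;0;0;4;4];[::0;1;2;0;1;1;2;2;0]];
[::[::0;0;2;3;3;2;3;0;2];[::0;1;0;3;1;1;0;3;3];[::0;1;1;1;0;5;5;5;0];[::0;1;2;0;2;0;1;2;1]];
[::[::0;0;2;3;3;2;3;0;2];[::0;1;0;3;1;3;0;3;1];[::0;1;1;1;0;0;6;6;6];[::0;1;2;0;2;1;1;2;0]];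
[::[::0;0;2;3;3;2;3;2;0];[::0;1;0;0;1;1;6;6;6];[::0;1;1;3;0;3;1;0;3];[::0;1;2;1;2;0;0;1;2]];
[::[::0;0;2;3;3;2;3;2;0];[::0;1;0;0;1;5;5;1;5];[::0;1;1;3;0;0;1;3;3];[::0;1;2;1;2;1;0;0;2]];
[::[::0;0;2;3;3;2;3;2;0];[::0;1;0;0;4;1;1;4;4];[::0;1;1;3;1;3;0;0;3];[::0;1;2;1;0;0;2;1;2]];
[::[::0;0;2;3;3;2;3;2;0];[::0;1;0;0;4;4;1;1;4];[::0;1;1;3;1;0;0;3;3];[::0;1;2;1;0;1;2;0;2]];
[::[::0;0;2;3;3;2;3;2;0];[::0;1;0;1;0;1;6;6;6];[::0;1;1;0;4;4;1;0;4];[::0;1;2;2;1;0;0;1;2]];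
[::[::0;0;2;3;3;2;3;2;0];[::0;1;0;1;0;5;5;1;5];[::0;1;1;0;4;0;1;4;4];[::0;1;2;2;1;1;0;0;2]];
[::[::0;0;2;3;3;2;3;2;0];[::0;1;0;1;4;1;0;4;4];[::0;1;1;0;1;5;5;0;5];[::0;1;2;2;0;0;1;1;2]];
[::[::0;0;2;3;3;2;3;2;0];[::0;1;0;1;4;4;0;1;4];[::0;1;1;0;1;0;6;6;6];[::0;1;2;2;0;1;1;0;2]];
[::[::0;0;2;3;3;2;3;2;0];[::0;1;0;3;0;1;1;3;3];[::0;1;1;1;4;4;0;0;4];[::0;1;2;0;1;0;2;1;2]];
[::[::0;0;2;3;3;2;3;2;0];[::0;1;0;3;0;3;1;1;3];[::0;1;1;1;4;0;0;4;4];[::0;1;2;0;1;1;2;0;2]];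
[::[::0;0;2;3;3;2;3;2;0];[::0;1;0;3;1;1;0;3;3];[::0;1;1;1;0;5;5;0;5];[::0;1;2;0;2;0;1;1;2]];
[::[::0;0;2;3;3;2;3;2;0];[::0;1;0;3;1;3;0;1;3];[::0;1;1;1;0;0;6;6;6];[::0;1;2;0;2;1;1;0;2]];
[::[::0;0;2;3;3;3;0;2;2];[::0;1;0;0;1;5;5;1;5];[::0;1;1;3;0;1;3;3;0];[::0;1;2;1;2;0;2;0;1]];
[::[::0;0;2;3;3;3;0;2;2];[::0;1;0;0;1;5;5;5;1];[::0;1;1;3;0;1;3;0;3];[::0;1;2;1;2;0;2;1;0]];
[::[::0;0;2;3;3;3;0;2;2];[::0;1;0;0;4;1;4;1;4];[::0;1;1;3;1;0;3;3;0];[::0;1;2;1;0;2;2;0;1]];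
[::[::0;0;2;3;3;3;0;2;2];[::0;1;0;0;4;1;4;4;1];[::0;1;1;3;1;0;3;0;3];[::0;1;2;1;0;2;2;1;0]];
[::[::0;0;2;3;3;3;0;2;2];[::0;1;0;1;0;5;5;1;5];[::0;1;1;0;4;1;4;4;0];[::0;1;2;2;1;0;2;0;1]];
[::[::0;0;2;3;3;3;0;2;2];[::0;1;0;1;0;5;5;5;1];[::0;1;1;0;4;1;4;0;4];[::0;1;2;2;1;0;2;1;0]];
[::[::0;0;2;3;3;3;0;2;2];[::0;1;0;1;4;0;4;1;4];[::0;1;1;0;1;5;5;5;0];[::0;1;2;2;0;1;2;0;1]];
[::[::0;0;2;3;3;3;0;2;2];[::0;1;0;1;4;0;4;4;1];[::0;1;1;0;1;5;5;0;5];[::0;1;2;2;0;1;2;1;0]];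
[::[::0;0;2;3;3;3;0;2;2];[::0;1;0;3;0;1;3;1;3];[::0;1;1;1;4;0;4;4;0];[::0;1;2;0;1;2;2;0;1]];
[::[::0;0;2;3;3;3;0;2;2];[::0;1;0;3;0;1;3;3;1];[::0;1;1;1;4;0;4;0;4];[::0;1;2;0;1;2;2;1;0]];
[::[::0;0;2;3;3;3;0;2;2];[::0;1;0;3;1;0;3;1;3];[::0;1;1;1;0;5;5;5;0];[::0;1;2;0;2;1;2;0;1]];
[::[::0;0;2;3;3;3;0;2;2];[::0;1;0;3;1;0;3;3;1];[::0;1;1;1;0;5;5;0;5];[::0;1;2;0;2;1;2;1;0]];
[::[::0;0;2;3;3;3;2;0;2];[::0;1;0;0;1;5;1;5;5];[::0;1;1;3;0;1;3;3;0];[::0;1;2;1;2;0;0;2;1]];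
[::[::0;0;2;3;3;3;2;0;2];[::0;1;0;0;1;5;5;5;1];[::0;1;1;3;0;1;0;3;3];[::0;1;2;1;2;0;1;2;0]];
[::[::0;0;2;3;3;3;2;0;2];[::0;1;0;0;4;1;1;4;4];[::0;1;1;3;1;0;3;3;0];[::0;1;2;1;0;2;0;2;1]];
[::[::0;0;2;3;3;3;2;0;2];[::0;1;0;0;4;1;4;4;1];[::0;1;1;3;1;0;0;3;3];[::0;1;2;1;0;2;1;2;0]];
[::[::0;0;2;3;3;3;2;0;2];[::0;1;0;1;0;5;1;5;5];[::0;1;1;0;4;1;4;4;0];[::0;1;2;2;1;0;0;2;1]];
[::[::0;0;2;3;3;3;2;0;2];[::0;1;0;1;0;5;5;5;1];[::0;1;1;0;4;1;0;4;4];[::0;1;2;2;1;0;1;2;0]];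
[::[::0;0;2;3;3;3;2;0;2];[::0;1;0;1;4;0;1;4;4];[::0;1;1;0;1;5;5;5;0];[::0;1;2;2;0;1;0;2;1]];
[::[::0;0;2;3;3;3;2;0;2];[::0;1;0;1;4;0;4;4;1];[::0;1;1;0;1;5;0;5;5];[::0;1;2;2;0;1;1;2;0]];
[::[::0;0;2;3;3;3;2;0;2];[::0;1;0;3;0;1;1;3;3];[::0;1;1;1;4;0;4;4;0];[::0;1;2;0;1;2;0;2;1]];
[::[::0;0;2;3;3;3;2;0;2];[::0;1;0;3;0;1;3;3;1];[::0;1;1;1;4;0;0;4;4];[::0;1;2;0;1;2;1;2;0]];
[::[::0;0;2;3;3;3;2;0;2];[::0;1;0;3;1;0;1;3;3];[::0;1;1;1;0;5;5;5;0];[::0;1;2;0;2;1;0;2;1]];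
[::[::0;0;2;3;3;3;2;0;2];[::0;1;0;3;1;0;3;3;1];[::0;1;1;1;0;5;0;5;5];[::0;1;2;0;2;1;1;2;0]];
[::[::0;0;2;3;3;3;2;2;0];[::0;1;0;0;1;5;1;5;5];[::0;1;1;3;0;1;3;0;3];[::0;1;2;1;2;0;0;1;2]];
[::[::0;0;2;3;3;3;2;2;0];[::0;1;0;0;1;5;5;1;5];[::0;1;1;3;0;1;0;3;3];[::0;1;2;1;2;0;1;0;2]];
[::[::0;0;2;3;3;3;2;2;0];[::0;1;0;0;4;1;1;4;4];[::0;1;1;3;1;0;3;0;3];[::0;1;2;1;0;2;0;1;2]];
[::[::0;0;2;3;3;3;2;2;0];[::0;1;0;0;4;1;4;1;4];[::0;1;1;3;1;0;0;3;3];[::0;1;2;1;0;2;1;0;2]];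
[::[::0;0;2;3;3;3;2;2;0];[::0;1;0;1;0;5;1;5;5];[::0;1;1;0;4;1;4;0;4];[::0;1;2;2;1;0;0;1;2]];
[::[::0;0;2;3;3;3;2;2;0];[::0;1;0;1;0;5;5;1;5];[::0;1;1;0;4;1;0;4;4];[::0;1;2;2;1;0;1;0;2]];
[::[::0;0;2;3;3;3;2;2;0];[::0;1;0;1;4;0;1;4;4];[::0;1;1;0;1;5;5;0;5];[::0;1;2;2;0;1;0;1;2]];
[::[::0;0;2;3;3;3;2;2;0];[::0;1;0;1;4;0;4;1;4];[::0;1;1;0;1;5;0;5;5];[::0;1;2;2;0;1;1;0;2]];
[::[::0;0;2;3;3;3;2;2;0];[::0;1;0;3;0;1;1;3;3];[::0;1;1;1;4;0;4;0;4];[::0;1;2;0;1;2;0;1;2]];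
[::[::0;0;2;3;3;3;2;2;0];[::0;1;0;3;0;1;3;1;3];[::0;1;1;1;4;0;0;4;4];[::0;1;2;0;1;2;1;0;2]];
[::[::0;0;2;3;3;3;2;2;0];[::0;1;0;3;1;0;1;3;3];[::0;1;1;1;0;5;5;0;5];[::0;1;2;0;2;1;0;1;2]];
[::[::0;0;2;3;3;3;2;2;0];[::0;1;0;3;1;0;3;1;3];[::0;1;1;1;0;5;0;5;5];[::0;1;2;0;2;1;1;0;2]]].

Fixpoint kcb (a b : seq bool) : nat :=
  match a, b with x :: a', y :: b' => if x && y then (kcb a' b').+1 else kcb a' b' | _, _ => 0 end.
Definition bits (l : seq nat) : seq bool := [seq samec l ij | ij <- pl].
Definition QpB (pb : seq nat * seq bool) (K : seq (seq nat * seq bool)) : nat :=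
  Qtab (sumn [seq sqt (kcb pb.2 mb.2) | mb <- K]).
Definition QmB (pb : seq nat * seq bool) (K : seq (seq nat * seq bool)) : nat :=
  if pb.1 \in [seq mb.1 | mb <- K] then 122 else 0.
Definition check34g (L : seq (seq nat)) (Cl0 : seq (seq (seq nat))) : bool :=
  let LB := [seq (l, bits l) | l <- L] in
  let ClB := [seq [seq (m, bits m) | m <- K] | K <- Cl0] in
  all (fun pb => sumn [seq QpB pb K | K <- ClB] == 3360 + sumn [seq QmB pb K | K <- ClB]) LB &&
  all (fun tb => let CTt := [seq K <- ClB | tb.1 \in [seq mb.1 | mb <- K]] in
     all (fun pb => kcb pb.2 tb.2 * 24 + sumn [seq QmB pb K | K <- CTt]
                    == (pb.1 == tb.1) * 1680 + sumn [seq QpB pb K | K <- CTt]) LB) LB.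

Lemma Lst_okb : (filter valid (genP 9) == LstLit) = true.
Proof. vm_cast_no_check (erefl true). Qed.
Lemma C1b : all cl_ok Cl = true.
Proof. vm_cast_no_check (erefl true). Qed.
Lemma C2b : [&& all (fun l => l \in LstLit) (flatten Cl),
  all (fun l => count_mem l (flatten Cl) == 12) LstLit, uniq LstLit, size Cl == 840
  & all (fun l => Kc l l == 9) LstLit] = true.
Proof. vm_cast_no_check (erefl true). Qed.
Lemma C34g : check34g LstLit Cl = true.
Proof. vm_cast_no_check (erefl true). Qed.

Lemma kcb_count (T : Type) (f g : pred T) s :
  count (fun ij => f ij && g ij) s = kcb (map f s) (map g s).
Proof. by elim: s => //= a s ->; case: (f a); case: (g a). Qed.

Lemma Kc_bits l l' : Kc l l' = kcb (bits l) (bits l').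
Proof. exact: kcb_count. Qed.

Lemma QpB_eq p K : QpB (p, bits p) [seq (m, bits m) | m <- K] = Qp p K.
Proof.
rewrite /QpB /Qp -map_comp; congr (Qtab (sumn _)); apply: eq_map => m.
by rewrite [in RHS](Kc_bits p m).
Qed.

Lemma QmB_eq p K : QmB (p, bits p) [seq (m, bits m) | m <- K] = Qm p K.
Proof. by rewrite /QmB /Qm -map_comp map_id. Qed.

Lemma filt_eq (Cl0 : seq (seq (seq nat))) t : [seq K' <- [seq [seq (m, bits m) | m <- K] | K <- Cl0] | t \in [seq mb.1 | mb <- K']]
   = [seq [seq (m, bits m) | m <- K] | K <- [seq K <- Cl0 | t \in K]].
Proof. by rewrite filter_map; congr map; apply: eq_filter => K /=; rewrite -map_comp map_id. Qed.

Lemma HC3g L Cl0 : check34g L Cl0 -> forall p t, p \in L -> t \in L ->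
  24 * Kc p t + sumn [seq Qm p K | K <- Cl0 & t \in K]
  = (p == t) * 1680 + sumn [seq Qp p K | K <- Cl0 & t \in K].
Proof.
move=> C p t pL tL.
have tB : (t, bits t) \in [seq (l, bits l) | l <- L] by apply: (map_f (fun l => (l, bits l))).
have pB : (p, bits p) \in [seq (l, bits l) | l <- L] by apply: (map_f (fun l => (l, bits l))).
move: C; rewrite /check34g => /andP[_ /allP /(_ _ tB) /allP /(_ _ pB) /eqP].
rewrite -[(t, bits t).1]/t -[(p, bits p).1]/p -[(p, bits p).2]/(bits p) -[(t, bits t).2]/(bits t).
rewrite filt_eq !sumnE !big_map -Kc_bits mulnC => E.
rewrite (eq_bigr _ (fun K _ => esym (QmB_eq p K))) (eq_bigr _ (fun K _ => esym (QpB_eq p K))).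
exact: E.
Qed.

Lemma HC4g L Cl0 : check34g L Cl0 -> forall p, p \in L ->
  sumn [seq Qp p K | K <- Cl0] = 3360 + sumn [seq Qm p K | K <- Cl0].
Proof.
move=> C p pL.
have pB : (p, bits p) \in [seq (l, bits l) | l <- L] by apply: (map_f (fun l => (l, bits l))).
move: C; rewrite /check34g => /andP[/allP /(_ _ pB) /eqP + _].
rewrite !sumnE !big_map => E.
rewrite (eq_bigr _ (fun K _ => esym (QmB_eq p K))) (eq_bigr _ (fun K _ => esym (QpB_eq p K))).
exact: E.
Qed.



Lemma Lst_ok : filter valid (genP 9) = LstLit.
Proof. by apply/eqP; rewrite Lst_okb. Qed.

Lemma C2 : [/\ all (fun l => l \in LstLit) (flatten Cl),
  all (fun l => count_mem l (flatten Cl) == 12) LstLit, uniq LstLit, size Cl = 840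
  & all (fun l => Kc l l == 9) LstLit].
Proof. case/and5P: C2b => a b c d e; split; [exact: a | exact: b | exact: c | exact/eqP | exact: e]. Qed.

Lemma code_Lst P : is_part333 P -> codeP P \in LstLit.
Proof. by move=> HP; rewrite -Lst_ok mem_filter valid_code // code_genP. Qed.

Local Open Scope ring_scope.

Lemma main_gen (L : seq (seq nat)) (Cl0 : seq (seq (seq nat))) :
  (forall P, is_part333 P -> codeP P \in L) -> uniq L -> all cl_ok Cl0 ->
  all (fun l => l \in L) (flatten Cl0) ->
  all (fun l => count_mem l (flatten Cl0) == 12%N) L -> size Cl0 = 840%N ->
  all (fun l => Kc l l == 9%N) L -> check34g L Cl0 ->
  forall (R : realType) (S : {set P333}),
  independent333 S -> #|S| = 70%N ->
  in_colspace (fun p : P333 => ((p \in S) : bool)%:R : R).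
Proof.
move=> codeL HU C1 C2a C2b HCs C5 C34 R S Hind Hcard.
have Hp (p : P333) : is_part333 (val p) := valP p.
have cinj : injective (fun p : P333 => codeP (val p)).
  by move=> p q /(code_inj (Hp p) (Hp q)) /val_inj.
pose s := [seq codeP (val q) | q <- enum S].
have us : uniq s by rewrite map_inj_uniq // enum_uniq.
have sL : forall l, l \in s -> l \in L by move=> l /mapP [q _ ->]; apply: codeL.
pose x := fun l : seq nat => l \in s.
have Hx70 : count x L = 70%N.
  transitivity (count (fun t => true && (t \in s)) L); first by [].
  rewrite cnt_swap // (eq_in_count (a2 := predT)); last by move=> t /sL ->.
  by rewrite count_predT size_map -cardE.
have Hxind : forall a b, adjc a b -> ~~ (x a && x b).
  move=> a b Hab; apply/negP => /andP[/mapP [q1 q1S e1] /mapP [q2 q2S e2]].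
  rewrite mem_enum in q1S; rewrite mem_enum in q2S.
  move/forallP: Hind => /(_ q1) /implyP /(_ q1S) /forallP /(_ q2) /implyP /(_ q2S) /negP; apply.
  by apply: adj_bridge => //; rewrite -e1 -e2.
have HxL : forall l, x l -> l \in L by exact: sL.
have Hconc := conc HU C1 C2a C2b HCs (HC3g C34) (HC4g C34) Hx70 Hxind HxL.
have key (p : P333) : (\sum_(e : Pair9) Mb (val p) e * \sum_(q in S) Mb (val q) e
    = 70 * (p \in S) + 140)%N.
  rewrite (eq_bigr (fun e => \sum_(q in S) Mb (val p) e * Mb (val q) e)%N); last first.
    by move=> e _; rewrite big_distrr.
  rewrite exchange_big /=.
  rewrite (eq_bigr (fun q => Kc (codeP (val p)) (codeP (val q)))); last first.
    by move=> q _; rewrite (Kab (Hp p) (Hp q)).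
  have xp : x (codeP (val p)) = (p \in S) by rewrite /x /s (mem_map cinj) mem_enum.
  rewrite -xp -(Hconc _ (codeL _ (Hp p))) -[RHS]big_filter.
  have pe : perm_eq [seq t <- L | x t] s.
    apply: uniq_perm; [exact: filter_uniq | exact: us |].
    by move=> t; rewrite mem_filter; case xt: (x t); rewrite //= sL.
  by rewrite (perm_big _ pe) /s big_map big_enum.
have k9 (p : P333) : (\sum_(e : Pair9) (Mb (val p) e : nat) = 9)%N.
  transitivity (\sum_(e : Pair9) (Mb (val p) e * Mb (val p) e))%N.
    by apply: eq_bigr => e _; case: (Mb _ _).
  by rewrite (Kab (Hp p) (Hp p)); apply/eqP; move/allP: C5; apply; apply: codeL.
exists (fun e => ((\sum_(q in S) Mb (val q) e)%:R / 70 - 2 / 9)).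
move=> p.
transitivity (\sum_(e : Pair9) (((Mb (val p) e * \sum_(q in S) Mb (val q) e)%N)%:R / 70
                 - (Mb (val p) e)%:R * (2 / 9)) : R); last first.
  by apply: eq_bigr => e _; rewrite /Mpair natrM mulrBr !mulrA.
rewrite big_split sumrN -!mulr_suml -!natr_sum key k9 natrD natrM.
rewrite /=; field; by rewrite ?pnatr_eq0.
Qed.

Unset Implicit Arguments.

Theorem corollary4p2 (R : realType) (S : {set P333}) :
  independent333 S -> #|S| = 70%N ->
  in_colspace (fun p : P333 => ((p \in S) : bool)%:R : R).
Proof.
have [C2a C2b' HU HCs C5] := C2.
exact: (main_gen code_Lst HU C1b C2a C2b' HCs C5 C34g).
Qed.
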